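(* The system with axioms L1 $=i(i(x,y),i(i(y,z),i(x,z)))$, L2 $=i(i(n(x),x),x)$, L3 $=i(x,i(n(x),y))$ and condensed detachment as sole rule of inference admits strong double-negation elimination.
   Context: Formulas are terms built from propositional variables using the binary connective $i$ (implication) and the unary connective $n$ (negation). Condensed detachment: from a major premiss $i(A,B)$ and a minor premiss $C$, after renaming variables so that the two premisses share no variables, if $A$ and $C$ are unifiable with most general unifier $\sigma$, infer $B\sigma$. Alphabetic variants of axioms count as axioms, and conclusions may be renamed. A proof is a finite sequence of formulas each an axiom or obtained from earlier lines by the rule; deduced steps are the non-axiom lines. Given a formula $B$, a formula $B^*$ is obtained from $B$ by selecting some set of doubly negated subformulas $n(n(q))$ of $B$ and replacing all occurrences of each selected subformula by $q$. A system admits strong double-negation elimination if whenever it proves $B$ and $B^*$ is obtained from $B$ in this way, there is a proof of $B^*$ in the system in which every subformula of the form $n(n(t))$ of a deduced step occurs (up to renaming of variables) as a subformula of $B^*$. *)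

(* Defs.v *)
From Stdlib Require Import List Arith.
Import ListNotations.

Inductive form : Type :=
| Var : nat -> form
| Imp : form -> form -> form
| Neg : form -> form.

Definition form_eq_dec (a b : form) : {a = b} + {a <> b}.
Proof. decide equality; apply Nat.eq_dec. Defined.

Fixpoint subst (s : nat -> form) (f : form) : form :=
  match f with
  | Var v => s v
  | Imp a b => Imp (subst s a) (subst s b)
  | Neg a => Neg (subst s a)
  end.

Fixpoint rename (r : nat -> nat) (f : form) : form :=
  match f with
  | Var v => Var (r v)
  | Imp a b => Imp (rename r a) (rename r b)
  | Neg a => Neg (rename r a)
  end.

Definition variant (A B : form) : Prop :=
  exists r : nat -> nat, (forall u v, r u = r v -> u = v) /\ rename r A = B.

Fixpoint occurs (v : nat) (f : form) : Prop :=
  match f with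
  | Var w => v = w
  | Imp a b => occurs v a \/ occurs v b
  | Neg a => occurs v a
  end.

Fixpoint sub (t f : form) : Prop :=
  t = f \/
  match f with
  | Var _ => False
  | Imp a b => sub t a \/ sub t b
  | Neg a => sub t a
  end.

Definition unifier (s : nat -> form) (A C : form) : Prop := subst s A = subst s C.

Definition mgu (s : nat -> form) (A C : form) : Prop :=
  unifier s A C /\
  forall t, unifier t A C -> exists l : nat -> form, forall v, t v = subst l (s v).

Definition cd (P Q D : form) : Prop :=
  exists A B Q' (s : nat -> form),
    variant P (Imp A B) /\ variant Q Q' /\
    (forall v, occurs v (Imp A B) -> ~ occurs v Q') /\
    mgu s A Q' /\ variant (subst s B) D.

Inductive just : Type :=
| JAx : just
| JCD : nat -> nat -> just.

Definition line := (form * just)%type.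

Definition valid_line (axioms : list form) (pf : list line) (k : nat) : Prop :=
  match nth k pf (Var 0, JAx) with
  | (f, JAx) => exists a, In a axioms /\ variant a f
  | (f, JCD i j) =>
      i < k /\ j < k /\
      cd (fst (nth i pf (Var 0, JAx))) (fst (nth j pf (Var 0, JAx))) f
  end.

Definition is_proof (axioms : list form) (pf : list line) (B : form) : Prop :=
  pf <> [] /\
  (forall k, k < length pf -> valid_line axioms pf k) /\
  fst (last pf (Var 0, JAx)) = B.

Definition provable (axioms : list form) (B : form) : Prop :=
  exists pf, is_proof axioms pf B.

Definition deduced_step (pf : list line) (D : form) : Prop :=
  exists i j, In (D, JCD i j) pf.

(* B* : every (original) occurrence of a selected subformula n(n(q)) is
   replaced by q (recursively inside q as well, so every occurrence of
   every selected subformula gets replaced) *)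
Fixpoint star (S : list form) (f : form) : form :=
  match f with
  | Var v => Var v
  | Imp a b => Imp (star S a) (star S b)
  | Neg a =>
      match a with
      | Neg q => if in_dec form_eq_dec f S then star S q
                 else Neg (star S a)
      | _ => Neg (star S a)
      end
  end.

Definition dn_selection (S : list form) (B : form) : Prop :=
  forall t, In t S -> sub t B /\ exists q, t = Neg (Neg q).

Definition strong_dn_elim (axioms : list form) : Prop :=
  forall B S, provable axioms B -> dn_selection S B ->
    exists pf, is_proof axioms pf (star S B) /\
      forall D, deduced_step pf D ->
        forall q, sub (Neg (Neg q)) D ->
          exists u, sub u (star S B) /\ variant (Neg (Neg q)) u.

Definition x := Var 0.
Definition y := Var 1.
Definition z := Var 2.
Definition L1 := Imp (Imp x y) (Imp (Imp y z) (Imp x z)).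
Definition L2 := Imp (Imp (Neg x) x) x.
Definition L3 := Imp x (Imp (Neg x) y).

(* Main.v *)
Require Import Defs.
From Stdlib Require Import List Arith Lia Bool.
Import ListNotations.

Fixpoint vars (f : form) : list nat :=
  match f with
  | Var v => [v]
  | Imp a b => vars a ++ vars b
  | Neg a => vars a
  end.

Lemma occurs_vars : forall v f, occurs v f <-> In v (vars f).
Proof.
  induction f; simpl.
  - split; [intros ->; auto | intros [->|[]]; auto].
  - rewrite in_app_iff. tauto.
  - tauto.
Qed.

Lemma occurs_dec : forall v f, {occurs v f} + {~ occurs v f}.
Proof.
  intros v f. destruct (in_dec Nat.eq_dec v (vars f)) as [H|H].
  - left. apply occurs_vars. exact H.
  - right. rewrite occurs_vars. exact H.
Defined.

Fixpoint maxvar (f : form) : nat :=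
  match f with
  | Var v => v
  | Imp a b => Nat.max (maxvar a) (maxvar b)
  | Neg a => maxvar a
  end.

Lemma occurs_maxvar : forall v f, occurs v f -> v <= maxvar f.
Proof. induction f; simpl; intros H.
  - lia.
  - destruct H as [H|H]; [apply IHf1 in H|apply IHf2 in H]; lia.
  - auto.
Qed.

Lemma subst_ext : forall s1 s2 f, (forall v, occurs v f -> s1 v = s2 v) -> subst s1 f = subst s2 f.
Proof.
  induction f; simpl; intros H.
  - apply H; auto.
  - rewrite IHf1, IHf2; auto.
  - rewrite IHf; auto.
Qed.

Lemma subst_ext_inv : forall s1 s2 f, subst s1 f = subst s2 f -> forall v, occurs v f -> s1 v = s2 v.
Proof.
  induction f; simpl; intros H v Hv.
  - subst; auto.
  - injection H; intros; destruct Hv; eauto.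
  - injection H; intros; eauto.
Qed.

Lemma rename_subst : forall r f, rename r f = subst (fun v => Var (r v)) f.
Proof. induction f; simpl; congruence. Qed.

Lemma subst_subst : forall t s f, subst t (subst s f) = subst (fun v => subst t (s v)) f.
Proof. induction f; simpl; congruence. Qed.

Lemma subst_var : forall f, subst Var f = f.
Proof. induction f; simpl; congruence. Qed.

Lemma rename_rename : forall r1 r2 f, rename r2 (rename r1 f) = rename (fun v => r2 (r1 v)) f.
Proof. induction f; simpl; congruence. Qed.

Lemma rename_ext : forall r1 r2 f, (forall v, occurs v f -> r1 v = r2 v) -> rename r1 f = rename r2 f.
Proof. intros. rewrite !rename_subst. apply subst_ext. intros; f_equal; auto. Qed.

Lemma rename_id : forall f, rename (fun v => v) f = f.
Proof. induction f; simpl; congruence. Qed.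

Lemma occurs_rename : forall r v f, occurs v (rename r f) -> exists w, occurs w f /\ v = r w.
Proof.
  induction f; simpl; intros H.
  - eauto.
  - destruct H as [H|H]; [destruct (IHf1 H) as [w [? ?]]|destruct (IHf2 H) as [w [? ?]]]; eauto.
  - auto.
Qed.

Lemma occurs_subst : forall s v f, occurs v (subst s f) -> exists w, occurs w f /\ occurs v (s w).
Proof.
  induction f; simpl; intros H.
  - eauto.
  - destruct H as [H|H]; [destruct (IHf1 H) as [w [? ?]]|destruct (IHf2 H) as [w [? ?]]]; eauto.
  - auto.
Qed.

Lemma occurs_subst_intro : forall s v w f, occurs w f -> occurs v (s w) -> occurs v (subst s f).
Proof.
  induction f; simpl; intros H1 H2.
  - subst; auto.
  - destruct H1; eauto.
  - eauto.
Qed.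

Lemma variant_refl : forall f, variant f f.
Proof. intros f. exists (fun v => v). split; auto. apply rename_id. Qed.

Lemma variant_trans : forall a b c, variant a b -> variant b c -> variant a c.
Proof.
  intros a b c [r1 [I1 E1]] [r2 [I2 E2]]. exists (fun v => r2 (r1 v)). split.
  - intros u v H; auto.
  - subst. rewrite rename_rename. auto.
Qed.

Fixpoint maxl (l : list nat) : nat := match l with [] => 0 | x :: l => Nat.max x (maxl l) end.
Lemma maxl_in : forall x l, In x l -> x <= maxl l.
Proof. induction l; simpl; intros H; [destruct H|destruct H; subst; try lia]. apply IHl in H; lia. Qed.

Lemma variant_inj_on : forall f r,
  (forall u w, occurs u f -> occurs w f -> r u = r w -> u = w) -> variant f (rename r f).
Proof.
  intros f r Hinj.
  set (M := S (maxl (map r (vars f)))).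
  exists (fun u => if in_dec Nat.eq_dec u (vars f) then r u else u + M). split.
  - intros u w. destruct (in_dec Nat.eq_dec u (vars f)) as [Hu|Hu];
    destruct (in_dec Nat.eq_dec w (vars f)) as [Hw|Hw]; intros H.
    + apply Hinj; auto; apply occurs_vars; auto.
    + assert (r u <= maxl (map r (vars f))) by (apply maxl_in, in_map; auto). unfold M in *; lia.
    + assert (r w <= maxl (map r (vars f))) by (apply maxl_in, in_map; auto). unfold M in *; lia.
    + lia.
  - apply rename_ext. intros v Hv. apply occurs_vars in Hv.
    destruct (in_dec Nat.eq_dec v (vars f)); tauto.
Qed.

Lemma variant_sym : forall a b, variant a b -> variant b a.
Proof.
  intros a b [r [I E]]. subst b.
  set (g := fun w => match find (fun v => Nat.eqb (r v) w) (vars a) with Some v => v | None => w end).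
  assert (Hg : forall v, occurs v a -> g (r v) = v).
  { intros v Hv. unfold g. apply occurs_vars in Hv.
    destruct (find (fun u => Nat.eqb (r u) (r v)) (vars a)) eqn:E.
    - apply find_some in E. destruct E as [_ E]. apply Nat.eqb_eq in E. auto.
    - eapply find_none in E; [|exact Hv]. rewrite Nat.eqb_refl in E. discriminate. }
  assert (Heq : rename g (rename r a) = a).
  { rewrite rename_rename. rewrite <- (rename_id a) at 2. apply rename_ext. auto. }
  rewrite <- Heq at 2. apply variant_inj_on.
  intros u w Hu Hw H.
  apply occurs_rename in Hu. apply occurs_rename in Hw.
  destruct Hu as [u' [Hu' ->]]. destruct Hw as [w' [Hw' ->]].
  rewrite !Hg in H by auto. subst; auto.
Qed.

Lemma shift_inj : forall N, forall u v, u + N = v + N -> u = v.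
Proof. intros; lia. Qed.

Lemma unifier_sym : forall s A C, unifier s A C -> unifier s C A.
Proof. unfold unifier; auto. Qed.
Lemma mgu_sym : forall s A C, mgu s A C -> mgu s C A.
Proof. intros s A C [H1 H2]. split; [apply unifier_sym; auto|]. intros t Ht. apply H2. apply unifier_sym; auto. Qed.

Lemma matcher_mgu : forall s X Y,
  (forall v, ~ occurs v X -> s v = Var v) ->
  (forall v, occurs v Y -> ~ occurs v X) ->
  subst s X = Y -> mgu s X Y.
Proof.
  intros s X Y H1 H2 H3. split.
  - unfold unifier. rewrite H3. rewrite <- (subst_var Y) at 1. symmetry. apply subst_ext.
    intros v Hv. apply H1. apply H2. auto.
  - intros t Ht. exists t. intros v.
    destruct (occurs_dec v X) as [Hv|Hv].
    + unfold unifier in Ht. rewrite <- H3 in Ht. rewrite subst_subst in Ht.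
      exact (subst_ext_inv _ _ _ Ht v Hv).
    + rewrite H1; auto.
Qed.

Definition AX := [L1; L2; L3].

Inductive Der (G : form -> Prop) : form -> Prop :=
| Dax : forall a f, In a AX -> variant a f -> Der G f
| Dcd : forall P Q D, Der G P -> Der G Q -> cd P Q D -> G D -> Der G D.

Definition dflt : line := (Var 0, JAx).

Definition shiftj (n : nat) (l : line) : line :=
  match l with
  | (f, JAx) => (f, JAx)
  | (f, JCD i j) => (f, JCD (i + n) (j + n))
  end.

Lemma fst_shiftj : forall n l, fst (shiftj n l) = fst l.
Proof. intros n [f []]; reflexivity. Qed.

Lemma last_nth : forall (pf : list line) d, last pf d = nth (length pf - 1) pf d.
Proof.
  induction pf as [|a pf IH]; intros d; auto.
  destruct pf as [|b pf']; auto.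
  change (last (a :: b :: pf') d) with (last (b :: pf') d). rewrite IH.
  simpl. rewrite Nat.sub_0_r. auto.
Qed.

Lemma nth_P : forall (pP pQ : list line) X k, k < length pP -> nth k (pP ++ pQ ++ X) dflt = nth k pP dflt.
Proof. intros. rewrite app_nth1; auto. Qed.
Lemma nth_Q : forall (pP pQ : list line) X k, k < length pQ ->
  nth (k + length pP) (pP ++ map (shiftj (length pP)) pQ ++ X) dflt = shiftj (length pP) (nth k pQ dflt).
Proof.
  intros. rewrite app_nth2 by lia. replace (k + length pP - length pP) with k by lia.
  rewrite app_nth1 by (rewrite length_map; auto).
  rewrite nth_indep with (d' := shiftj (length pP) dflt) by (rewrite length_map; auto).
  apply map_nth.
Qed.
Lemma nth_X : forall (pP pQ : list line) x,
  nth (length pP + length pQ) (pP ++ map (shiftj (length pP)) pQ ++ [x]) dflt = x.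
Proof.
  intros. rewrite app_nth2 by lia. rewrite app_nth2 by (rewrite length_map; lia).
  rewrite length_map. replace (length pP + length pQ - length pP - length pQ) with 0 by lia. reflexivity.
Qed.

Lemma Der_proof : forall G F, Der G F ->
  exists pf, pf <> [] /\ (forall k, k < length pf -> valid_line AX pf k) /\
    fst (last pf dflt) = F /\ (forall D i j, In (D, JCD i j) pf -> G D).
Proof.
  intros G F H. induction H as [a f Ha Hv | P Q D HP IHP HQ IHQ Hcd HG].
  - exists [(f, JAx)]. split; [discriminate|]. split; [|split; [reflexivity|]].
    + intros k Hk. simpl in Hk. assert (k = 0) by lia. subst. unfold valid_line; simpl. exists a; split; [exact Ha|exact Hv].
    + intros D i j [E|[]]. discriminate.
  - destruct IHP as [pP [nP [vP [lP dP]]]]. destruct IHQ as [pQ [nQ [vQ [lQ dQ]]]].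
    assert (Hn : length pP > 0) by (destruct pP; simpl in *; [congruence|lia]).
    assert (Hm : length pQ > 0) by (destruct pQ; simpl in *; [congruence|lia]).
    set (X := [(D, JCD (length pP - 1) (length pP + length pQ - 1))]).
    exists (pP ++ map (shiftj (length pP)) pQ ++ X).
    assert (Hlen : length (pP ++ map (shiftj (length pP)) pQ ++ X) = length pP + length pQ + 1).
    { unfold X. rewrite !length_app, length_map. simpl. lia. }
    rewrite last_nth in lP, lQ.
    split; [destruct pP; [congruence|discriminate]|].
    split; [|split].
    + intros k Hk. rewrite Hlen in Hk. unfold valid_line. fold dflt.
      destruct (lt_dec k (length pP)) as [H1|H1].
      * rewrite nth_P by auto.
        specialize (vP k H1). unfold valid_line in vP. fold dflt in vP.
        destruct (nth k pP dflt) as [f [|i j]]; auto.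
        destruct vP as [Hi [Hj Hc]]. split; [auto|split; [auto|]].
        rewrite !nth_P by lia. auto.
      * destruct (lt_dec (k - length pP) (length pQ)) as [H2|H2].
        -- replace k with (k - length pP + length pP) by lia. rewrite nth_Q by auto.
           specialize (vQ (k - length pP) H2). unfold valid_line in vQ. fold dflt in vQ.
           destruct (nth (k - length pP) pQ dflt) as [f [|i j]]; simpl; auto.
           destruct vQ as [Hi [Hj Hc]]. split; [lia|split; [lia|]].
           rewrite !nth_Q by lia. rewrite !fst_shiftj. auto.
        -- replace k with (length pP + length pQ) by lia. unfold X. rewrite nth_X.
           split; [lia|split; [lia|]].
           rewrite nth_P by lia. rewrite lP.
           replace (length pP + length pQ - 1) with (length pQ - 1 + length pP) by lia.
           rewrite nth_Q by lia. rewrite fst_shiftj, lQ. auto.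
    + rewrite last_nth, Hlen. replace (length pP + length pQ + 1 - 1) with (length pP + length pQ) by lia.
      unfold X. rewrite nth_X. reflexivity.
    + intros D' i j Hin. apply in_app_or in Hin. destruct Hin as [Hin|Hin]; [eauto|].
      apply in_app_or in Hin. destruct Hin as [Hin|[Hin|[]]].
      * apply in_map_iff in Hin. destruct Hin as [[f jj] [E Hin]].
        destruct jj; simpl in E; inversion E; subst; eauto.
      * inversion Hin; subst; auto.
Qed.

Lemma Der_variant : forall (G : form -> Prop) F F', Der G F -> variant F F' -> G F' -> Der G F'.
Proof.
  intros G F F' H Hv HG. inversion H; subst.
  - eapply Dax; eauto. eapply variant_trans; eauto.
  - destruct H2 as [A [B [Q' [s [H5 [H6 [H7 [H8 H9]]]]]]]].
    apply (Dcd G P Q F'); auto. exists A, B, Q', s. split; [auto|split;[auto|split;[auto|split;[auto|]]]]. eapply variant_trans; eauto.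
Qed.

Lemma cd_match1 : forall A B Q (sg : nat -> form),
  subst sg A = Q ->
  (forall v, occurs v B -> ~ occurs v A -> ~ occurs v Q /\ sg v = Var v) ->
  cd (Imp A B) Q (subst sg B).
Proof.
  intros A B Q sg HA HB.
  set (N := S (Nat.max (maxvar (Imp A B)) (maxvar Q))).
  set (r := fun v => v + N).
  set (Q' := rename r Q).
  set (s' := fun v => if occurs_dec v A then rename r (sg v) else Var v).
  exists A, B, Q', s'. split; [apply variant_refl|]. split.
  { exists r. split; [intros u v; unfold r; lia|reflexivity]. }
  assert (HQ' : forall v, occurs v Q' -> N <= v).
  { intros v Hv. unfold Q' in Hv. apply occurs_rename in Hv. destruct Hv as [w [_ ->]]. unfold r; lia. }
  assert (HAB : forall v, occurs v (Imp A B) -> v < N).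
  { intros v Hv. apply occurs_maxvar in Hv. unfold N. lia. }
  split.
  { intros v H1 H2. apply HQ' in H2. apply HAB in H1. lia. }
  split.
  { apply matcher_mgu.
    - intros v Hv. unfold s'. destruct (occurs_dec v A); tauto.
    - intros v Hv HvA. apply HQ' in Hv. assert (v < N) by (apply HAB; simpl; auto). lia.
    - unfold Q'. rewrite <- HA. rewrite rename_subst, subst_subst. apply subst_ext.
      intros v Hv. unfold s'. destruct (occurs_dec v A); [|tauto]. rewrite rename_subst. reflexivity. }
  set (f := fun w => if Nat.ltb w N then w else w - N).
  assert (E : rename f (subst s' B) = subst sg B).
  { rewrite rename_subst, subst_subst. apply subst_ext. intros v Hv.
    unfold s'. destruct (occurs_dec v A) as [HvA|HvA].
    - rewrite rename_subst, subst_subst. rewrite <- (subst_var (sg v)) at 2. apply subst_ext.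
      intros w _. unfold f, r. simpl. destruct (Nat.ltb (w + N) N) eqn:E; [apply Nat.ltb_lt in E; lia|]. f_equal; lia.
    - simpl. destruct (HB v Hv HvA) as [_ ->]. unfold f.
      assert (v < N) by (apply HAB; simpl; auto). apply Nat.ltb_lt in H. rewrite H. reflexivity. }
  rewrite <- E. apply variant_inj_on.
  intros u w Hu Hw Huw.
  assert (K : forall x, occurs x (subst s' B) -> (x < N /\ occurs x B /\ ~ occurs x A) \/ (N <= x /\ occurs (x - N) Q)).
  { intros x Hx. apply occurs_subst in Hx. destruct Hx as [y [Hy Hx]]. unfold s' in Hx.
    destruct (occurs_dec y A) as [HyA|HyA].
    - right. apply occurs_rename in Hx. destruct Hx as [z [Hz ->]]. unfold r. split; [lia|].
      replace (z + N - N) with z by lia. rewrite <- HA. eapply occurs_subst_intro; eauto.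
    - left. simpl in Hx. subst. split; [apply HAB; simpl; auto|auto]. }
  unfold f in Huw.
  destruct (K u Hu) as [[Hu1 [Hu2 Hu3]]|[Hu1 Hu2]]; destruct (K w Hw) as [[Hw1 [Hw2 Hw3]]|[Hw1 Hw2]];
  (destruct (Nat.ltb u N) eqn:E1; [apply Nat.ltb_lt in E1|apply Nat.ltb_ge in E1]);
  (destruct (Nat.ltb w N) eqn:E2; [apply Nat.ltb_lt in E2|apply Nat.ltb_ge in E2]); try lia.
  - exfalso. destruct (HB _ Hu2 Hu3) as [Hc _]. rewrite Huw in Hc. contradiction.
  - exfalso. destruct (HB _ Hw2 Hw3) as [Hc _]. rewrite <- Huw in Hc. contradiction.
Qed.

Lemma cd_match2 : forall A B Q (sg : nat -> form),
  subst sg Q = A -> cd (Imp A B) Q B.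
Proof.
  intros A B Q sg HA.
  set (N := S (Nat.max (maxvar (Imp A B)) (maxvar Q))).
  set (r := fun v => v + N).
  set (Q' := rename r Q).
  set (s' := fun v => if occurs_dec v Q' then sg (v - N) else Var v).
  assert (HQ' : forall v, occurs v Q' -> N <= v).
  { intros v Hv. unfold Q' in Hv. apply occurs_rename in Hv. destruct Hv as [w [_ ->]]. unfold r; lia. }
  assert (HAB : forall v, occurs v (Imp A B) -> v < N).
  { intros v Hv. apply occurs_maxvar in Hv. unfold N. lia. }
  exists A, B, Q', s'. split; [apply variant_refl|]. split.
  { exists r. split; [intros u v; unfold r; lia|reflexivity]. }
  split.
  { intros v H1 H2. apply HQ' in H2. apply HAB in H1. lia. }
  split.
  { apply mgu_sym. apply matcher_mgu.
    - intros v Hv. unfold s'. destruct (occurs_dec v Q'); tauto.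
    - intros v Hv HvA. apply HQ' in HvA. assert (v < N) by (apply HAB; simpl; auto). lia.
    - rewrite <- HA. unfold Q'. rewrite rename_subst, subst_subst. apply subst_ext.
      intros v Hv. simpl. unfold s'. unfold r at 1 2. destruct (occurs_dec (v + N) Q') as [_|Hn].
      + unfold r. f_equal. lia.
      + exfalso. apply Hn. unfold Q'. rewrite rename_subst. eapply occurs_subst_intro; eauto. simpl. unfold r. auto. }
  replace (subst s' B) with B; [apply variant_refl|].
  rewrite <- (subst_var B) at 1. apply subst_ext. intros v Hv. unfold s'.
  destruct (occurs_dec v Q') as [H|H]; auto. apply HQ' in H. assert (v < N) by (apply HAB; simpl; auto). lia.
Qed.

Lemma Der_match1 : forall (G : form -> Prop) A B Q (sg : nat -> form),
  Der G (Imp A B) -> Der G Q -> subst sg A = Q ->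
  (forall v, occurs v B -> ~ occurs v A -> ~ occurs v Q /\ sg v = Var v) ->
  G (subst sg B) -> Der G (subst sg B).
Proof. intros. apply (Dcd G (Imp A B) Q); auto. apply cd_match1; auto. Qed.

Lemma Der_match2 : forall (G : form -> Prop) A B Q (sg : nat -> form),
  Der G (Imp A B) -> Der G Q -> subst sg Q = A -> G B -> Der G B.
Proof. intros. apply (Dcd G (Imp A B) Q); auto. eapply cd_match2; eauto. Qed.

Definition inj_check (rho : nat -> nat) (l : list nat) : bool :=
  forallb (fun u => forallb (fun w => negb (Nat.eqb (rho u) (rho w)) || Nat.eqb u w) l) l.

Lemma inj_check_ok : forall rho F, inj_check rho (vars F) = true ->
  forall u w, occurs u F -> occurs w F -> rho u = rho w -> u = w.
Proof.
  intros rho F H u w Hu Hw E. apply occurs_vars in Hu. apply occurs_vars in Hw.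
  unfold inj_check in H. rewrite forallb_forall in H. specialize (H u Hu).
  rewrite forallb_forall in H. specialize (H w Hw). rewrite E, Nat.eqb_refl in H. simpl in H.
  apply Nat.eqb_eq; auto.
Qed.

Lemma cd_concrete : forall A B Q N s D (rho : nat -> nat),
  forallb (fun v => Nat.ltb v N) (vars (Imp A B)) = true ->
  subst s A = subst s (rename (fun v => v + N) Q) ->
  (forall t, subst t A = subst t (rename (fun v => v + N) Q) -> forall v, t v = subst t (s v)) ->
  inj_check rho (vars (subst s B)) = true ->
  rename rho (subst s B) = D ->
  cd (Imp A B) Q D.
Proof.
  intros A B Q N s D rho H1 H2 H3 H4 H5.
  exists A, B, (rename (fun v => v + N) Q), s.
  split; [apply variant_refl|]. split.
  { exists (fun v => v + N). split; [intros; lia|reflexivity]. }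
  split.
  { intros v Hv Hv'. apply occurs_rename in Hv'. destruct Hv' as [w [_ ->]].
    apply occurs_vars in Hv. rewrite forallb_forall in H1. apply H1 in Hv. apply Nat.ltb_lt in Hv. lia. }
  split.
  { split; [exact H2|]. intros t Ht. exists t. apply H3; auto. }
  subst D. apply variant_inj_on. apply inj_check_ok; auto.
Qed.

Fixpoint dnfree (f : form) : bool :=
  match f with
  | Var _ => true
  | Imp a b => dnfree a && dnfree b
  | Neg a => match a with Neg _ => false | _ => dnfree a end
  end.

Lemma dnfree_sub : forall f q, dnfree f = true -> ~ sub (Neg (Neg q)) f.
Proof.
  induction f; intros q H Hs; simpl in Hs.
  - destruct Hs as [E|[]]. discriminate.
  - simpl in H. apply andb_true_iff in H. destruct H as [Ha Hb].
    destruct Hs as [E|[Hs|Hs]]; [discriminate|eapply IHf1; eauto|eapply IHf2; eauto].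
  - destruct Hs as [E|Hs].
    + inversion E; subst. simpl in H. discriminate.
    + simpl in H. destruct f; try discriminate; eapply IHf; eauto.
Qed.

Definition DNF (f : form) : Prop := dnfree f = true.

Lemma Der_mono : forall (G1 G2 : form -> Prop) F, Der G1 F -> (forall x, G1 x -> G2 x) -> Der G2 F.
Proof. intros G1 G2 F H Hm. induction H as [a f Ha Hv|P Q D HP IHP HQ IHQ Hc HG]; [eapply Dax; eauto|]. apply (Dcd G2 P Q D); auto. Qed.

Lemma DerL1 : forall G, Der G L1.
Proof. intros. apply (Dax G L1); [unfold AX; simpl; tauto|apply variant_refl]. Qed.
Lemma DerL2 : forall G, Der G L2.
Proof. intros. apply (Dax G L2); [unfold AX; simpl; tauto|apply variant_refl]. Qed.
Lemma DerL3 : forall G, Der G L3.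
Proof. intros. apply (Dax G L3); [unfold AX; simpl; tauto|apply variant_refl]. Qed.
Tactic Notation "mgu_tac" int(M) := intros t H v; cbn in H; do M (destruct v as [|v]; [cbn; first [reflexivity | congruence] |]); reflexivity.
Definition L1f := L1. Definition L2f := L2. Definition L3f := L3.
Definition gdf_dn_0 := (Imp (Imp (Imp (Neg (Var 0)) (Var 1)) (Var 2)) (Imp (Var 0) (Var 2))).
Lemma gdn_0 : Der DNF gdf_dn_0.
Proof.
  apply (Dcd DNF L1f L3f gdf_dn_0 (DerL1 DNF) (DerL3 DNF)); [|reflexivity].
  unfold L1f. apply (cd_concrete _ _ _ 3 (fun v => match v with | 0 => (Var 3) | 1 => (Imp (Neg (Var 3)) (Var 4)) | _ => Var v end) _ (fun v => match v with | 2 => 2 | 3 => 0 | 4 => 1 | _ => v end)); [reflexivity|reflexivity| |reflexivity|reflexivity].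
  unfold L3f. mgu_tac 2.
Qed.
Definition gdf_dn_1 := (Imp (Var 0) (Var 0)).
Lemma gdn_1 : Der DNF gdf_dn_1.
Proof.
  apply (Dcd DNF gdf_dn_0 L2f gdf_dn_1 (gdn_0) (DerL2 DNF)); [|reflexivity].
  unfold gdf_dn_0. apply (cd_concrete _ _ _ 3 (fun v => match v with | 0 => (Var 3) | 1 => (Var 3) | 2 => (Var 3) | _ => Var v end) _ (fun v => match v with | 3 => 0 | _ => v end)); [reflexivity|reflexivity| |reflexivity|reflexivity].
  unfold L2f. mgu_tac 3.
Qed.
Definition gdf_dn_2 := (Imp (Imp (Imp (Imp (Var 0) (Var 1)) (Imp (Var 2) (Var 1))) (Var 3)) (Imp (Imp (Var 2) (Var 0)) (Var 3))).
Lemma gdn_2 : Der DNF gdf_dn_2.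
Proof.
  apply (Dcd DNF L1f L1f gdf_dn_2 (DerL1 DNF) (DerL1 DNF)); [|reflexivity].
  unfold L1f. apply (cd_concrete _ _ _ 3 (fun v => match v with | 0 => (Imp (Var 3) (Var 4)) | 1 => (Imp (Imp (Var 4) (Var 5)) (Imp (Var 3) (Var 5))) | _ => Var v end) _ (fun v => match v with | 2 => 3 | 3 => 2 | 4 => 0 | 5 => 1 | _ => v end)); [reflexivity|reflexivity| |reflexivity|reflexivity].
  unfold L1f. mgu_tac 2.
Qed.
Definition gdf_dn_3 := (Imp (Neg (Imp (Var 0) (Var 0))) (Var 1)).
Lemma gdn_3 : Der DNF gdf_dn_3.
Proof.
  apply (Dcd DNF L3f gdf_dn_1 gdf_dn_3 (DerL3 DNF) (gdn_1)); [|reflexivity].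
  unfold L3f. apply (cd_concrete _ _ _ 2 (fun v => match v with | 0 => (Imp (Var 2) (Var 2)) | _ => Var v end) _ (fun v => match v with | 1 => 1 | 2 => 0 | _ => v end)); [reflexivity|reflexivity| |reflexivity|reflexivity].
  unfold gdf_dn_1. mgu_tac 1.
Qed.
Definition gdf_dn_4 := (Imp (Imp (Var 0) (Var 1)) (Imp (Neg (Imp (Var 2) (Var 2))) (Var 1))).
Lemma gdn_4 : Der DNF gdf_dn_4.
Proof.
  apply (Dcd DNF L1f gdf_dn_3 gdf_dn_4 (DerL1 DNF) (gdn_3)); [|reflexivity].
  unfold L1f. apply (cd_concrete _ _ _ 3 (fun v => match v with | 0 => (Neg (Imp (Var 3) (Var 3))) | 1 => (Var 4) | _ => Var v end) _ (fun v => match v with | 2 => 1 | 3 => 2 | 4 => 0 | _ => v end)); [reflexivity|reflexivity| |reflexivity|reflexivity].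
  unfold gdf_dn_3. mgu_tac 2.
Qed.
Definition gdf_dn_5 := (Imp (Var 0) (Imp (Neg (Imp (Var 1) (Var 1))) (Var 2))).
Lemma gdn_5 : Der DNF gdf_dn_5.
Proof.
  apply (Dcd DNF gdf_dn_0 gdf_dn_4 gdf_dn_5 (gdn_0) (gdn_4)); [|reflexivity].
  unfold gdf_dn_0. apply (cd_concrete _ _ _ 3 (fun v => match v with | 1 => (Var 4) | 2 => (Imp (Neg (Imp (Var 5) (Var 5))) (Var 4)) | 3 => (Neg (Var 0)) | _ => Var v end) _ (fun v => match v with | 0 => 0 | 4 => 2 | 5 => 1 | _ => v end)); [reflexivity|reflexivity| |reflexivity|reflexivity].
  unfold gdf_dn_4. mgu_tac 4.
Qed.
Definition gdf_dn_6 := (Imp (Imp (Imp (Neg (Imp (Var 0) (Var 0))) (Var 1)) (Var 2)) (Imp (Var 3) (Var 2))).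
Lemma gdn_6 : Der DNF gdf_dn_6.
Proof.
  apply (Dcd DNF L1f gdf_dn_5 gdf_dn_6 (DerL1 DNF) (gdn_5)); [|reflexivity].
  unfold L1f. apply (cd_concrete _ _ _ 3 (fun v => match v with | 0 => (Var 3) | 1 => (Imp (Neg (Imp (Var 4) (Var 4))) (Var 5)) | _ => Var v end) _ (fun v => match v with | 2 => 2 | 3 => 3 | 4 => 0 | 5 => 1 | _ => v end)); [reflexivity|reflexivity| |reflexivity|reflexivity].
  unfold gdf_dn_5. mgu_tac 2.
Qed.
Definition gdf_dn_7 := (Imp (Var 0) (Imp (Var 1) (Var 1))).
Lemma gdn_7 : Der DNF gdf_dn_7.
Proof.
  apply (Dcd DNF gdf_dn_6 L2f gdf_dn_7 (gdn_6) (DerL2 DNF)); [|reflexivity].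
  unfold gdf_dn_6. apply (cd_concrete _ _ _ 4 (fun v => match v with | 1 => (Imp (Var 0) (Var 0)) | 2 => (Imp (Var 0) (Var 0)) | 4 => (Imp (Var 0) (Var 0)) | _ => Var v end) _ (fun v => match v with | 0 => 1 | 3 => 0 | _ => v end)); [reflexivity|reflexivity| |reflexivity|reflexivity].
  unfold L2f. mgu_tac 5.
Qed.
Definition gdf_dn_8 := (Imp (Imp (Imp (Var 0) (Var 0)) (Var 1)) (Imp (Var 2) (Var 1))).
Lemma gdn_8 : Der DNF gdf_dn_8.
Proof.
  apply (Dcd DNF L1f gdf_dn_7 gdf_dn_8 (DerL1 DNF) (gdn_7)); [|reflexivity].
  unfold L1f. apply (cd_concrete _ _ _ 3 (fun v => match v with | 0 => (Var 3) | 1 => (Imp (Var 4) (Var 4)) | _ => Var v end) _ (fun v => match v with | 2 => 1 | 3 => 2 | 4 => 0 | _ => v end)); [reflexivity|reflexivity| |reflexivity|reflexivity].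
  unfold gdf_dn_7. mgu_tac 2.
Qed.
Definition gdf_dn_9 := (Imp (Imp (Var 0) (Var 1)) (Imp (Imp (Neg (Var 0)) (Var 0)) (Var 1))).
Lemma gdn_9 : Der DNF gdf_dn_9.
Proof.
  apply (Dcd DNF L1f L2f gdf_dn_9 (DerL1 DNF) (DerL2 DNF)); [|reflexivity].
  unfold L1f. apply (cd_concrete _ _ _ 3 (fun v => match v with | 0 => (Imp (Neg (Var 3)) (Var 3)) | 1 => (Var 3) | _ => Var v end) _ (fun v => match v with | 2 => 1 | 3 => 0 | _ => v end)); [reflexivity|reflexivity| |reflexivity|reflexivity].
  unfold L2f. mgu_tac 2.
Qed.
Definition gdf_dn_10 := (Imp (Var 0) (Imp (Imp (Neg (Var 1)) (Var 1)) (Var 1))).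
Lemma gdn_10 : Der DNF gdf_dn_10.
Proof.
  apply (Dcd DNF gdf_dn_8 gdf_dn_9 gdf_dn_10 (gdn_8) (gdn_9)); [|reflexivity].
  unfold gdf_dn_8. apply (cd_concrete _ _ _ 3 (fun v => match v with | 0 => (Var 3) | 1 => (Imp (Imp (Neg (Var 3)) (Var 3)) (Var 3)) | 4 => (Var 3) | _ => Var v end) _ (fun v => match v with | 2 => 0 | 3 => 1 | _ => v end)); [reflexivity|reflexivity| |reflexivity|reflexivity].
  unfold gdf_dn_9. mgu_tac 5.
Qed.
Definition gdf_dn_11 := (Imp (Imp (Imp (Imp (Neg (Var 0)) (Var 0)) (Var 0)) (Var 1)) (Imp (Var 2) (Var 1))).
Lemma gdn_11 : Der DNF gdf_dn_11.
Proof.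
  apply (Dcd DNF L1f gdf_dn_10 gdf_dn_11 (DerL1 DNF) (gdn_10)); [|reflexivity].
  unfold L1f. apply (cd_concrete _ _ _ 3 (fun v => match v with | 0 => (Var 3) | 1 => (Imp (Imp (Neg (Var 4)) (Var 4)) (Var 4)) | _ => Var v end) _ (fun v => match v with | 2 => 1 | 3 => 2 | 4 => 0 | _ => v end)); [reflexivity|reflexivity| |reflexivity|reflexivity].
  unfold gdf_dn_10. mgu_tac 2.
Qed.
Definition gdf_dn_12 := (Imp (Imp (Var 0) (Imp (Neg (Var 1)) (Var 1))) (Imp (Var 2) (Imp (Var 0) (Var 1)))).
Lemma gdn_12 : Der DNF gdf_dn_12.
Proof.
  apply (Dcd DNF gdf_dn_2 gdf_dn_11 gdf_dn_12 (gdn_2) (gdn_11)); [|reflexivity].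
  unfold gdf_dn_2. apply (cd_concrete _ _ _ 4 (fun v => match v with | 0 => (Imp (Neg (Var 4)) (Var 4)) | 1 => (Var 4) | 3 => (Imp (Var 6) (Imp (Var 2) (Var 4))) | 5 => (Imp (Var 2) (Var 4)) | _ => Var v end) _ (fun v => match v with | 2 => 0 | 4 => 1 | 6 => 2 | _ => v end)); [reflexivity|reflexivity| |reflexivity|reflexivity].
  unfold gdf_dn_11. mgu_tac 6.
Qed.
Definition gdf_dn_13 := (Imp (Var 0) (Imp (Imp (Var 1) (Var 2)) (Imp (Neg (Var 0)) (Var 2)))).
Lemma gdn_13 : Der DNF gdf_dn_13.
Proof.
  apply (Dcd DNF gdf_dn_0 L1f gdf_dn_13 (gdn_0) (DerL1 DNF)); [|reflexivity].
  unfold gdf_dn_0. apply (cd_concrete _ _ _ 3 (fun v => match v with | 1 => (Var 4) | 2 => (Imp (Imp (Var 4) (Var 5)) (Imp (Neg (Var 0)) (Var 5))) | 3 => (Neg (Var 0)) | _ => Var v end) _ (fun v => match v with | 0 => 0 | 4 => 1 | 5 => 2 | _ => v end)); [reflexivity|reflexivity| |reflexivity|reflexivity].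
  unfold L1f. mgu_tac 4.
Qed.
Definition gdf_dn_14 := (Imp (Imp (Imp (Imp (Var 0) (Var 1)) (Imp (Neg (Var 2)) (Var 1))) (Var 3)) (Imp (Var 2) (Var 3))).
Lemma gdn_14 : Der DNF gdf_dn_14.
Proof.
  apply (Dcd DNF L1f gdf_dn_13 gdf_dn_14 (DerL1 DNF) (gdn_13)); [|reflexivity].
  unfold L1f. apply (cd_concrete _ _ _ 3 (fun v => match v with | 0 => (Var 3) | 1 => (Imp (Imp (Var 4) (Var 5)) (Imp (Neg (Var 3)) (Var 5))) | _ => Var v end) _ (fun v => match v with | 2 => 3 | 3 => 2 | 4 => 0 | 5 => 1 | _ => v end)); [reflexivity|reflexivity| |reflexivity|reflexivity].
  unfold gdf_dn_13. mgu_tac 2.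
Qed.
Definition gdf_dn_15 := (Imp (Var 0) (Imp (Var 1) (Imp (Neg (Var 0)) (Var 2)))).
Lemma gdn_15 : Der DNF gdf_dn_15.
Proof.
  apply (Dcd DNF gdf_dn_14 gdf_dn_0 gdf_dn_15 (gdn_14) (gdn_0)); [|reflexivity].
  unfold gdf_dn_14. apply (cd_concrete _ _ _ 4 (fun v => match v with | 0 => (Neg (Var 4)) | 1 => (Var 5) | 3 => (Imp (Var 4) (Imp (Neg (Var 2)) (Var 5))) | 6 => (Imp (Neg (Var 2)) (Var 5)) | _ => Var v end) _ (fun v => match v with | 2 => 0 | 4 => 1 | 5 => 2 | _ => v end)); [reflexivity|reflexivity| |reflexivity|reflexivity].
  unfold gdf_dn_0. mgu_tac 7.
Qed.
Definition gdf_dn_16 := (Imp (Imp (Imp (Var 0) (Imp (Neg (Var 1)) (Var 2))) (Var 3)) (Imp (Var 1) (Var 3))).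
Lemma gdn_16 : Der DNF gdf_dn_16.
Proof.
  apply (Dcd DNF L1f gdf_dn_15 gdf_dn_16 (DerL1 DNF) (gdn_15)); [|reflexivity].
  unfold L1f. apply (cd_concrete _ _ _ 3 (fun v => match v with | 0 => (Var 3) | 1 => (Imp (Var 4) (Imp (Neg (Var 3)) (Var 5))) | _ => Var v end) _ (fun v => match v with | 2 => 3 | 3 => 1 | 4 => 0 | 5 => 2 | _ => v end)); [reflexivity|reflexivity| |reflexivity|reflexivity].
  unfold gdf_dn_15. mgu_tac 2.
Qed.
Definition gdf_dn_17 := (Imp (Var 0) (Imp (Var 1) (Imp (Var 2) (Var 0)))).
Lemma gdn_17 : Der DNF gdf_dn_17.
Proof.
  apply (Dcd DNF gdf_dn_16 gdf_dn_12 gdf_dn_17 (gdn_16) (gdn_12)); [|reflexivity].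
  unfold gdf_dn_16. apply (cd_concrete _ _ _ 4 (fun v => match v with | 0 => (Var 4) | 1 => (Var 5) | 2 => (Var 5) | 3 => (Imp (Var 6) (Imp (Var 4) (Var 5))) | _ => Var v end) _ (fun v => match v with | 4 => 2 | 5 => 0 | 6 => 1 | _ => v end)); [reflexivity|reflexivity| |reflexivity|reflexivity].
  unfold gdf_dn_12. mgu_tac 4.
Qed.
Definition gdf_dn_18 := (Imp (Var 0) (Imp (Var 1) (Imp (Var 2) (Var 1)))).
Lemma gdn_18 : Der DNF gdf_dn_18.
Proof.
  apply (Dcd DNF gdf_dn_12 gdf_dn_17 gdf_dn_18 (gdn_12) (gdn_17)); [|reflexivity].
  unfold gdf_dn_12. apply (cd_concrete _ _ _ 3 (fun v => match v with | 0 => (Var 3) | 1 => (Imp (Var 5) (Var 3)) | 4 => (Neg (Imp (Var 5) (Var 3))) | _ => Var v end) _ (fun v => match v with | 2 => 0 | 3 => 1 | 5 => 2 | _ => v end)); [reflexivity|reflexivity| |reflexivity|reflexivity].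
  unfold gdf_dn_17. mgu_tac 5.
Qed.
Definition gdf_dn_19 := (Imp (Var 0) (Imp (Var 1) (Var 0))).
Lemma gdn_19 : Der DNF gdf_dn_19.
Proof.
  apply (Dcd DNF gdf_dn_18 L2f gdf_dn_19 (gdn_18) (DerL2 DNF)); [|reflexivity].
  unfold gdf_dn_18. apply (cd_concrete _ _ _ 3 (fun v => match v with | 0 => (Imp (Imp (Neg (Var 3)) (Var 3)) (Var 3)) | _ => Var v end) _ (fun v => match v with | 1 => 0 | 2 => 1 | _ => v end)); [reflexivity|reflexivity| |reflexivity|reflexivity].
  unfold L2f. mgu_tac 1.
Qed.
Definition gdf_dn_20 := (Imp (Imp (Imp (Var 0) (Var 1)) (Var 2)) (Imp (Var 1) (Var 2))).
Lemma gdn_20 : Der DNF gdf_dn_20.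
Proof.
  apply (Dcd DNF L1f gdf_dn_19 gdf_dn_20 (DerL1 DNF) (gdn_19)); [|reflexivity].
  unfold L1f. apply (cd_concrete _ _ _ 3 (fun v => match v with | 0 => (Var 3) | 1 => (Imp (Var 4) (Var 3)) | _ => Var v end) _ (fun v => match v with | 2 => 2 | 3 => 1 | 4 => 0 | _ => v end)); [reflexivity|reflexivity| |reflexivity|reflexivity].
  unfold gdf_dn_19. mgu_tac 2.
Qed.
Definition gdf_dn_21 := (Imp (Var 0) (Imp (Imp (Imp (Imp (Neg (Var 1)) (Var 1)) (Var 1)) (Var 2)) (Var 2))).
Lemma gdn_21 : Der DNF gdf_dn_21.
Proof.
  apply (Dcd DNF gdf_dn_12 gdf_dn_11 gdf_dn_21 (gdn_12) (gdn_11)); [|reflexivity].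
  unfold gdf_dn_12. apply (cd_concrete _ _ _ 3 (fun v => match v with | 0 => (Imp (Imp (Imp (Neg (Var 3)) (Var 3)) (Var 3)) (Var 4)) | 1 => (Var 4) | 5 => (Neg (Var 4)) | _ => Var v end) _ (fun v => match v with | 2 => 0 | 3 => 1 | 4 => 2 | _ => v end)); [reflexivity|reflexivity| |reflexivity|reflexivity].
  unfold gdf_dn_11. mgu_tac 6.
Qed.
Definition gdf_dn_22 := (Imp (Imp (Imp (Imp (Neg (Var 0)) (Var 0)) (Var 0)) (Var 1)) (Var 1)).
Lemma gdn_22 : Der DNF gdf_dn_22.
Proof.
  apply (Dcd DNF gdf_dn_21 L2f gdf_dn_22 (gdn_21) (DerL2 DNF)); [|reflexivity].
  unfold gdf_dn_21. apply (cd_concrete _ _ _ 3 (fun v => match v with | 0 => (Imp (Imp (Neg (Var 3)) (Var 3)) (Var 3)) | _ => Var v end) _ (fun v => match v with | 1 => 0 | 2 => 1 | _ => v end)); [reflexivity|reflexivity| |reflexivity|reflexivity].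
  unfold L2f. mgu_tac 1.
Qed.
Definition gdf_dn_23 := (Imp (Imp (Var 0) (Imp (Neg (Var 1)) (Var 1))) (Imp (Var 0) (Var 1))).
Lemma gdn_23 : Der DNF gdf_dn_23.
Proof.
  apply (Dcd DNF gdf_dn_2 gdf_dn_22 gdf_dn_23 (gdn_2) (gdn_22)); [|reflexivity].
  unfold gdf_dn_2. apply (cd_concrete _ _ _ 4 (fun v => match v with | 0 => (Imp (Neg (Var 4)) (Var 4)) | 1 => (Var 4) | 3 => (Imp (Var 2) (Var 4)) | 5 => (Imp (Var 2) (Var 4)) | _ => Var v end) _ (fun v => match v with | 2 => 0 | 4 => 1 | _ => v end)); [reflexivity|reflexivity| |reflexivity|reflexivity].
  unfold gdf_dn_22. mgu_tac 6.
Qed.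
Definition gdf_dn_24 := (Imp (Imp (Neg (Var 0)) (Var 1)) (Imp (Imp (Var 1) (Var 0)) (Var 0))).
Lemma gdn_24 : Der DNF gdf_dn_24.
Proof.
  apply (Dcd DNF gdf_dn_2 gdf_dn_23 gdf_dn_24 (gdn_2) (gdn_23)); [|reflexivity].
  unfold gdf_dn_2. apply (cd_concrete _ _ _ 4 (fun v => match v with | 1 => (Var 5) | 2 => (Neg (Var 5)) | 3 => (Imp (Imp (Var 0) (Var 5)) (Var 5)) | 4 => (Imp (Var 0) (Var 5)) | _ => Var v end) _ (fun v => match v with | 0 => 1 | 5 => 0 | _ => v end)); [reflexivity|reflexivity| |reflexivity|reflexivity].
  unfold gdf_dn_23. mgu_tac 5.
Qed.
Definition gdf_dn_25 := (Imp (Var 0) (Imp (Imp (Var 0) (Var 1)) (Var 1))).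
Lemma gdn_25 : Der DNF gdf_dn_25.
Proof.
  apply (Dcd DNF gdf_dn_20 gdf_dn_24 gdf_dn_25 (gdn_20) (gdn_24)); [|reflexivity].
  unfold gdf_dn_20. apply (cd_concrete _ _ _ 3 (fun v => match v with | 0 => (Neg (Var 3)) | 1 => (Var 4) | 2 => (Imp (Imp (Var 4) (Var 3)) (Var 3)) | _ => Var v end) _ (fun v => match v with | 3 => 1 | 4 => 0 | _ => v end)); [reflexivity|reflexivity| |reflexivity|reflexivity].
  unfold gdf_dn_24. mgu_tac 3.
Qed.
Definition gdf_dn_26 := (Imp (Imp (Imp (Imp (Var 0) (Var 1)) (Var 1)) (Var 2)) (Imp (Var 0) (Var 2))).
Lemma gdn_26 : Der DNF gdf_dn_26.
Proof.
  apply (Dcd DNF L1f gdf_dn_25 gdf_dn_26 (DerL1 DNF) (gdn_25)); [|reflexivity].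
  unfold L1f. apply (cd_concrete _ _ _ 3 (fun v => match v with | 0 => (Var 3) | 1 => (Imp (Imp (Var 3) (Var 4)) (Var 4)) | _ => Var v end) _ (fun v => match v with | 2 => 2 | 3 => 0 | 4 => 1 | _ => v end)); [reflexivity|reflexivity| |reflexivity|reflexivity].
  unfold gdf_dn_25. mgu_tac 2.
Qed.
Definition gdf_dn_27 := (Imp (Imp (Var 0) (Var 1)) (Imp (Imp (Var 2) (Var 0)) (Imp (Var 2) (Var 1)))).
Lemma gdn_27 : Der DNF gdf_dn_27.
Proof.
  apply (Dcd DNF gdf_dn_26 gdf_dn_2 gdf_dn_27 (gdn_26) (gdn_2)); [|reflexivity].
  unfold gdf_dn_26. apply (cd_concrete _ _ _ 3 (fun v => match v with | 0 => (Imp (Var 3) (Var 4)) | 1 => (Imp (Var 5) (Var 4)) | 2 => (Imp (Imp (Var 5) (Var 3)) (Imp (Var 5) (Var 4))) | 6 => (Imp (Var 5) (Var 4)) | _ => Var v end) _ (fun v => match v with | 3 => 0 | 4 => 1 | 5 => 2 | _ => v end)); [reflexivity|reflexivity| |reflexivity|reflexivity].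
  unfold gdf_dn_2. mgu_tac 7.
Qed.
Definition gdf_dn_28 := (Imp (Neg (Var 0)) (Imp (Var 0) (Var 1))).
Lemma gdn_28 : Der DNF gdf_dn_28.
Proof.
  apply (Dcd DNF gdf_dn_26 gdf_dn_0 gdf_dn_28 (gdn_26) (gdn_0)); [|reflexivity].
  unfold gdf_dn_26. apply (cd_concrete _ _ _ 3 (fun v => match v with | 0 => (Neg (Var 3)) | 1 => (Var 4) | 2 => (Imp (Var 3) (Var 4)) | 5 => (Var 4) | _ => Var v end) _ (fun v => match v with | 3 => 0 | 4 => 1 | _ => v end)); [reflexivity|reflexivity| |reflexivity|reflexivity].
  unfold gdf_dn_0. mgu_tac 6.
Qed.
Definition gdf_dn_29 := (Imp (Imp (Imp (Var 0) (Var 1)) (Var 0)) (Var 0)).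
Lemma gdn_29 : Der DNF gdf_dn_29.
Proof.
  apply (Dcd DNF gdf_dn_24 gdf_dn_28 gdf_dn_29 (gdn_24) (gdn_28)); [|reflexivity].
  unfold gdf_dn_24. apply (cd_concrete _ _ _ 2 (fun v => match v with | 0 => (Var 2) | 1 => (Imp (Var 2) (Var 3)) | _ => Var v end) _ (fun v => match v with | 2 => 0 | 3 => 1 | _ => v end)); [reflexivity|reflexivity| |reflexivity|reflexivity].
  unfold gdf_dn_28. mgu_tac 2.
Qed.
Definition gdf_dn_30 := (Imp (Imp (Var 0) (Imp (Var 0) (Var 1))) (Imp (Var 0) (Var 1))).
Lemma gdn_30 : Der DNF gdf_dn_30.
Proof.
  apply (Dcd DNF gdf_dn_2 gdf_dn_29 gdf_dn_30 (gdn_2) (gdn_29)); [|reflexivity].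
  unfold gdf_dn_2. apply (cd_concrete _ _ _ 4 (fun v => match v with | 0 => (Imp (Var 2) (Var 5)) | 1 => (Var 5) | 3 => (Imp (Var 2) (Var 5)) | 4 => (Imp (Var 2) (Var 5)) | _ => Var v end) _ (fun v => match v with | 2 => 0 | 5 => 1 | _ => v end)); [reflexivity|reflexivity| |reflexivity|reflexivity].
  unfold gdf_dn_29. mgu_tac 5.
Qed.
Definition gdf_dn_31 := (Imp (Imp (Var 0) (Imp (Var 1) (Imp (Var 1) (Var 2)))) (Imp (Var 0) (Imp (Var 1) (Var 2)))).
Lemma gdn_31 : Der DNF gdf_dn_31.
Proof.
  apply (Dcd DNF gdf_dn_27 gdf_dn_30 gdf_dn_31 (gdn_27) (gdn_30)); [|reflexivity].
  unfold gdf_dn_27. apply (cd_concrete _ _ _ 3 (fun v => match v with | 0 => (Imp (Var 3) (Imp (Var 3) (Var 4))) | 1 => (Imp (Var 3) (Var 4)) | _ => Var v end) _ (fun v => match v with | 2 => 0 | 3 => 1 | 4 => 2 | _ => v end)); [reflexivity|reflexivity| |reflexivity|reflexivity].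
  unfold gdf_dn_30. mgu_tac 2.
Qed.
Definition gdf_dn_32 := (Imp (Imp (Var 0) (Imp (Var 1) (Var 2))) (Imp (Var 1) (Imp (Var 0) (Var 2)))).
Lemma gdn_32 : Der DNF gdf_dn_32.
Proof.
  apply (Dcd DNF gdf_dn_2 gdf_dn_26 gdf_dn_32 (gdn_2) (gdn_26)); [|reflexivity].
  unfold gdf_dn_2. apply (cd_concrete _ _ _ 4 (fun v => match v with | 0 => (Imp (Var 4) (Var 5)) | 1 => (Var 5) | 3 => (Imp (Var 4) (Imp (Var 2) (Var 5))) | 6 => (Imp (Var 2) (Var 5)) | _ => Var v end) _ (fun v => match v with | 2 => 0 | 4 => 1 | 5 => 2 | _ => v end)); [reflexivity|reflexivity| |reflexivity|reflexivity].
  unfold gdf_dn_26. mgu_tac 7.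
Qed.
Definition gdf_dn_33 := (Imp (Imp (Var 0) (Imp (Var 1) (Var 2))) (Imp (Var 0) (Imp (Imp (Var 3) (Var 1)) (Imp (Var 3) (Var 2))))).
Lemma gdn_33 : Der DNF gdf_dn_33.
Proof.
  apply (Dcd DNF gdf_dn_27 gdf_dn_27 gdf_dn_33 (gdn_27) (gdn_27)); [|reflexivity].
  unfold gdf_dn_27. apply (cd_concrete _ _ _ 3 (fun v => match v with | 0 => (Imp (Var 3) (Var 4)) | 1 => (Imp (Imp (Var 5) (Var 3)) (Imp (Var 5) (Var 4))) | _ => Var v end) _ (fun v => match v with | 2 => 0 | 3 => 1 | 4 => 2 | 5 => 3 | _ => v end)); [reflexivity|reflexivity| |reflexivity|reflexivity].
  unfold gdf_dn_27. mgu_tac 2.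
Qed.
Definition gdf_dn_34 := (Imp (Imp (Var 0) (Var 1)) (Imp (Imp (Var 2) (Imp (Var 3) (Var 0))) (Imp (Var 2) (Imp (Var 3) (Var 1))))).
Lemma gdn_34 : Der DNF gdf_dn_34.
Proof.
  apply (Dcd DNF gdf_dn_33 gdf_dn_27 gdf_dn_34 (gdn_33) (gdn_27)); [|reflexivity].
  unfold gdf_dn_33. apply (cd_concrete _ _ _ 4 (fun v => match v with | 0 => (Imp (Var 4) (Var 5)) | 1 => (Imp (Var 6) (Var 4)) | 2 => (Imp (Var 6) (Var 5)) | _ => Var v end) _ (fun v => match v with | 3 => 2 | 4 => 0 | 5 => 1 | 6 => 3 | _ => v end)); [reflexivity|reflexivity| |reflexivity|reflexivity].
  unfold gdf_dn_27. mgu_tac 3.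
Qed.
Definition gdf_dn_35 := (Imp (Imp (Var 0) (Var 1)) (Imp (Imp (Var 2) (Imp (Var 3) (Imp (Var 4) (Var 0)))) (Imp (Var 2) (Imp (Var 3) (Imp (Var 4) (Var 1)))))).
Lemma gdn_35 : Der DNF gdf_dn_35.
Proof.
  apply (Dcd DNF gdf_dn_33 gdf_dn_34 gdf_dn_35 (gdn_33) (gdn_34)); [|reflexivity].
  unfold gdf_dn_33. apply (cd_concrete _ _ _ 4 (fun v => match v with | 0 => (Imp (Var 4) (Var 5)) | 1 => (Imp (Var 6) (Imp (Var 7) (Var 4))) | 2 => (Imp (Var 6) (Imp (Var 7) (Var 5))) | _ => Var v end) _ (fun v => match v with | 3 => 2 | 4 => 0 | 5 => 1 | 6 => 3 | 7 => 4 | _ => v end)); [reflexivity|reflexivity| |reflexivity|reflexivity].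
  unfold gdf_dn_34. mgu_tac 3.
Qed.
Definition gdf_dn_36 := (Imp (Imp (Var 0) (Imp (Var 1) (Imp (Var 2) (Var 3)))) (Imp (Imp (Var 3) (Var 4)) (Imp (Var 0) (Imp (Var 1) (Imp (Var 2) (Var 4)))))).
Lemma gdn_36 : Der DNF gdf_dn_36.
Proof.
  apply (Dcd DNF gdf_dn_32 gdf_dn_35 gdf_dn_36 (gdn_32) (gdn_35)); [|reflexivity].
  unfold gdf_dn_32. apply (cd_concrete _ _ _ 3 (fun v => match v with | 0 => (Imp (Var 3) (Var 4)) | 1 => (Imp (Var 5) (Imp (Var 6) (Imp (Var 7) (Var 3)))) | 2 => (Imp (Var 5) (Imp (Var 6) (Imp (Var 7) (Var 4)))) | _ => Var v end) _ (fun v => match v with | 3 => 3 | 4 => 4 | 5 => 0 | 6 => 1 | 7 => 2 | _ => v end)); [reflexivity|reflexivity| |reflexivity|reflexivity].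
  unfold gdf_dn_35. mgu_tac 3.
Qed.
Definition gdf_dn_37 := (Imp (Imp (Var 0) (Imp (Var 1) (Imp (Var 2) (Imp (Var 3) (Var 4))))) (Imp (Var 0) (Imp (Imp (Var 4) (Var 5)) (Imp (Var 1) (Imp (Var 2) (Imp (Var 3) (Var 5))))))).
Lemma gdn_37 : Der DNF gdf_dn_37.
Proof.
  apply (Dcd DNF gdf_dn_27 gdf_dn_36 gdf_dn_37 (gdn_27) (gdn_36)); [|reflexivity].
  unfold gdf_dn_27. apply (cd_concrete _ _ _ 3 (fun v => match v with | 0 => (Imp (Var 3) (Imp (Var 4) (Imp (Var 5) (Var 6)))) | 1 => (Imp (Imp (Var 6) (Var 7)) (Imp (Var 3) (Imp (Var 4) (Imp (Var 5) (Var 7))))) | _ => Var v end) _ (fun v => match v with | 2 => 0 | 3 => 1 | 4 => 2 | 5 => 3 | 6 => 4 | 7 => 5 | _ => v end)); [reflexivity|reflexivity| |reflexivity|reflexivity].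
  unfold gdf_dn_36. mgu_tac 2.
Qed.
Definition gdf_dn_38 := (Imp (Imp (Var 0) (Imp (Var 1) (Var 2))) (Imp (Imp (Var 2) (Var 3)) (Imp (Var 0) (Imp (Var 1) (Var 3))))).
Lemma gdn_38 : Der DNF gdf_dn_38.
Proof.
  apply (Dcd DNF gdf_dn_32 gdf_dn_34 gdf_dn_38 (gdn_32) (gdn_34)); [|reflexivity].
  unfold gdf_dn_32. apply (cd_concrete _ _ _ 3 (fun v => match v with | 0 => (Imp (Var 3) (Var 4)) | 1 => (Imp (Var 5) (Imp (Var 6) (Var 3))) | 2 => (Imp (Var 5) (Imp (Var 6) (Var 4))) | _ => Var v end) _ (fun v => match v with | 3 => 2 | 4 => 3 | 5 => 0 | 6 => 1 | _ => v end)); [reflexivity|reflexivity| |reflexivity|reflexivity].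
  unfold gdf_dn_34. mgu_tac 3.
Qed.
Definition gdf_dn_39 := (Imp (Imp (Var 0) (Imp (Var 1) (Imp (Var 2) (Var 3)))) (Imp (Var 0) (Imp (Imp (Var 3) (Var 4)) (Imp (Var 1) (Imp (Var 2) (Var 4)))))).
Lemma gdn_39 : Der DNF gdf_dn_39.
Proof.
  apply (Dcd DNF gdf_dn_27 gdf_dn_38 gdf_dn_39 (gdn_27) (gdn_38)); [|reflexivity].
  unfold gdf_dn_27. apply (cd_concrete _ _ _ 3 (fun v => match v with | 0 => (Imp (Var 3) (Imp (Var 4) (Var 5))) | 1 => (Imp (Imp (Var 5) (Var 6)) (Imp (Var 3) (Imp (Var 4) (Var 6)))) | _ => Var v end) _ (fun v => match v with | 2 => 0 | 3 => 1 | 4 => 2 | 5 => 3 | 6 => 4 | _ => v end)); [reflexivity|reflexivity| |reflexivity|reflexivity].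
  unfold gdf_dn_38. mgu_tac 2.
Qed.
Definition gdf_dn_40 := (Imp (Imp (Var 0) (Imp (Var 1) (Var 2))) (Imp (Var 0) (Imp (Imp (Var 2) (Var 3)) (Imp (Var 1) (Var 3))))).
Lemma gdn_40 : Der DNF gdf_dn_40.
Proof.
  apply (Dcd DNF gdf_dn_27 L1f gdf_dn_40 (gdn_27) (DerL1 DNF)); [|reflexivity].
  unfold gdf_dn_27. apply (cd_concrete _ _ _ 3 (fun v => match v with | 0 => (Imp (Var 3) (Var 4)) | 1 => (Imp (Imp (Var 4) (Var 5)) (Imp (Var 3) (Var 5))) | _ => Var v end) _ (fun v => match v with | 2 => 0 | 3 => 1 | 4 => 2 | 5 => 3 | _ => v end)); [reflexivity|reflexivity| |reflexivity|reflexivity].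
  unfold L1f. mgu_tac 2.
Qed.
Definition gdf_dn_41 := (Imp (Imp (Var 0) (Var 0)) (Imp (Var 0) (Var 0))).
Lemma gdn_41 : Der DNF gdf_dn_41.
Proof.
  apply (Dcd DNF gdf_dn_30 gdf_dn_27 gdf_dn_41 (gdn_30) (gdn_27)); [|reflexivity].
  unfold gdf_dn_30. apply (cd_concrete _ _ _ 2 (fun v => match v with | 0 => (Imp (Var 3) (Var 3)) | 1 => (Imp (Var 3) (Var 3)) | 2 => (Var 3) | 4 => (Var 3) | _ => Var v end) _ (fun v => match v with | 3 => 0 | _ => v end)); [reflexivity|reflexivity| |reflexivity|reflexivity].
  unfold gdf_dn_27. mgu_tac 5.
Qed.
Definition gdf_dn_42 := (Imp (Imp (Var 0) (Var 0)) (Imp (Imp (Var 0) (Var 1)) (Imp (Var 0) (Var 1)))).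
Lemma gdn_42 : Der DNF gdf_dn_42.
Proof.
  apply (Dcd DNF gdf_dn_40 gdf_dn_41 gdf_dn_42 (gdn_40) (gdn_41)); [|reflexivity].
  unfold gdf_dn_40. apply (cd_concrete _ _ _ 4 (fun v => match v with | 0 => (Imp (Var 4) (Var 4)) | 1 => (Var 4) | 2 => (Var 4) | _ => Var v end) _ (fun v => match v with | 3 => 1 | 4 => 0 | _ => v end)); [reflexivity|reflexivity| |reflexivity|reflexivity].
  unfold gdf_dn_41. mgu_tac 3.
Qed.
Definition gdf_dn_43 := (Imp (Imp (Var 0) (Var 0)) (Imp (Imp (Var 1) (Var 2)) (Imp (Imp (Var 0) (Var 1)) (Imp (Var 0) (Var 2))))).
Lemma gdn_43 : Der DNF gdf_dn_43.
Proof.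
  apply (Dcd DNF gdf_dn_39 gdf_dn_42 gdf_dn_43 (gdn_39) (gdn_42)); [|reflexivity].
  unfold gdf_dn_39. apply (cd_concrete _ _ _ 5 (fun v => match v with | 0 => (Imp (Var 5) (Var 5)) | 1 => (Imp (Var 5) (Var 6)) | 2 => (Var 5) | 3 => (Var 6) | _ => Var v end) _ (fun v => match v with | 4 => 2 | 5 => 0 | 6 => 1 | _ => v end)); [reflexivity|reflexivity| |reflexivity|reflexivity].
  unfold gdf_dn_42. mgu_tac 4.
Qed.
Definition gdf_dn_44 := (Imp (Imp (Var 0) (Var 0)) (Imp (Imp (Var 1) (Var 2)) (Imp (Imp (Var 3) (Var 1)) (Imp (Imp (Var 0) (Var 3)) (Imp (Var 0) (Var 2)))))).
Lemma gdn_44 : Der DNF gdf_dn_44.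
Proof.
  apply (Dcd DNF gdf_dn_37 gdf_dn_43 gdf_dn_44 (gdn_37) (gdn_43)); [|reflexivity].
  unfold gdf_dn_37. apply (cd_concrete _ _ _ 6 (fun v => match v with | 0 => (Imp (Var 6) (Var 6)) | 1 => (Imp (Var 7) (Var 8)) | 2 => (Imp (Var 6) (Var 7)) | 3 => (Var 6) | 4 => (Var 8) | _ => Var v end) _ (fun v => match v with | 5 => 2 | 6 => 0 | 7 => 3 | 8 => 1 | _ => v end)); [reflexivity|reflexivity| |reflexivity|reflexivity].
  unfold gdf_dn_43. mgu_tac 5.
Qed.
Definition gdf_dn_45 := (Imp (Imp (Var 0) (Var 0)) (Imp (Imp (Var 1) (Var 1)) (Imp (Imp (Var 0) (Var 1)) (Imp (Var 0) (Var 1))))).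
Lemma gdn_45 : Der DNF gdf_dn_45.
Proof.
  apply (Dcd DNF gdf_dn_31 gdf_dn_44 gdf_dn_45 (gdn_31) (gdn_44)); [|reflexivity].
  unfold gdf_dn_31. apply (cd_concrete _ _ _ 3 (fun v => match v with | 0 => (Imp (Var 3) (Var 3)) | 1 => (Imp (Var 5) (Var 5)) | 2 => (Imp (Imp (Var 3) (Var 5)) (Imp (Var 3) (Var 5))) | 4 => (Var 5) | 6 => (Var 5) | _ => Var v end) _ (fun v => match v with | 3 => 0 | 5 => 1 | _ => v end)); [reflexivity|reflexivity| |reflexivity|reflexivity].
  unfold gdf_dn_44. mgu_tac 7.
Qed.
Definition gdf_dn_46 := (Imp (Imp (Var 0) (Var 1)) (Imp (Imp (Var 0) (Var 0)) (Imp (Var 0) (Var 1)))).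
Lemma gdn_46 : Der DNF gdf_dn_46.
Proof.
  apply (Dcd DNF gdf_dn_38 gdf_dn_41 gdf_dn_46 (gdn_38) (gdn_41)); [|reflexivity].
  unfold gdf_dn_38. apply (cd_concrete _ _ _ 4 (fun v => match v with | 0 => (Imp (Var 4) (Var 4)) | 1 => (Var 4) | 2 => (Var 4) | _ => Var v end) _ (fun v => match v with | 3 => 1 | 4 => 0 | _ => v end)); [reflexivity|reflexivity| |reflexivity|reflexivity].
  unfold gdf_dn_41. mgu_tac 3.
Qed.
Definition gdf_dn_47 := (Imp (Imp (Var 0) (Var 1)) (Imp (Imp (Var 2) (Var 0)) (Imp (Imp (Var 2) (Var 2)) (Imp (Var 2) (Var 1))))).
Lemma gdn_47 : Der DNF gdf_dn_47.
Proof.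
  apply (Dcd DNF gdf_dn_36 gdf_dn_46 gdf_dn_47 (gdn_36) (gdn_46)); [|reflexivity].
  unfold gdf_dn_36. apply (cd_concrete _ _ _ 5 (fun v => match v with | 0 => (Imp (Var 5) (Var 6)) | 1 => (Imp (Var 5) (Var 5)) | 2 => (Var 5) | 3 => (Var 6) | _ => Var v end) _ (fun v => match v with | 4 => 1 | 5 => 2 | 6 => 0 | _ => v end)); [reflexivity|reflexivity| |reflexivity|reflexivity].
  unfold gdf_dn_46. mgu_tac 4.
Qed.
Definition gdf_dn_48 := (Imp (Imp (Var 0) (Var 0)) (Imp (Imp (Var 0) (Var 0)) (Imp (Var 0) (Var 0)))).
Lemma gdn_48 : Der DNF gdf_dn_48.
Proof.
  apply (Dcd DNF gdf_dn_30 gdf_dn_47 gdf_dn_48 (gdn_30) (gdn_47)); [|reflexivity].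
  unfold gdf_dn_30. apply (cd_concrete _ _ _ 2 (fun v => match v with | 0 => (Imp (Var 3) (Var 3)) | 1 => (Imp (Imp (Var 3) (Var 3)) (Imp (Var 3) (Var 3))) | 2 => (Var 3) | 4 => (Var 3) | _ => Var v end) _ (fun v => match v with | 3 => 0 | _ => v end)); [reflexivity|reflexivity| |reflexivity|reflexivity].
  unfold gdf_dn_47. mgu_tac 5.
Qed.
Definition gdf_dn_49 := (Imp (Var 0) (Imp (Imp (Var 1) (Var 2)) (Imp (Var 1) (Var 0)))).
Lemma gdn_49 : Der DNF gdf_dn_49.
Proof.
  apply (Dcd DNF gdf_dn_33 gdf_dn_19 gdf_dn_49 (gdn_33) (gdn_19)); [|reflexivity].
  unfold gdf_dn_33. apply (cd_concrete _ _ _ 4 (fun v => match v with | 0 => (Var 4) | 1 => (Var 5) | 2 => (Var 4) | _ => Var v end) _ (fun v => match v with | 3 => 1 | 4 => 0 | 5 => 2 | _ => v end)); [reflexivity|reflexivity| |reflexivity|reflexivity].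
  unfold gdf_dn_19. mgu_tac 3.
Qed.
Definition gdf_dn_50 := (Imp (Var 0) (Imp (Imp (Var 1) (Imp (Var 2) (Var 3))) (Imp (Var 1) (Imp (Var 2) (Var 0))))).
Lemma gdn_50 : Der DNF gdf_dn_50.
Proof.
  apply (Dcd DNF gdf_dn_33 gdf_dn_49 gdf_dn_50 (gdn_33) (gdn_49)); [|reflexivity].
  unfold gdf_dn_33. apply (cd_concrete _ _ _ 4 (fun v => match v with | 0 => (Var 4) | 1 => (Imp (Var 5) (Var 6)) | 2 => (Imp (Var 5) (Var 4)) | _ => Var v end) _ (fun v => match v with | 3 => 1 | 4 => 0 | 5 => 2 | 6 => 3 | _ => v end)); [reflexivity|reflexivity| |reflexivity|reflexivity].
  unfold gdf_dn_49. mgu_tac 3.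
Qed.
Definition gdf_dn_51 := (Imp (Imp (Var 0) (Imp (Var 1) (Var 2))) (Imp (Var 3) (Imp (Var 0) (Imp (Var 1) (Var 3))))).
Lemma gdn_51 : Der DNF gdf_dn_51.
Proof.
  apply (Dcd DNF gdf_dn_32 gdf_dn_50 gdf_dn_51 (gdn_32) (gdn_50)); [|reflexivity].
  unfold gdf_dn_32. apply (cd_concrete _ _ _ 3 (fun v => match v with | 0 => (Var 3) | 1 => (Imp (Var 4) (Imp (Var 5) (Var 6))) | 2 => (Imp (Var 4) (Imp (Var 5) (Var 3))) | _ => Var v end) _ (fun v => match v with | 3 => 3 | 4 => 0 | 5 => 1 | 6 => 2 | _ => v end)); [reflexivity|reflexivity| |reflexivity|reflexivity].
  unfold gdf_dn_50. mgu_tac 3.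
Qed.
Definition gdf_dn_52 := (Imp (Var 0) (Imp (Imp (Var 1) (Var 1)) (Imp (Imp (Var 1) (Var 1)) (Var 0)))).
Lemma gdn_52 : Der DNF gdf_dn_52.
Proof.
  apply (Dcd DNF gdf_dn_51 gdf_dn_48 gdf_dn_52 (gdn_51) (gdn_48)); [|reflexivity].
  unfold gdf_dn_51. apply (cd_concrete _ _ _ 4 (fun v => match v with | 0 => (Imp (Var 4) (Var 4)) | 1 => (Imp (Var 4) (Var 4)) | 2 => (Imp (Var 4) (Var 4)) | _ => Var v end) _ (fun v => match v with | 3 => 0 | 4 => 1 | _ => v end)); [reflexivity|reflexivity| |reflexivity|reflexivity].
  unfold gdf_dn_48. mgu_tac 3.
Qed.
Definition gdf_dn_53 := (Imp (Imp (Var 0) (Imp (Var 1) (Imp (Var 2) (Imp (Var 2) (Var 3))))) (Imp (Var 0) (Imp (Var 1) (Imp (Var 2) (Var 3))))).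
Lemma gdn_53 : Der DNF gdf_dn_53.
Proof.
  apply (Dcd DNF gdf_dn_27 gdf_dn_31 gdf_dn_53 (gdn_27) (gdn_31)); [|reflexivity].
  unfold gdf_dn_27. apply (cd_concrete _ _ _ 3 (fun v => match v with | 0 => (Imp (Var 3) (Imp (Var 4) (Imp (Var 4) (Var 5)))) | 1 => (Imp (Var 3) (Imp (Var 4) (Var 5))) | _ => Var v end) _ (fun v => match v with | 2 => 0 | 3 => 1 | 4 => 2 | 5 => 3 | _ => v end)); [reflexivity|reflexivity| |reflexivity|reflexivity].
  unfold gdf_dn_31. mgu_tac 2.
Qed.
Definition gdf_dn_54 := (Imp (Imp (Var 0) (Imp (Var 1) (Imp (Var 2) (Var 3)))) (Imp (Var 0) (Imp (Var 2) (Imp (Var 1) (Var 3))))).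
Lemma gdn_54 : Der DNF gdf_dn_54.
Proof.
  apply (Dcd DNF gdf_dn_27 gdf_dn_32 gdf_dn_54 (gdn_27) (gdn_32)); [|reflexivity].
  unfold gdf_dn_27. apply (cd_concrete _ _ _ 3 (fun v => match v with | 0 => (Imp (Var 3) (Imp (Var 4) (Var 5))) | 1 => (Imp (Var 4) (Imp (Var 3) (Var 5))) | _ => Var v end) _ (fun v => match v with | 2 => 0 | 3 => 1 | 4 => 2 | 5 => 3 | _ => v end)); [reflexivity|reflexivity| |reflexivity|reflexivity].
  unfold gdf_dn_32. mgu_tac 2.
Qed.
Definition gdf_dn_55 := (Imp (Imp (Var 0) (Imp (Var 1) (Var 2))) (Imp (Imp (Var 3) (Var 1)) (Imp (Var 0) (Imp (Var 3) (Var 2))))).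
Lemma gdn_55 : Der DNF gdf_dn_55.
Proof.
  apply (Dcd DNF gdf_dn_54 gdf_dn_33 gdf_dn_55 (gdn_54) (gdn_33)); [|reflexivity].
  unfold gdf_dn_54. apply (cd_concrete _ _ _ 4 (fun v => match v with | 0 => (Imp (Var 4) (Imp (Var 5) (Var 6))) | 1 => (Var 4) | 2 => (Imp (Var 7) (Var 5)) | 3 => (Imp (Var 7) (Var 6)) | _ => Var v end) _ (fun v => match v with | 4 => 0 | 5 => 1 | 6 => 2 | 7 => 3 | _ => v end)); [reflexivity|reflexivity| |reflexivity|reflexivity].
  unfold gdf_dn_33. mgu_tac 4.
Qed.
Definition gdf_dn_56 := (Imp (Imp (Var 0) (Imp (Var 1) (Var 2))) (Imp (Imp (Var 0) (Var 1)) (Imp (Var 0) (Var 2)))).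
Lemma gdn_56 : Der DNF gdf_dn_56.
Proof.
  apply (Dcd DNF gdf_dn_53 gdf_dn_55 gdf_dn_56 (gdn_53) (gdn_55)); [|reflexivity].
  unfold gdf_dn_53. apply (cd_concrete _ _ _ 4 (fun v => match v with | 0 => (Imp (Var 4) (Imp (Var 5) (Var 6))) | 1 => (Imp (Var 4) (Var 5)) | 2 => (Var 4) | 3 => (Var 6) | 7 => (Var 4) | _ => Var v end) _ (fun v => match v with | 4 => 0 | 5 => 1 | 6 => 2 | _ => v end)); [reflexivity|reflexivity| |reflexivity|reflexivity].
  unfold gdf_dn_55. mgu_tac 8.
Qed.
Definition gdf_dn_57 := (Imp (Imp (Var 0) (Var 1)) (Imp (Var 2) (Imp (Var 0) (Var 2)))).
Lemma gdn_57 : Der DNF gdf_dn_57.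
Proof.
  apply (Dcd DNF gdf_dn_32 gdf_dn_49 gdf_dn_57 (gdn_32) (gdn_49)); [|reflexivity].
  unfold gdf_dn_32. apply (cd_concrete _ _ _ 3 (fun v => match v with | 0 => (Var 3) | 1 => (Imp (Var 4) (Var 5)) | 2 => (Imp (Var 4) (Var 3)) | _ => Var v end) _ (fun v => match v with | 3 => 2 | 4 => 0 | 5 => 1 | _ => v end)); [reflexivity|reflexivity| |reflexivity|reflexivity].
  unfold gdf_dn_49. mgu_tac 3.
Qed.
Definition gdf_dn_58 := (Imp (Imp (Var 0) (Imp (Var 1) (Var 2))) (Imp (Var 0) (Imp (Var 3) (Imp (Var 1) (Var 3))))).
Lemma gdn_58 : Der DNF gdf_dn_58.
Proof.
  apply (Dcd DNF gdf_dn_27 gdf_dn_57 gdf_dn_58 (gdn_27) (gdn_57)); [|reflexivity].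
  unfold gdf_dn_27. apply (cd_concrete _ _ _ 3 (fun v => match v with | 0 => (Imp (Var 3) (Var 4)) | 1 => (Imp (Var 5) (Imp (Var 3) (Var 5))) | _ => Var v end) _ (fun v => match v with | 2 => 0 | 3 => 1 | 4 => 2 | 5 => 3 | _ => v end)); [reflexivity|reflexivity| |reflexivity|reflexivity].
  unfold gdf_dn_57. mgu_tac 2.
Qed.
Definition gdf_dn_59 := (Imp (Imp (Imp (Var 0) (Var 1)) (Imp (Var 0) (Var 1))) (Imp (Var 0) (Imp (Imp (Var 0) (Var 1)) (Var 1)))).
Lemma gdn_59 : Der DNF gdf_dn_59.
Proof.
  apply (Dcd DNF gdf_dn_54 gdf_dn_41 gdf_dn_59 (gdn_54) (gdn_41)); [|reflexivity].
  unfold gdf_dn_54. apply (cd_concrete _ _ _ 4 (fun v => match v with | 0 => (Imp (Imp (Var 2) (Var 3)) (Imp (Var 2) (Var 3))) | 1 => (Imp (Var 2) (Var 3)) | 4 => (Imp (Var 2) (Var 3)) | _ => Var v end) _ (fun v => match v with | 2 => 0 | 3 => 1 | _ => v end)); [reflexivity|reflexivity| |reflexivity|reflexivity].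
  unfold gdf_dn_41. mgu_tac 5.
Qed.
Definition gdf_dn_60 := (Imp (Imp (Imp (Var 0) (Var 1)) (Imp (Var 0) (Var 1))) (Imp (Var 2) (Imp (Var 0) (Var 2)))).
Lemma gdn_60 : Der DNF gdf_dn_60.
Proof.
  apply (Dcd DNF gdf_dn_58 gdf_dn_59 gdf_dn_60 (gdn_58) (gdn_59)); [|reflexivity].
  unfold gdf_dn_58. apply (cd_concrete _ _ _ 4 (fun v => match v with | 0 => (Imp (Imp (Var 4) (Var 5)) (Imp (Var 4) (Var 5))) | 1 => (Var 4) | 2 => (Imp (Imp (Var 4) (Var 5)) (Var 5)) | _ => Var v end) _ (fun v => match v with | 3 => 2 | 4 => 0 | 5 => 1 | _ => v end)); [reflexivity|reflexivity| |reflexivity|reflexivity].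
  unfold gdf_dn_59. mgu_tac 3.
Qed.
Definition gdf_dn_61 := (Imp (Imp (Imp (Var 0) (Var 1)) (Imp (Var 0) (Var 1))) (Imp (Var 0) (Var 0))).
Lemma gdn_61 : Der DNF gdf_dn_61.
Proof.
  apply (Dcd DNF gdf_dn_31 gdf_dn_60 gdf_dn_61 (gdn_31) (gdn_60)); [|reflexivity].
  unfold gdf_dn_31. apply (cd_concrete _ _ _ 3 (fun v => match v with | 0 => (Imp (Imp (Var 5) (Var 4)) (Imp (Var 5) (Var 4))) | 1 => (Var 5) | 2 => (Var 5) | 3 => (Var 5) | _ => Var v end) _ (fun v => match v with | 4 => 1 | 5 => 0 | _ => v end)); [reflexivity|reflexivity| |reflexivity|reflexivity].
  unfold gdf_dn_60. mgu_tac 4.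
Qed.
Definition gdf_dn_62 := (Imp (Imp (Var 0) (Var 1)) (Imp (Imp (Imp (Var 2) (Var 3)) (Var 0)) (Imp (Var 3) (Var 1)))).
Lemma gdn_62 : Der DNF gdf_dn_62.
Proof.
  apply (Dcd DNF gdf_dn_38 gdf_dn_20 gdf_dn_62 (gdn_38) (gdn_20)); [|reflexivity].
  unfold gdf_dn_38. apply (cd_concrete _ _ _ 4 (fun v => match v with | 0 => (Imp (Imp (Var 4) (Var 5)) (Var 6)) | 1 => (Var 5) | 2 => (Var 6) | _ => Var v end) _ (fun v => match v with | 3 => 1 | 4 => 2 | 5 => 3 | 6 => 0 | _ => v end)); [reflexivity|reflexivity| |reflexivity|reflexivity].
  unfold gdf_dn_20. mgu_tac 3.
Qed.
Definition gdf_dn_63 := (Imp (Imp (Imp (Var 0) (Var 1)) (Imp (Var 0) (Var 1))) (Imp (Var 1) (Imp (Var 0) (Var 1)))).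
Lemma gdn_63 : Der DNF gdf_dn_63.
Proof.
  apply (Dcd DNF gdf_dn_30 gdf_dn_62 gdf_dn_63 (gdn_30) (gdn_62)); [|reflexivity].
  unfold gdf_dn_30. apply (cd_concrete _ _ _ 2 (fun v => match v with | 0 => (Imp (Imp (Var 4) (Var 5)) (Imp (Var 4) (Var 5))) | 1 => (Imp (Var 5) (Imp (Var 4) (Var 5))) | 2 => (Imp (Var 4) (Var 5)) | 3 => (Imp (Var 4) (Var 5)) | _ => Var v end) _ (fun v => match v with | 4 => 0 | 5 => 1 | _ => v end)); [reflexivity|reflexivity| |reflexivity|reflexivity].
  unfold gdf_dn_62. mgu_tac 4.
Qed.
Definition gdf_dn_64 := (Imp (Imp (Imp (Var 0) (Var 1)) (Imp (Var 0) (Var 1))) (Imp (Var 2) (Imp (Var 1) (Var 2)))).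
Lemma gdn_64 : Der DNF gdf_dn_64.
Proof.
  apply (Dcd DNF gdf_dn_58 gdf_dn_63 gdf_dn_64 (gdn_58) (gdn_63)); [|reflexivity].
  unfold gdf_dn_58. apply (cd_concrete _ _ _ 4 (fun v => match v with | 0 => (Imp (Imp (Var 4) (Var 5)) (Imp (Var 4) (Var 5))) | 1 => (Var 5) | 2 => (Imp (Var 4) (Var 5)) | _ => Var v end) _ (fun v => match v with | 3 => 2 | 4 => 0 | 5 => 1 | _ => v end)); [reflexivity|reflexivity| |reflexivity|reflexivity].
  unfold gdf_dn_63. mgu_tac 3.
Qed.
Definition gdf_dn_65 := (Imp (Imp (Imp (Var 0) (Var 1)) (Imp (Var 0) (Var 1))) (Imp (Var 1) (Var 1))).
Lemma gdn_65 : Der DNF gdf_dn_65.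
Proof.
  apply (Dcd DNF gdf_dn_31 gdf_dn_64 gdf_dn_65 (gdn_31) (gdn_64)); [|reflexivity].
  unfold gdf_dn_31. apply (cd_concrete _ _ _ 3 (fun v => match v with | 0 => (Imp (Imp (Var 3) (Var 5)) (Imp (Var 3) (Var 5))) | 1 => (Var 5) | 2 => (Var 5) | 4 => (Var 5) | _ => Var v end) _ (fun v => match v with | 3 => 0 | 5 => 1 | _ => v end)); [reflexivity|reflexivity| |reflexivity|reflexivity].
  unfold gdf_dn_64. mgu_tac 5.
Qed.
Definition gdf_dn_66 := (Imp (Imp (Var 0) (Imp (Var 1) (Imp (Neg (Var 2)) (Var 2)))) (Imp (Var 0) (Imp (Var 1) (Var 2)))).
Lemma gdn_66 : Der DNF gdf_dn_66.
Proof.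
  apply (Dcd DNF gdf_dn_27 gdf_dn_23 gdf_dn_66 (gdn_27) (gdn_23)); [|reflexivity].
  unfold gdf_dn_27. apply (cd_concrete _ _ _ 3 (fun v => match v with | 0 => (Imp (Var 3) (Imp (Neg (Var 4)) (Var 4))) | 1 => (Imp (Var 3) (Var 4)) | _ => Var v end) _ (fun v => match v with | 2 => 0 | 3 => 1 | 4 => 2 | _ => v end)); [reflexivity|reflexivity| |reflexivity|reflexivity].
  unfold gdf_dn_23. mgu_tac 2.
Qed.
Definition gdf_dn_67 := (Imp (Imp (Var 0) (Var 1)) (Imp (Var 0) (Imp (Neg (Var 1)) (Var 2)))).
Lemma gdn_67 : Der DNF gdf_dn_67.
Proof.
  apply (Dcd DNF gdf_dn_27 L3f gdf_dn_67 (gdn_27) (DerL3 DNF)); [|reflexivity].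
  unfold gdf_dn_27. apply (cd_concrete _ _ _ 3 (fun v => match v with | 0 => (Var 3) | 1 => (Imp (Neg (Var 3)) (Var 4)) | _ => Var v end) _ (fun v => match v with | 2 => 0 | 3 => 1 | 4 => 2 | _ => v end)); [reflexivity|reflexivity| |reflexivity|reflexivity].
  unfold L3f. mgu_tac 2.
Qed.
Definition gdf_dn_68 := (Imp (Imp (Var 0) (Var 1)) (Imp (Neg (Var 1)) (Imp (Var 0) (Var 2)))).
Lemma gdn_68 : Der DNF gdf_dn_68.
Proof.
  apply (Dcd DNF gdf_dn_54 gdf_dn_67 gdf_dn_68 (gdn_54) (gdn_67)); [|reflexivity].
  unfold gdf_dn_54. apply (cd_concrete _ _ _ 4 (fun v => match v with | 0 => (Imp (Var 4) (Var 5)) | 1 => (Var 4) | 2 => (Neg (Var 5)) | 3 => (Var 6) | _ => Var v end) _ (fun v => match v with | 4 => 0 | 5 => 1 | 6 => 2 | _ => v end)); [reflexivity|reflexivity| |reflexivity|reflexivity].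
  unfold gdf_dn_67. mgu_tac 4.
Qed.
Definition gdf_dn_69 := (Imp (Imp (Neg (Var 0)) (Var 1)) (Imp (Neg (Var 1)) (Var 0))).
Lemma gdn_69 : Der DNF gdf_dn_69.
Proof.
  apply (Dcd DNF gdf_dn_66 gdf_dn_68 gdf_dn_69 (gdn_66) (gdn_68)); [|reflexivity].
  unfold gdf_dn_66. apply (cd_concrete _ _ _ 3 (fun v => match v with | 0 => (Imp (Neg (Var 5)) (Var 4)) | 1 => (Neg (Var 4)) | 2 => (Var 5) | 3 => (Neg (Var 5)) | _ => Var v end) _ (fun v => match v with | 4 => 1 | 5 => 0 | _ => v end)); [reflexivity|reflexivity| |reflexivity|reflexivity].
  unfold gdf_dn_68. mgu_tac 4.
Qed.
Definition gdf_dn_70 := (Imp (Imp (Var 0) (Var 1)) (Imp (Imp (Neg (Var 0)) (Var 2)) (Imp (Neg (Var 2)) (Var 1)))).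
Lemma gdn_70 : Der DNF gdf_dn_70.
Proof.
  apply (Dcd DNF gdf_dn_38 gdf_dn_69 gdf_dn_70 (gdn_38) (gdn_69)); [|reflexivity].
  unfold gdf_dn_38. apply (cd_concrete _ _ _ 4 (fun v => match v with | 0 => (Imp (Neg (Var 4)) (Var 5)) | 1 => (Neg (Var 5)) | 2 => (Var 4) | _ => Var v end) _ (fun v => match v with | 3 => 1 | 4 => 0 | 5 => 2 | _ => v end)); [reflexivity|reflexivity| |reflexivity|reflexivity].
  unfold gdf_dn_69. mgu_tac 3.
Qed.
Definition gdf_dn_71 := (Imp (Imp (Var 0) (Var 1)) (Imp (Imp (Neg (Var 0)) (Var 1)) (Var 1))).
Lemma gdn_71 : Der DNF gdf_dn_71.
Proof.
  apply (Dcd DNF gdf_dn_66 gdf_dn_70 gdf_dn_71 (gdn_66) (gdn_70)); [|reflexivity].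
  unfold gdf_dn_66. apply (cd_concrete _ _ _ 3 (fun v => match v with | 0 => (Imp (Var 3) (Var 5)) | 1 => (Imp (Neg (Var 3)) (Var 5)) | 2 => (Var 5) | 4 => (Var 5) | _ => Var v end) _ (fun v => match v with | 3 => 0 | 5 => 1 | _ => v end)); [reflexivity|reflexivity| |reflexivity|reflexivity].
  unfold gdf_dn_70. mgu_tac 5.
Qed.
Definition gdf_dn_72 := (Imp (Imp (Neg (Var 0)) (Var 1)) (Imp (Imp (Var 0) (Var 1)) (Var 1))).
Lemma gdn_72 : Der DNF gdf_dn_72.
Proof.
  apply (Dcd DNF gdf_dn_32 gdf_dn_71 gdf_dn_72 (gdn_32) (gdn_71)); [|reflexivity].
  unfold gdf_dn_32. apply (cd_concrete _ _ _ 3 (fun v => match v with | 0 => (Imp (Var 3) (Var 4)) | 1 => (Imp (Neg (Var 3)) (Var 4)) | 2 => (Var 4) | _ => Var v end) _ (fun v => match v with | 3 => 0 | 4 => 1 | _ => v end)); [reflexivity|reflexivity| |reflexivity|reflexivity].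
  unfold gdf_dn_71. mgu_tac 3.
Qed.
Definition gdf_dn_73 := (Imp (Imp (Var 0) (Neg (Var 0))) (Neg (Var 0))).
Lemma gdn_73 : Der DNF gdf_dn_73.
Proof.
  apply (Dcd DNF gdf_dn_72 gdf_dn_1 gdf_dn_73 (gdn_72) (gdn_1)); [|reflexivity].
  unfold gdf_dn_72. apply (cd_concrete _ _ _ 2 (fun v => match v with | 1 => (Neg (Var 0)) | 2 => (Neg (Var 0)) | _ => Var v end) _ (fun v => match v with | 0 => 0 | _ => v end)); [reflexivity|reflexivity| |reflexivity|reflexivity].
  unfold gdf_dn_1. mgu_tac 3.
Qed.
Definition gdf_dn_74 := (Imp (Imp (Var 0) (Imp (Var 1) (Neg (Var 1)))) (Imp (Var 0) (Neg (Var 1)))).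
Lemma gdn_74 : Der DNF gdf_dn_74.
Proof.
  apply (Dcd DNF gdf_dn_27 gdf_dn_73 gdf_dn_74 (gdn_27) (gdn_73)); [|reflexivity].
  unfold gdf_dn_27. apply (cd_concrete _ _ _ 3 (fun v => match v with | 0 => (Imp (Var 3) (Neg (Var 3))) | 1 => (Neg (Var 3)) | _ => Var v end) _ (fun v => match v with | 2 => 0 | 3 => 1 | _ => v end)); [reflexivity|reflexivity| |reflexivity|reflexivity].
  unfold gdf_dn_73. mgu_tac 2.
Qed.
Definition gdf_dn_75 := (Imp (Imp (Var 0) (Imp (Var 1) (Imp (Var 2) (Neg (Var 2))))) (Imp (Var 0) (Imp (Var 1) (Neg (Var 2))))).
Lemma gdn_75 : Der DNF gdf_dn_75.
Proof.
  apply (Dcd DNF gdf_dn_27 gdf_dn_74 gdf_dn_75 (gdn_27) (gdn_74)); [|reflexivity].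
  unfold gdf_dn_27. apply (cd_concrete _ _ _ 3 (fun v => match v with | 0 => (Imp (Var 3) (Imp (Var 4) (Neg (Var 4)))) | 1 => (Imp (Var 3) (Neg (Var 4))) | _ => Var v end) _ (fun v => match v with | 2 => 0 | 3 => 1 | 4 => 2 | _ => v end)); [reflexivity|reflexivity| |reflexivity|reflexivity].
  unfold gdf_dn_74. mgu_tac 2.
Qed.
Definition gdf_dn_76 := (Imp (Imp (Var 0) (Var 1)) (Imp (Neg (Var 1)) (Neg (Var 0)))).
Lemma gdn_76 : Der DNF gdf_dn_76.
Proof.
  apply (Dcd DNF gdf_dn_75 gdf_dn_68 gdf_dn_76 (gdn_75) (gdn_68)); [|reflexivity].
  unfold gdf_dn_75. apply (cd_concrete _ _ _ 3 (fun v => match v with | 0 => (Imp (Var 3) (Var 4)) | 1 => (Neg (Var 4)) | 2 => (Var 3) | 5 => (Neg (Var 3)) | _ => Var v end) _ (fun v => match v with | 3 => 0 | 4 => 1 | _ => v end)); [reflexivity|reflexivity| |reflexivity|reflexivity].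
  unfold gdf_dn_68. mgu_tac 6.
Qed.
Definition gdf_dn_77 := (Imp (Imp (Var 0) (Imp (Var 1) (Var 2))) (Imp (Var 0) (Imp (Neg (Var 2)) (Neg (Var 1))))).
Lemma gdn_77 : Der DNF gdf_dn_77.
Proof.
  apply (Dcd DNF gdf_dn_27 gdf_dn_76 gdf_dn_77 (gdn_27) (gdn_76)); [|reflexivity].
  unfold gdf_dn_27. apply (cd_concrete _ _ _ 3 (fun v => match v with | 0 => (Imp (Var 3) (Var 4)) | 1 => (Imp (Neg (Var 4)) (Neg (Var 3))) | _ => Var v end) _ (fun v => match v with | 2 => 0 | 3 => 1 | 4 => 2 | _ => v end)); [reflexivity|reflexivity| |reflexivity|reflexivity].
  unfold gdf_dn_76. mgu_tac 2.
Qed.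
Definition gdf_dn_78 := (Imp (Imp (Var 0) (Var 0)) (Imp (Neg (Var 0)) (Neg (Var 0)))).
Lemma gdn_78 : Der DNF gdf_dn_78.
Proof.
  apply (Dcd DNF gdf_dn_77 gdf_dn_41 gdf_dn_78 (gdn_77) (gdn_41)); [|reflexivity].
  unfold gdf_dn_77. apply (cd_concrete _ _ _ 3 (fun v => match v with | 0 => (Imp (Var 3) (Var 3)) | 1 => (Var 3) | 2 => (Var 3) | _ => Var v end) _ (fun v => match v with | 3 => 0 | _ => v end)); [reflexivity|reflexivity| |reflexivity|reflexivity].
  unfold gdf_dn_41. mgu_tac 3.
Qed.
Definition gdf_dn_79 := (Imp (Var 0) (Imp (Imp (Var 1) (Var 1)) (Imp (Var 1) (Var 0)))).
Lemma gdn_79 : Der DNF gdf_dn_79.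
Proof.
  apply (Dcd DNF gdf_dn_51 gdf_dn_41 gdf_dn_79 (gdn_51) (gdn_41)); [|reflexivity].
  unfold gdf_dn_51. apply (cd_concrete _ _ _ 4 (fun v => match v with | 0 => (Imp (Var 4) (Var 4)) | 1 => (Var 4) | 2 => (Var 4) | _ => Var v end) _ (fun v => match v with | 3 => 0 | 4 => 1 | _ => v end)); [reflexivity|reflexivity| |reflexivity|reflexivity].
  unfold gdf_dn_41. mgu_tac 3.
Qed.
Definition gdf_dn_80 := (Imp (Imp (Var 0) (Imp (Var 1) (Imp (Var 2) (Var 3)))) (Imp (Var 0) (Imp (Imp (Var 1) (Var 2)) (Imp (Var 1) (Var 3))))).
Lemma gdn_80 : Der DNF gdf_dn_80.
Proof.
  apply (Dcd DNF gdf_dn_27 gdf_dn_56 gdf_dn_80 (gdn_27) (gdn_56)); [|reflexivity].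
  unfold gdf_dn_27. apply (cd_concrete _ _ _ 3 (fun v => match v with | 0 => (Imp (Var 3) (Imp (Var 4) (Var 5))) | 1 => (Imp (Imp (Var 3) (Var 4)) (Imp (Var 3) (Var 5))) | _ => Var v end) _ (fun v => match v with | 2 => 0 | 3 => 1 | 4 => 2 | 5 => 3 | _ => v end)); [reflexivity|reflexivity| |reflexivity|reflexivity].
  unfold gdf_dn_56. mgu_tac 2.
Qed.
Definition gdf_dn_81 := (Imp (Imp (Var 0) (Imp (Var 1) (Imp (Var 2) (Var 3)))) (Imp (Var 0) (Imp (Var 1) (Imp (Imp (Var 4) (Var 2)) (Imp (Var 4) (Var 3)))))).
Lemma gdn_81 : Der DNF gdf_dn_81.
Proof.
  apply (Dcd DNF gdf_dn_27 gdf_dn_33 gdf_dn_81 (gdn_27) (gdn_33)); [|reflexivity].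
  unfold gdf_dn_27. apply (cd_concrete _ _ _ 3 (fun v => match v with | 0 => (Imp (Var 3) (Imp (Var 4) (Var 5))) | 1 => (Imp (Var 3) (Imp (Imp (Var 6) (Var 4)) (Imp (Var 6) (Var 5)))) | _ => Var v end) _ (fun v => match v with | 2 => 0 | 3 => 1 | 4 => 2 | 5 => 3 | 6 => 4 | _ => v end)); [reflexivity|reflexivity| |reflexivity|reflexivity].
  unfold gdf_dn_33. mgu_tac 2.
Qed.
Definition gdf_dn_82 := (Imp (Imp (Var 0) (Var 1)) (Imp (Var 0) (Imp (Var 2) (Var 1)))).
Lemma gdn_82 : Der DNF gdf_dn_82.
Proof.
  apply (Dcd DNF gdf_dn_27 gdf_dn_19 gdf_dn_82 (gdn_27) (gdn_19)); [|reflexivity].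
  unfold gdf_dn_27. apply (cd_concrete _ _ _ 3 (fun v => match v with | 0 => (Var 3) | 1 => (Imp (Var 4) (Var 3)) | _ => Var v end) _ (fun v => match v with | 2 => 0 | 3 => 1 | 4 => 2 | _ => v end)); [reflexivity|reflexivity| |reflexivity|reflexivity].
  unfold gdf_dn_19. mgu_tac 2.
Qed.
Definition gdf_dn_83 := (Imp (Imp (Var 0) (Imp (Var 1) (Var 2))) (Imp (Var 0) (Imp (Var 1) (Imp (Var 3) (Var 2))))).
Lemma gdn_83 : Der DNF gdf_dn_83.
Proof.
  apply (Dcd DNF gdf_dn_27 gdf_dn_82 gdf_dn_83 (gdn_27) (gdn_82)); [|reflexivity].
  unfold gdf_dn_27. apply (cd_concrete _ _ _ 3 (fun v => match v with | 0 => (Imp (Var 3) (Var 4)) | 1 => (Imp (Var 3) (Imp (Var 5) (Var 4))) | _ => Var v end) _ (fun v => match v with | 2 => 0 | 3 => 1 | 4 => 2 | 5 => 3 | _ => v end)); [reflexivity|reflexivity| |reflexivity|reflexivity].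
  unfold gdf_dn_82. mgu_tac 2.
Qed.
Definition gdf_dn_84 := (Imp (Imp (Var 0) (Var 0)) (Imp (Var 0) (Imp (Var 1) (Var 0)))).
Lemma gdn_84 : Der DNF gdf_dn_84.
Proof.
  apply (Dcd DNF gdf_dn_83 gdf_dn_41 gdf_dn_84 (gdn_83) (gdn_41)); [|reflexivity].
  unfold gdf_dn_83. apply (cd_concrete _ _ _ 4 (fun v => match v with | 0 => (Imp (Var 4) (Var 4)) | 1 => (Var 4) | 2 => (Var 4) | _ => Var v end) _ (fun v => match v with | 3 => 1 | 4 => 0 | _ => v end)); [reflexivity|reflexivity| |reflexivity|reflexivity].
  unfold gdf_dn_41. mgu_tac 3.
Qed.
Definition gdf_dn_85 := (Imp (Imp (Var 0) (Var 0)) (Imp (Var 0) (Imp (Imp (Var 1) (Var 2)) (Imp (Var 1) (Var 0))))).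
Lemma gdn_85 : Der DNF gdf_dn_85.
Proof.
  apply (Dcd DNF gdf_dn_81 gdf_dn_84 gdf_dn_85 (gdn_81) (gdn_84)); [|reflexivity].
  unfold gdf_dn_81. apply (cd_concrete _ _ _ 5 (fun v => match v with | 0 => (Imp (Var 5) (Var 5)) | 1 => (Var 5) | 2 => (Var 6) | 3 => (Var 5) | _ => Var v end) _ (fun v => match v with | 4 => 1 | 5 => 0 | 6 => 2 | _ => v end)); [reflexivity|reflexivity| |reflexivity|reflexivity].
  unfold gdf_dn_84. mgu_tac 4.
Qed.
Definition gdf_dn_86 := (Imp (Imp (Var 0) (Var 0)) (Imp (Imp (Var 1) (Var 2)) (Imp (Var 0) (Imp (Var 1) (Var 0))))).
Lemma gdn_86 : Der DNF gdf_dn_86.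
Proof.
  apply (Dcd DNF gdf_dn_54 gdf_dn_85 gdf_dn_86 (gdn_54) (gdn_85)); [|reflexivity].
  unfold gdf_dn_54. apply (cd_concrete _ _ _ 4 (fun v => match v with | 0 => (Imp (Var 4) (Var 4)) | 1 => (Var 4) | 2 => (Imp (Var 5) (Var 6)) | 3 => (Imp (Var 5) (Var 4)) | _ => Var v end) _ (fun v => match v with | 4 => 0 | 5 => 1 | 6 => 2 | _ => v end)); [reflexivity|reflexivity| |reflexivity|reflexivity].
  unfold gdf_dn_85. mgu_tac 4.
Qed.
Definition gdf_dn_87 := (Imp (Imp (Var 0) (Var 0)) (Imp (Imp (Var 1) (Imp (Var 2) (Var 3))) (Imp (Var 1) (Imp (Var 0) (Imp (Var 2) (Var 0)))))).
Lemma gdn_87 : Der DNF gdf_dn_87.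
Proof.
  apply (Dcd DNF gdf_dn_33 gdf_dn_86 gdf_dn_87 (gdn_33) (gdn_86)); [|reflexivity].
  unfold gdf_dn_33. apply (cd_concrete _ _ _ 4 (fun v => match v with | 0 => (Imp (Var 4) (Var 4)) | 1 => (Imp (Var 5) (Var 6)) | 2 => (Imp (Var 4) (Imp (Var 5) (Var 4))) | _ => Var v end) _ (fun v => match v with | 3 => 1 | 4 => 0 | 5 => 2 | 6 => 3 | _ => v end)); [reflexivity|reflexivity| |reflexivity|reflexivity].
  unfold gdf_dn_86. mgu_tac 3.
Qed.
Definition gdf_dn_88 := (Imp (Imp (Var 0) (Imp (Var 1) (Var 2))) (Imp (Imp (Var 3) (Var 3)) (Imp (Var 0) (Imp (Var 3) (Imp (Var 1) (Var 3)))))).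
Lemma gdn_88 : Der DNF gdf_dn_88.
Proof.
  apply (Dcd DNF gdf_dn_32 gdf_dn_87 gdf_dn_88 (gdn_32) (gdn_87)); [|reflexivity].
  unfold gdf_dn_32. apply (cd_concrete _ _ _ 3 (fun v => match v with | 0 => (Imp (Var 3) (Var 3)) | 1 => (Imp (Var 4) (Imp (Var 5) (Var 6))) | 2 => (Imp (Var 4) (Imp (Var 3) (Imp (Var 5) (Var 3)))) | _ => Var v end) _ (fun v => match v with | 3 => 3 | 4 => 0 | 5 => 1 | 6 => 2 | _ => v end)); [reflexivity|reflexivity| |reflexivity|reflexivity].
  unfold gdf_dn_87. mgu_tac 3.
Qed.
Definition gdf_dn_89 := (Imp (Imp (Var 0) (Var 0)) (Imp (Imp (Var 1) (Var 1)) (Imp (Var 0) (Imp (Var 1) (Var 0))))).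
Lemma gdn_89 : Der DNF gdf_dn_89.
Proof.
  apply (Dcd DNF gdf_dn_88 gdf_dn_41 gdf_dn_89 (gdn_88) (gdn_41)); [|reflexivity].
  unfold gdf_dn_88. apply (cd_concrete _ _ _ 4 (fun v => match v with | 0 => (Imp (Var 4) (Var 4)) | 1 => (Var 4) | 2 => (Var 4) | _ => Var v end) _ (fun v => match v with | 3 => 0 | 4 => 1 | _ => v end)); [reflexivity|reflexivity| |reflexivity|reflexivity].
  unfold gdf_dn_41. mgu_tac 3.
Qed.
Definition gdf_dn_90 := (Imp (Imp (Var 0) (Imp (Var 1) (Var 2))) (Imp (Var 0) (Imp (Var 1) (Imp (Neg (Var 2)) (Var 3))))).
Lemma gdn_90 : Der DNF gdf_dn_90.
Proof.
  apply (Dcd DNF gdf_dn_27 gdf_dn_67 gdf_dn_90 (gdn_27) (gdn_67)); [|reflexivity].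
  unfold gdf_dn_27. apply (cd_concrete _ _ _ 3 (fun v => match v with | 0 => (Imp (Var 3) (Var 4)) | 1 => (Imp (Var 3) (Imp (Neg (Var 4)) (Var 5))) | _ => Var v end) _ (fun v => match v with | 2 => 0 | 3 => 1 | 4 => 2 | 5 => 3 | _ => v end)); [reflexivity|reflexivity| |reflexivity|reflexivity].
  unfold gdf_dn_67. mgu_tac 2.
Qed.
Definition gdf_dn_91 := (Imp (Imp (Var 0) (Var 0)) (Imp (Var 0) (Imp (Neg (Var 0)) (Var 1)))).
Lemma gdn_91 : Der DNF gdf_dn_91.
Proof.
  apply (Dcd DNF gdf_dn_90 gdf_dn_41 gdf_dn_91 (gdn_90) (gdn_41)); [|reflexivity].
  unfold gdf_dn_90. apply (cd_concrete _ _ _ 4 (fun v => match v with | 0 => (Imp (Var 4) (Var 4)) | 1 => (Var 4) | 2 => (Var 4) | _ => Var v end) _ (fun v => match v with | 3 => 1 | 4 => 0 | _ => v end)); [reflexivity|reflexivity| |reflexivity|reflexivity].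
  unfold gdf_dn_41. mgu_tac 3.
Qed.
Definition gdf_dn_92 := (Imp (Imp (Var 0) (Var 0)) (Imp (Imp (Var 1) (Var 2)) (Imp (Var 0) (Imp (Neg (Var 0)) (Var 2))))).
Lemma gdn_92 : Der DNF gdf_dn_92.
Proof.
  apply (Dcd DNF gdf_dn_39 gdf_dn_91 gdf_dn_92 (gdn_39) (gdn_91)); [|reflexivity].
  unfold gdf_dn_39. apply (cd_concrete _ _ _ 5 (fun v => match v with | 0 => (Imp (Var 5) (Var 5)) | 1 => (Var 5) | 2 => (Neg (Var 5)) | 3 => (Var 6) | _ => Var v end) _ (fun v => match v with | 4 => 2 | 5 => 0 | 6 => 1 | _ => v end)); [reflexivity|reflexivity| |reflexivity|reflexivity].
  unfold gdf_dn_91. mgu_tac 4.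
Qed.
Definition gdf_dn_93 := (Imp (Imp (Var 0) (Var 0)) (Imp (Imp (Var 1) (Var 2)) (Imp (Imp (Var 3) (Var 1)) (Imp (Var 0) (Imp (Neg (Var 0)) (Var 2)))))).
Lemma gdn_93 : Der DNF gdf_dn_93.
Proof.
  apply (Dcd DNF gdf_dn_37 gdf_dn_92 gdf_dn_93 (gdn_37) (gdn_92)); [|reflexivity].
  unfold gdf_dn_37. apply (cd_concrete _ _ _ 6 (fun v => match v with | 0 => (Imp (Var 6) (Var 6)) | 1 => (Imp (Var 7) (Var 8)) | 2 => (Var 6) | 3 => (Neg (Var 6)) | 4 => (Var 8) | _ => Var v end) _ (fun v => match v with | 5 => 2 | 6 => 0 | 7 => 3 | 8 => 1 | _ => v end)); [reflexivity|reflexivity| |reflexivity|reflexivity].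
  unfold gdf_dn_92. mgu_tac 5.
Qed.
Definition gdf_dn_94 := (Imp (Imp (Var 0) (Var 0)) (Imp (Imp (Var 1) (Var 1)) (Imp (Var 0) (Imp (Neg (Var 0)) (Var 1))))).
Lemma gdn_94 : Der DNF gdf_dn_94.
Proof.
  apply (Dcd DNF gdf_dn_31 gdf_dn_93 gdf_dn_94 (gdn_31) (gdn_93)); [|reflexivity].
  unfold gdf_dn_31. apply (cd_concrete _ _ _ 3 (fun v => match v with | 0 => (Imp (Var 3) (Var 3)) | 1 => (Imp (Var 5) (Var 5)) | 2 => (Imp (Var 3) (Imp (Neg (Var 3)) (Var 5))) | 4 => (Var 5) | 6 => (Var 5) | _ => Var v end) _ (fun v => match v with | 3 => 0 | 5 => 1 | _ => v end)); [reflexivity|reflexivity| |reflexivity|reflexivity].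
  unfold gdf_dn_93. mgu_tac 7.
Qed.
Definition gdf_dn_95 := (Imp (Imp (Var 0) (Var 0)) (Imp (Neg (Var 0)) (Imp (Var 0) (Var 1)))).
Lemma gdn_95 : Der DNF gdf_dn_95.
Proof.
  apply (Dcd DNF gdf_dn_54 gdf_dn_91 gdf_dn_95 (gdn_54) (gdn_91)); [|reflexivity].
  unfold gdf_dn_54. apply (cd_concrete _ _ _ 4 (fun v => match v with | 0 => (Imp (Var 4) (Var 4)) | 1 => (Var 4) | 2 => (Neg (Var 4)) | 3 => (Var 5) | _ => Var v end) _ (fun v => match v with | 4 => 0 | 5 => 1 | _ => v end)); [reflexivity|reflexivity| |reflexivity|reflexivity].
  unfold gdf_dn_91. mgu_tac 4.
Qed.
Definition gdf_dn_96 := (Imp (Imp (Var 0) (Var 0)) (Imp (Imp (Var 1) (Var 2)) (Imp (Neg (Var 0)) (Imp (Var 0) (Var 2))))).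
Lemma gdn_96 : Der DNF gdf_dn_96.
Proof.
  apply (Dcd DNF gdf_dn_39 gdf_dn_95 gdf_dn_96 (gdn_39) (gdn_95)); [|reflexivity].
  unfold gdf_dn_39. apply (cd_concrete _ _ _ 5 (fun v => match v with | 0 => (Imp (Var 5) (Var 5)) | 1 => (Neg (Var 5)) | 2 => (Var 5) | 3 => (Var 6) | _ => Var v end) _ (fun v => match v with | 4 => 2 | 5 => 0 | 6 => 1 | _ => v end)); [reflexivity|reflexivity| |reflexivity|reflexivity].
  unfold gdf_dn_95. mgu_tac 4.
Qed.
Definition gdf_dn_97 := (Imp (Imp (Var 0) (Var 0)) (Imp (Imp (Var 1) (Var 2)) (Imp (Imp (Var 3) (Var 1)) (Imp (Neg (Var 0)) (Imp (Var 0) (Var 2)))))).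
Lemma gdn_97 : Der DNF gdf_dn_97.
Proof.
  apply (Dcd DNF gdf_dn_37 gdf_dn_96 gdf_dn_97 (gdn_37) (gdn_96)); [|reflexivity].
  unfold gdf_dn_37. apply (cd_concrete _ _ _ 6 (fun v => match v with | 0 => (Imp (Var 6) (Var 6)) | 1 => (Imp (Var 7) (Var 8)) | 2 => (Neg (Var 6)) | 3 => (Var 6) | 4 => (Var 8) | _ => Var v end) _ (fun v => match v with | 5 => 2 | 6 => 0 | 7 => 3 | 8 => 1 | _ => v end)); [reflexivity|reflexivity| |reflexivity|reflexivity].
  unfold gdf_dn_96. mgu_tac 5.
Qed.
Definition gdf_dn_98 := (Imp (Imp (Var 0) (Var 0)) (Imp (Imp (Var 1) (Var 1)) (Imp (Neg (Var 0)) (Imp (Var 0) (Var 1))))).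
Lemma gdn_98 : Der DNF gdf_dn_98.
Proof.
  apply (Dcd DNF gdf_dn_31 gdf_dn_97 gdf_dn_98 (gdn_31) (gdn_97)); [|reflexivity].
  unfold gdf_dn_31. apply (cd_concrete _ _ _ 3 (fun v => match v with | 0 => (Imp (Var 3) (Var 3)) | 1 => (Imp (Var 5) (Var 5)) | 2 => (Imp (Neg (Var 3)) (Imp (Var 3) (Var 5))) | 4 => (Var 5) | 6 => (Var 5) | _ => Var v end) _ (fun v => match v with | 3 => 0 | 5 => 1 | _ => v end)); [reflexivity|reflexivity| |reflexivity|reflexivity].
  unfold gdf_dn_97. mgu_tac 7.
Qed.
Definition gdf_dn_99 := (Imp (Var 0) (Imp (Imp (Var 1) (Neg (Var 0))) (Imp (Var 1) (Var 2)))).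
Lemma gdn_99 : Der DNF gdf_dn_99.
Proof.
  apply (Dcd DNF gdf_dn_33 L3f gdf_dn_99 (gdn_33) (DerL3 DNF)); [|reflexivity].
  unfold gdf_dn_33. apply (cd_concrete _ _ _ 4 (fun v => match v with | 0 => (Var 4) | 1 => (Neg (Var 4)) | 2 => (Var 5) | _ => Var v end) _ (fun v => match v with | 3 => 1 | 4 => 0 | 5 => 2 | _ => v end)); [reflexivity|reflexivity| |reflexivity|reflexivity].
  unfold L3f. mgu_tac 3.
Qed.
Definition gdf_dn_100 := (Imp (Imp (Var 0) (Neg (Var 1))) (Imp (Var 1) (Imp (Var 0) (Var 2)))).
Lemma gdn_100 : Der DNF gdf_dn_100.
Proof.
  apply (Dcd DNF gdf_dn_32 gdf_dn_99 gdf_dn_100 (gdn_32) (gdn_99)); [|reflexivity].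
  unfold gdf_dn_32. apply (cd_concrete _ _ _ 3 (fun v => match v with | 0 => (Var 3) | 1 => (Imp (Var 4) (Neg (Var 3))) | 2 => (Imp (Var 4) (Var 5)) | _ => Var v end) _ (fun v => match v with | 3 => 1 | 4 => 0 | 5 => 2 | _ => v end)); [reflexivity|reflexivity| |reflexivity|reflexivity].
  unfold gdf_dn_99. mgu_tac 3.
Qed.
Definition gdf_dn_101 := (Imp (Imp (Var 0) (Neg (Var 1))) (Imp (Var 1) (Neg (Var 0)))).
Lemma gdn_101 : Der DNF gdf_dn_101.
Proof.
  apply (Dcd DNF gdf_dn_75 gdf_dn_100 gdf_dn_101 (gdn_75) (gdn_100)); [|reflexivity].
  unfold gdf_dn_75. apply (cd_concrete _ _ _ 3 (fun v => match v with | 0 => (Imp (Var 3) (Neg (Var 4))) | 1 => (Var 4) | 2 => (Var 3) | 5 => (Neg (Var 3)) | _ => Var v end) _ (fun v => match v with | 3 => 0 | 4 => 1 | _ => v end)); [reflexivity|reflexivity| |reflexivity|reflexivity].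
  unfold gdf_dn_100. mgu_tac 6.
Qed.
Definition gdf_dn_102 := (Imp (Imp (Var 0) (Imp (Var 1) (Neg (Var 2)))) (Imp (Var 0) (Imp (Var 2) (Neg (Var 1))))).
Lemma gdn_102 : Der DNF gdf_dn_102.
Proof.
  apply (Dcd DNF gdf_dn_27 gdf_dn_101 gdf_dn_102 (gdn_27) (gdn_101)); [|reflexivity].
  unfold gdf_dn_27. apply (cd_concrete _ _ _ 3 (fun v => match v with | 0 => (Imp (Var 3) (Neg (Var 4))) | 1 => (Imp (Var 4) (Neg (Var 3))) | _ => Var v end) _ (fun v => match v with | 2 => 0 | 3 => 1 | 4 => 2 | _ => v end)); [reflexivity|reflexivity| |reflexivity|reflexivity].
  unfold gdf_dn_101. mgu_tac 2.
Qed.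
Definition gdf_dn_103 := (Imp (Imp (Var 0) (Imp (Var 1) (Imp (Var 2) (Neg (Var 3))))) (Imp (Var 0) (Imp (Var 1) (Imp (Var 3) (Neg (Var 2)))))).
Lemma gdn_103 : Der DNF gdf_dn_103.
Proof.
  apply (Dcd DNF gdf_dn_27 gdf_dn_102 gdf_dn_103 (gdn_27) (gdn_102)); [|reflexivity].
  unfold gdf_dn_27. apply (cd_concrete _ _ _ 3 (fun v => match v with | 0 => (Imp (Var 3) (Imp (Var 4) (Neg (Var 5)))) | 1 => (Imp (Var 3) (Imp (Var 5) (Neg (Var 4)))) | _ => Var v end) _ (fun v => match v with | 2 => 0 | 3 => 1 | 4 => 2 | 5 => 3 | _ => v end)); [reflexivity|reflexivity| |reflexivity|reflexivity].
  unfold gdf_dn_102. mgu_tac 2.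
Qed.
Definition gdf_dn_104 := (Imp (Imp (Var 0) (Var 1)) (Imp (Var 0) (Imp (Imp (Var 1) (Var 2)) (Var 2)))).
Lemma gdn_104 : Der DNF gdf_dn_104.
Proof.
  apply (Dcd DNF gdf_dn_27 gdf_dn_25 gdf_dn_104 (gdn_27) (gdn_25)); [|reflexivity].
  unfold gdf_dn_27. apply (cd_concrete _ _ _ 3 (fun v => match v with | 0 => (Var 3) | 1 => (Imp (Imp (Var 3) (Var 4)) (Var 4)) | _ => Var v end) _ (fun v => match v with | 2 => 0 | 3 => 1 | 4 => 2 | _ => v end)); [reflexivity|reflexivity| |reflexivity|reflexivity].
  unfold gdf_dn_25. mgu_tac 2.
Qed.
Definition gdf_dn_105 := (Imp (Imp (Var 0) (Imp (Var 1) (Var 2))) (Imp (Var 0) (Imp (Var 1) (Imp (Imp (Var 2) (Var 3)) (Var 3))))).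
Lemma gdn_105 : Der DNF gdf_dn_105.
Proof.
  apply (Dcd DNF gdf_dn_27 gdf_dn_104 gdf_dn_105 (gdn_27) (gdn_104)); [|reflexivity].
  unfold gdf_dn_27. apply (cd_concrete _ _ _ 3 (fun v => match v with | 0 => (Imp (Var 3) (Var 4)) | 1 => (Imp (Var 3) (Imp (Imp (Var 4) (Var 5)) (Var 5))) | _ => Var v end) _ (fun v => match v with | 2 => 0 | 3 => 1 | 4 => 2 | 5 => 3 | _ => v end)); [reflexivity|reflexivity| |reflexivity|reflexivity].
  unfold gdf_dn_104. mgu_tac 2.
Qed.
Definition gdf_dn_106 := (Imp (Imp (Var 0) (Var 0)) (Imp (Var 0) (Imp (Imp (Var 0) (Var 1)) (Var 1)))).
Lemma gdn_106 : Der DNF gdf_dn_106.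
Proof.
  apply (Dcd DNF gdf_dn_105 gdf_dn_41 gdf_dn_106 (gdn_105) (gdn_41)); [|reflexivity].
  unfold gdf_dn_105. apply (cd_concrete _ _ _ 4 (fun v => match v with | 0 => (Imp (Var 4) (Var 4)) | 1 => (Var 4) | 2 => (Var 4) | _ => Var v end) _ (fun v => match v with | 3 => 1 | 4 => 0 | _ => v end)); [reflexivity|reflexivity| |reflexivity|reflexivity].
  unfold gdf_dn_41. mgu_tac 3.
Qed.
Definition gdf_dn_107 := (Imp (Imp (Var 0) (Var 0)) (Imp (Var 0) (Imp (Var 1) (Neg (Imp (Var 0) (Neg (Var 1))))))).
Lemma gdn_107 : Der DNF gdf_dn_107.
Proof.
  apply (Dcd DNF gdf_dn_103 gdf_dn_106 gdf_dn_107 (gdn_103) (gdn_106)); [|reflexivity].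
  unfold gdf_dn_103. apply (cd_concrete _ _ _ 4 (fun v => match v with | 0 => (Imp (Var 4) (Var 4)) | 1 => (Var 4) | 2 => (Imp (Var 4) (Neg (Var 3))) | 5 => (Neg (Var 3)) | _ => Var v end) _ (fun v => match v with | 3 => 1 | 4 => 0 | _ => v end)); [reflexivity|reflexivity| |reflexivity|reflexivity].
  unfold gdf_dn_106. mgu_tac 6.
Qed.
Definition gdf_dn_108 := (Imp (Imp (Var 0) (Var 0)) (Imp (Var 0) (Imp (Imp (Var 1) (Var 2)) (Imp (Var 1) (Neg (Imp (Var 0) (Neg (Var 2)))))))).
Lemma gdn_108 : Der DNF gdf_dn_108.
Proof.
  apply (Dcd DNF gdf_dn_81 gdf_dn_107 gdf_dn_108 (gdn_81) (gdn_107)); [|reflexivity].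
  unfold gdf_dn_81. apply (cd_concrete _ _ _ 5 (fun v => match v with | 0 => (Imp (Var 5) (Var 5)) | 1 => (Var 5) | 2 => (Var 6) | 3 => (Neg (Imp (Var 5) (Neg (Var 6)))) | _ => Var v end) _ (fun v => match v with | 4 => 1 | 5 => 0 | 6 => 2 | _ => v end)); [reflexivity|reflexivity| |reflexivity|reflexivity].
  unfold gdf_dn_107. mgu_tac 4.
Qed.
Definition gdf_dn_109 := (Imp (Imp (Var 0) (Var 0)) (Imp (Imp (Var 1) (Var 2)) (Imp (Var 0) (Imp (Var 1) (Neg (Imp (Var 0) (Neg (Var 2)))))))).
Lemma gdn_109 : Der DNF gdf_dn_109.
Proof.
  apply (Dcd DNF gdf_dn_54 gdf_dn_108 gdf_dn_109 (gdn_54) (gdn_108)); [|reflexivity].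
  unfold gdf_dn_54. apply (cd_concrete _ _ _ 4 (fun v => match v with | 0 => (Imp (Var 4) (Var 4)) | 1 => (Var 4) | 2 => (Imp (Var 5) (Var 6)) | 3 => (Imp (Var 5) (Neg (Imp (Var 4) (Neg (Var 6))))) | _ => Var v end) _ (fun v => match v with | 4 => 0 | 5 => 1 | 6 => 2 | _ => v end)); [reflexivity|reflexivity| |reflexivity|reflexivity].
  unfold gdf_dn_108. mgu_tac 4.
Qed.
Definition gdf_dn_110 := (Imp (Imp (Var 0) (Var 0)) (Imp (Imp (Var 1) (Imp (Var 2) (Var 3))) (Imp (Var 1) (Imp (Var 0) (Imp (Var 2) (Neg (Imp (Var 0) (Neg (Var 3))))))))).
Lemma gdn_110 : Der DNF gdf_dn_110.
Proof.
  apply (Dcd DNF gdf_dn_33 gdf_dn_109 gdf_dn_110 (gdn_33) (gdn_109)); [|reflexivity].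
  unfold gdf_dn_33. apply (cd_concrete _ _ _ 4 (fun v => match v with | 0 => (Imp (Var 4) (Var 4)) | 1 => (Imp (Var 5) (Var 6)) | 2 => (Imp (Var 4) (Imp (Var 5) (Neg (Imp (Var 4) (Neg (Var 6)))))) | _ => Var v end) _ (fun v => match v with | 3 => 1 | 4 => 0 | 5 => 2 | 6 => 3 | _ => v end)); [reflexivity|reflexivity| |reflexivity|reflexivity].
  unfold gdf_dn_109. mgu_tac 3.
Qed.
Definition gdf_dn_111 := (Imp (Imp (Var 0) (Imp (Var 1) (Var 2))) (Imp (Imp (Var 3) (Var 3)) (Imp (Var 0) (Imp (Var 3) (Imp (Var 1) (Neg (Imp (Var 3) (Neg (Var 2))))))))).
Lemma gdn_111 : Der DNF gdf_dn_111.
Proof.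
  apply (Dcd DNF gdf_dn_32 gdf_dn_110 gdf_dn_111 (gdn_32) (gdn_110)); [|reflexivity].
  unfold gdf_dn_32. apply (cd_concrete _ _ _ 3 (fun v => match v with | 0 => (Imp (Var 3) (Var 3)) | 1 => (Imp (Var 4) (Imp (Var 5) (Var 6))) | 2 => (Imp (Var 4) (Imp (Var 3) (Imp (Var 5) (Neg (Imp (Var 3) (Neg (Var 6))))))) | _ => Var v end) _ (fun v => match v with | 3 => 3 | 4 => 0 | 5 => 1 | 6 => 2 | _ => v end)); [reflexivity|reflexivity| |reflexivity|reflexivity].
  unfold gdf_dn_110. mgu_tac 3.
Qed.
Definition gdf_dn_112 := (Imp (Imp (Var 0) (Var 0)) (Imp (Imp (Var 1) (Var 1)) (Imp (Var 0) (Imp (Var 1) (Neg (Imp (Var 0) (Neg (Var 1)))))))).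
Lemma gdn_112 : Der DNF gdf_dn_112.
Proof.
  apply (Dcd DNF gdf_dn_111 gdf_dn_41 gdf_dn_112 (gdn_111) (gdn_41)); [|reflexivity].
  unfold gdf_dn_111. apply (cd_concrete _ _ _ 4 (fun v => match v with | 0 => (Imp (Var 4) (Var 4)) | 1 => (Var 4) | 2 => (Var 4) | _ => Var v end) _ (fun v => match v with | 3 => 0 | 4 => 1 | _ => v end)); [reflexivity|reflexivity| |reflexivity|reflexivity].
  unfold gdf_dn_41. mgu_tac 3.
Qed.
Definition gdf_dn_113 := (Imp (Imp (Var 0) (Imp (Var 1) (Imp (Var 2) (Var 3)))) (Imp (Var 0) (Imp (Var 1) (Imp (Neg (Var 3)) (Neg (Var 2)))))).
Lemma gdn_113 : Der DNF gdf_dn_113.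
Proof.
  apply (Dcd DNF gdf_dn_27 gdf_dn_77 gdf_dn_113 (gdn_27) (gdn_77)); [|reflexivity].
  unfold gdf_dn_27. apply (cd_concrete _ _ _ 3 (fun v => match v with | 0 => (Imp (Var 3) (Imp (Var 4) (Var 5))) | 1 => (Imp (Var 3) (Imp (Neg (Var 5)) (Neg (Var 4)))) | _ => Var v end) _ (fun v => match v with | 2 => 0 | 3 => 1 | 4 => 2 | 5 => 3 | _ => v end)); [reflexivity|reflexivity| |reflexivity|reflexivity].
  unfold gdf_dn_77. mgu_tac 2.
Qed.
Definition gdf_dn_114 := (Imp (Imp (Var 0) (Imp (Var 1) (Imp (Var 2) (Imp (Var 3) (Var 4))))) (Imp (Var 0) (Imp (Var 1) (Imp (Var 2) (Imp (Neg (Var 4)) (Neg (Var 3))))))).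
Lemma gdn_114 : Der DNF gdf_dn_114.
Proof.
  apply (Dcd DNF gdf_dn_27 gdf_dn_113 gdf_dn_114 (gdn_27) (gdn_113)); [|reflexivity].
  unfold gdf_dn_27. apply (cd_concrete _ _ _ 3 (fun v => match v with | 0 => (Imp (Var 3) (Imp (Var 4) (Imp (Var 5) (Var 6)))) | 1 => (Imp (Var 3) (Imp (Var 4) (Imp (Neg (Var 6)) (Neg (Var 5))))) | _ => Var v end) _ (fun v => match v with | 2 => 0 | 3 => 1 | 4 => 2 | 5 => 3 | 6 => 4 | _ => v end)); [reflexivity|reflexivity| |reflexivity|reflexivity].
  unfold gdf_dn_113. mgu_tac 2.
Qed.
Definition gdf_dn_115 := (Imp (Imp (Var 0) (Var 0)) (Imp (Imp (Var 1) (Var 2)) (Imp (Var 0) (Imp (Imp (Var 0) (Var 1)) (Var 2))))).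
Lemma gdn_115 : Der DNF gdf_dn_115.
Proof.
  apply (Dcd DNF gdf_dn_39 gdf_dn_106 gdf_dn_115 (gdn_39) (gdn_106)); [|reflexivity].
  unfold gdf_dn_39. apply (cd_concrete _ _ _ 5 (fun v => match v with | 0 => (Imp (Var 5) (Var 5)) | 1 => (Var 5) | 2 => (Imp (Var 5) (Var 6)) | 3 => (Var 6) | _ => Var v end) _ (fun v => match v with | 4 => 2 | 5 => 0 | 6 => 1 | _ => v end)); [reflexivity|reflexivity| |reflexivity|reflexivity].
  unfold gdf_dn_106. mgu_tac 4.
Qed.
Definition gdf_dn_116 := (Imp (Imp (Var 0) (Var 0)) (Imp (Imp (Var 1) (Var 2)) (Imp (Imp (Var 3) (Var 1)) (Imp (Var 0) (Imp (Imp (Var 0) (Var 3)) (Var 2)))))).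
Lemma gdn_116 : Der DNF gdf_dn_116.
Proof.
  apply (Dcd DNF gdf_dn_37 gdf_dn_115 gdf_dn_116 (gdn_37) (gdn_115)); [|reflexivity].
  unfold gdf_dn_37. apply (cd_concrete _ _ _ 6 (fun v => match v with | 0 => (Imp (Var 6) (Var 6)) | 1 => (Imp (Var 7) (Var 8)) | 2 => (Var 6) | 3 => (Imp (Var 6) (Var 7)) | 4 => (Var 8) | _ => Var v end) _ (fun v => match v with | 5 => 2 | 6 => 0 | 7 => 3 | 8 => 1 | _ => v end)); [reflexivity|reflexivity| |reflexivity|reflexivity].
  unfold gdf_dn_115. mgu_tac 5.
Qed.
Definition gdf_dn_117 := (Imp (Imp (Var 0) (Var 0)) (Imp (Imp (Var 1) (Var 1)) (Imp (Var 0) (Imp (Imp (Var 0) (Var 1)) (Var 1))))).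
Lemma gdn_117 : Der DNF gdf_dn_117.
Proof.
  apply (Dcd DNF gdf_dn_31 gdf_dn_116 gdf_dn_117 (gdn_31) (gdn_116)); [|reflexivity].
  unfold gdf_dn_31. apply (cd_concrete _ _ _ 3 (fun v => match v with | 0 => (Imp (Var 3) (Var 3)) | 1 => (Imp (Var 5) (Var 5)) | 2 => (Imp (Var 3) (Imp (Imp (Var 3) (Var 5)) (Var 5))) | 4 => (Var 5) | 6 => (Var 5) | _ => Var v end) _ (fun v => match v with | 3 => 0 | 5 => 1 | _ => v end)); [reflexivity|reflexivity| |reflexivity|reflexivity].
  unfold gdf_dn_116. mgu_tac 7.
Qed.
Definition gdf_dn_118 := (Imp (Imp (Var 0) (Var 0)) (Imp (Imp (Var 1) (Var 1)) (Imp (Var 0) (Imp (Neg (Var 1)) (Neg (Imp (Var 0) (Var 1))))))).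
Lemma gdn_118 : Der DNF gdf_dn_118.
Proof.
  apply (Dcd DNF gdf_dn_114 gdf_dn_117 gdf_dn_118 (gdn_114) (gdn_117)); [|reflexivity].
  unfold gdf_dn_114. apply (cd_concrete _ _ _ 5 (fun v => match v with | 0 => (Imp (Var 5) (Var 5)) | 1 => (Imp (Var 6) (Var 6)) | 2 => (Var 5) | 3 => (Imp (Var 5) (Var 6)) | 4 => (Var 6) | _ => Var v end) _ (fun v => match v with | 5 => 0 | 6 => 1 | _ => v end)); [reflexivity|reflexivity| |reflexivity|reflexivity].
  unfold gdf_dn_117. mgu_tac 5.
Qed.
Definition gdf_dn_119 := (Imp (Imp (Var 0) (Imp (Var 1) (Var 2))) (Imp (Var 0) (Imp (Imp (Neg (Var 1)) (Var 2)) (Var 2)))).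
Lemma gdn_119 : Der DNF gdf_dn_119.
Proof.
  apply (Dcd DNF gdf_dn_27 gdf_dn_71 gdf_dn_119 (gdn_27) (gdn_71)); [|reflexivity].
  unfold gdf_dn_27. apply (cd_concrete _ _ _ 3 (fun v => match v with | 0 => (Imp (Var 3) (Var 4)) | 1 => (Imp (Imp (Neg (Var 3)) (Var 4)) (Var 4)) | _ => Var v end) _ (fun v => match v with | 2 => 0 | 3 => 1 | 4 => 2 | _ => v end)); [reflexivity|reflexivity| |reflexivity|reflexivity].
  unfold gdf_dn_71. mgu_tac 2.
Qed.
Definition gdf_dn_120 := (Imp (Imp (Var 0) (Imp (Var 1) (Imp (Var 2) (Var 3)))) (Imp (Var 0) (Imp (Var 1) (Imp (Imp (Neg (Var 2)) (Var 3)) (Var 3))))).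
Lemma gdn_120 : Der DNF gdf_dn_120.
Proof.
  apply (Dcd DNF gdf_dn_27 gdf_dn_119 gdf_dn_120 (gdn_27) (gdn_119)); [|reflexivity].
  unfold gdf_dn_27. apply (cd_concrete _ _ _ 3 (fun v => match v with | 0 => (Imp (Var 3) (Imp (Var 4) (Var 5))) | 1 => (Imp (Var 3) (Imp (Imp (Neg (Var 4)) (Var 5)) (Var 5))) | _ => Var v end) _ (fun v => match v with | 2 => 0 | 3 => 1 | 4 => 2 | 5 => 3 | _ => v end)); [reflexivity|reflexivity| |reflexivity|reflexivity].
  unfold gdf_dn_119. mgu_tac 2.
Qed.
Definition gdf_dn_121 := (Imp (Imp (Var 0) (Var 0)) (Imp (Imp (Var 0) (Var 1)) (Imp (Imp (Neg (Var 0)) (Var 1)) (Var 1)))).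
Lemma gdn_121 : Der DNF gdf_dn_121.
Proof.
  apply (Dcd DNF gdf_dn_120 gdf_dn_42 gdf_dn_121 (gdn_120) (gdn_42)); [|reflexivity].
  unfold gdf_dn_120. apply (cd_concrete _ _ _ 4 (fun v => match v with | 0 => (Imp (Var 4) (Var 4)) | 1 => (Imp (Var 4) (Var 5)) | 2 => (Var 4) | 3 => (Var 5) | _ => Var v end) _ (fun v => match v with | 4 => 0 | 5 => 1 | _ => v end)); [reflexivity|reflexivity| |reflexivity|reflexivity].
  unfold gdf_dn_42. mgu_tac 4.
Qed.
Definition gdf_dn_122 := (Imp (Imp (Var 0) (Var 0)) (Imp (Imp (Var 1) (Var 2)) (Imp (Imp (Var 0) (Var 1)) (Imp (Imp (Neg (Var 0)) (Var 1)) (Var 2))))).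
Lemma gdn_122 : Der DNF gdf_dn_122.
Proof.
  apply (Dcd DNF gdf_dn_39 gdf_dn_121 gdf_dn_122 (gdn_39) (gdn_121)); [|reflexivity].
  unfold gdf_dn_39. apply (cd_concrete _ _ _ 5 (fun v => match v with | 0 => (Imp (Var 5) (Var 5)) | 1 => (Imp (Var 5) (Var 6)) | 2 => (Imp (Neg (Var 5)) (Var 6)) | 3 => (Var 6) | _ => Var v end) _ (fun v => match v with | 4 => 2 | 5 => 0 | 6 => 1 | _ => v end)); [reflexivity|reflexivity| |reflexivity|reflexivity].
  unfold gdf_dn_121. mgu_tac 4.
Qed.
Definition gdf_dn_123 := (Imp (Imp (Var 0) (Var 0)) (Imp (Imp (Var 1) (Var 2)) (Imp (Imp (Var 3) (Var 1)) (Imp (Imp (Var 0) (Var 3)) (Imp (Imp (Neg (Var 0)) (Var 3)) (Var 2)))))).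
Lemma gdn_123 : Der DNF gdf_dn_123.
Proof.
  apply (Dcd DNF gdf_dn_37 gdf_dn_122 gdf_dn_123 (gdn_37) (gdn_122)); [|reflexivity].
  unfold gdf_dn_37. apply (cd_concrete _ _ _ 6 (fun v => match v with | 0 => (Imp (Var 6) (Var 6)) | 1 => (Imp (Var 7) (Var 8)) | 2 => (Imp (Var 6) (Var 7)) | 3 => (Imp (Neg (Var 6)) (Var 7)) | 4 => (Var 8) | _ => Var v end) _ (fun v => match v with | 5 => 2 | 6 => 0 | 7 => 3 | 8 => 1 | _ => v end)); [reflexivity|reflexivity| |reflexivity|reflexivity].
  unfold gdf_dn_122. mgu_tac 5.
Qed.
Definition gdf_dn_124 := (Imp (Imp (Var 0) (Var 0)) (Imp (Imp (Var 1) (Var 1)) (Imp (Imp (Var 0) (Var 1)) (Imp (Imp (Neg (Var 0)) (Var 1)) (Var 1))))).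
Lemma gdn_124 : Der DNF gdf_dn_124.
Proof.
  apply (Dcd DNF gdf_dn_31 gdf_dn_123 gdf_dn_124 (gdn_31) (gdn_123)); [|reflexivity].
  unfold gdf_dn_31. apply (cd_concrete _ _ _ 3 (fun v => match v with | 0 => (Imp (Var 3) (Var 3)) | 1 => (Imp (Var 5) (Var 5)) | 2 => (Imp (Imp (Var 3) (Var 5)) (Imp (Imp (Neg (Var 3)) (Var 5)) (Var 5))) | 4 => (Var 5) | 6 => (Var 5) | _ => Var v end) _ (fun v => match v with | 3 => 0 | 5 => 1 | _ => v end)); [reflexivity|reflexivity| |reflexivity|reflexivity].
  unfold gdf_dn_123. mgu_tac 7.
Qed.
Lemma Lem_Id0 : Der DNF (Imp (Var 0) (Var 0)).
Proof. exact gdn_1. Qed.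
Lemma Lem_Comb : Der DNF (Imp (Imp (Var 0) (Var 0)) (Imp (Imp (Var 1) (Var 1)) (Imp (Imp (Var 0) (Var 1)) (Imp (Var 0) (Var 1))))).
Proof. exact gdn_45. Qed.
Lemma Lem_G3 : Der DNF (Imp (Imp (Var 0) (Var 0)) (Imp (Imp (Var 0) (Var 0)) (Imp (Var 0) (Var 0)))).
Proof. exact gdn_48. Qed.
Lemma Lem_Kp : Der DNF (Imp (Var 0) (Imp (Imp (Var 1) (Var 1)) (Imp (Imp (Var 1) (Var 1)) (Var 0)))).
Proof. exact gdn_52. Qed.
Lemma Lem_S : Der DNF (Imp (Imp (Var 0) (Imp (Var 1) (Var 2))) (Imp (Imp (Var 0) (Var 1)) (Imp (Var 0) (Var 2)))).
Proof. exact gdn_56. Qed.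
Lemma Lem_Projl : Der DNF (Imp (Imp (Imp (Var 0) (Var 1)) (Imp (Var 0) (Var 1))) (Imp (Var 0) (Var 0))).
Proof. exact gdn_61. Qed.
Lemma Lem_Projr : Der DNF (Imp (Imp (Imp (Var 0) (Var 1)) (Imp (Var 0) (Var 1))) (Imp (Var 1) (Var 1))).
Proof. exact gdn_65. Qed.
Lemma Lem_NegId : Der DNF (Imp (Imp (Var 0) (Var 0)) (Imp (Neg (Var 0)) (Neg (Var 0)))).
Proof. exact gdn_78. Qed.
Lemma Lem_K1 : Der DNF (Imp (Var 0) (Imp (Imp (Var 1) (Var 1)) (Imp (Var 1) (Var 0)))).
Proof. exact gdn_79. Qed.
Lemma Lem_S2 : Der DNF (Imp (Imp (Var 0) (Imp (Var 1) (Imp (Var 2) (Var 3)))) (Imp (Var 0) (Imp (Imp (Var 1) (Var 2)) (Imp (Var 1) (Var 3))))).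
Proof. exact gdn_80. Qed.
Lemma Lem_K2 : Der DNF (Imp (Imp (Var 0) (Var 0)) (Imp (Imp (Var 1) (Var 1)) (Imp (Var 0) (Imp (Var 1) (Var 0))))).
Proof. exact gdn_89. Qed.
Lemma Lem_L3id : Der DNF (Imp (Imp (Var 0) (Var 0)) (Imp (Imp (Var 1) (Var 1)) (Imp (Var 0) (Imp (Neg (Var 0)) (Var 1))))).
Proof. exact gdn_94. Qed.
Lemma Lem_Kc : Der DNF (Imp (Imp (Var 0) (Var 0)) (Imp (Imp (Var 1) (Var 1)) (Imp (Neg (Var 0)) (Imp (Var 0) (Var 1))))).
Proof. exact gdn_98. Qed.
Lemma Lem_Kd : Der DNF (Imp (Imp (Var 0) (Var 0)) (Imp (Imp (Var 1) (Var 1)) (Imp (Var 0) (Imp (Var 1) (Neg (Imp (Var 0) (Neg (Var 1)))))))).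
Proof. exact gdn_112. Qed.
Lemma Lem_Ke : Der DNF (Imp (Imp (Var 0) (Var 0)) (Imp (Imp (Var 1) (Var 1)) (Imp (Var 0) (Imp (Neg (Var 1)) (Neg (Imp (Var 0) (Var 1))))))).
Proof. exact gdn_118. Qed.
Lemma Lem_DNl : Der DNF (Imp (Imp (Var 0) (Neg (Var 1))) (Imp (Var 1) (Neg (Var 0)))).
Proof. exact gdn_101. Qed.
Lemma Lem_Elim : Der DNF (Imp (Imp (Var 0) (Var 0)) (Imp (Imp (Var 1) (Var 1)) (Imp (Imp (Var 0) (Var 1)) (Imp (Imp (Neg (Var 0)) (Var 1)) (Var 1))))).
Proof. exact gdn_124. Qed.

Lemma sub_refl : forall f, sub f f.
Proof. destruct f; simpl; auto. Qed.

Lemma sub_trans : forall a b c, sub a b -> sub b c -> sub a c.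
Proof.
  intros a b c H1 H2. induction c; simpl in H2.
  - destruct H2 as [->|[]]; auto.
  - destruct H2 as [->|[H2|H2]]; auto; simpl; right; [left|right]; auto.
  - destruct H2 as [->|H2]; auto; simpl; right; auto.
Qed.

Lemma sub_imp_l : forall a b c, sub (Imp a b) c -> sub a c.
Proof. intros. eapply sub_trans; [|eauto]. simpl. right. left. apply sub_refl. Qed.
Lemma sub_imp_r : forall a b c, sub (Imp a b) c -> sub b c.
Proof. intros. eapply sub_trans; [|eauto]. simpl. right. right. apply sub_refl. Qed.
Lemma sub_neg : forall a c, sub (Neg a) c -> sub a c.
Proof. intros. eapply sub_trans; [|eauto]. simpl. right. apply sub_refl. Qed.

Lemma sub_occurs : forall v a c, sub a c -> occurs v a -> occurs v c.
Proof.
  intros v a c H1 H2. induction c; simpl in H1.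
  - destruct H1 as [->|[]]; auto.
  - destruct H1 as [->|[H1|H1]]; auto; simpl; auto.
  - destruct H1 as [->|H1]; auto; simpl; auto.
Qed.

Definition good (T f : form) : Prop := forall q, sub (Neg (Neg q)) f -> sub (Neg (Neg q)) T.

Lemma good_sub : forall T f, sub f T -> good T f.
Proof. intros T f H q Hq. eapply sub_trans; eauto. Qed.

Lemma good_dnf : forall T f, DNF f -> good T f.
Proof. intros T f H q Hq. exfalso. eapply dnfree_sub; eauto. Qed.

Lemma good_var : forall T v, good T (Var v).
Proof. intros T v q Hq; simpl in Hq; destruct Hq as [H|[]]. discriminate. Qed.

Lemma good_imp : forall T a b, good T (Imp a b) <-> good T a /\ good T b.
Proof.
  intros T a b. split.
  - intros H. split; intros q Hq; apply H; simpl; right; auto.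
  - intros [Ha Hb] q Hq; simpl in Hq; destruct Hq as [E|[Hq|Hq]]; [discriminate|auto|auto].
Qed.

Lemma good_neg_inv : forall T a, good T (Neg a) -> good T a.
Proof. intros T a H q Hq. apply H. simpl. right. auto. Qed.

Lemma good_neg : forall T a, good T a -> (forall q, a <> Neg q) -> good T (Neg a).
Proof.
  intros T a H Hn q Hq; simpl in Hq. destruct Hq as [E|Hq].
  - inversion E; subst. exfalso. eapply Hn; eauto.
  - auto.
Qed.

Lemma good_negneg : forall T q, sub (Neg (Neg q)) T -> good T q -> good T (Neg (Neg q)).
Proof.
  intros T q H1 H2 r Hr; simpl in Hr. destruct Hr as [E|[E|Hr]].
  - inversion E; subst; auto.
  - inversion E; subst. eapply sub_neg; eauto.
  - auto.
Qed.

Lemma dnfree_rename : forall r f, dnfree (rename r f) = dnfree f.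
Proof.
  induction f; simpl; auto.
  - rewrite IHf1, IHf2. auto.
  - destruct f; simpl in *; auto.
Qed.

Lemma good_partial : forall T R (th th' : nat -> form),
  dnfree R = true ->
  (forall v, occurs v R -> th' v = th v \/ exists w, th' v = Var w) ->
  good T (subst th R) -> good T (subst th' R).
Proof.
  intros T R th th'. induction R; simpl; intros Hd Hv Hg.
  - destruct (Hv n eq_refl) as [->|[w ->]]; auto. apply good_var.
  - apply andb_true_iff in Hd. destruct Hd. apply good_imp in Hg. apply good_imp.
    destruct Hg as [Hg1 Hg2].
    split; [apply IHR1|apply IHR2]; auto; intros v Hv'; apply Hv; auto.
  - assert (Hd' : dnfree R = true) by (destruct R; auto; discriminate).
    intros q Hq. destruct Hq as [E|Hq].
    + inversion E. destruct R; simpl in *; try discriminate.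
      destruct (Hv n eq_refl) as [E2|[w E2]].
      * apply Hg. rewrite <- E2. rewrite <- H0. simpl. left. auto.
      * rewrite E2 in H0. discriminate.
    + eapply IHR; eauto. apply good_neg_inv; auto.
Qed.

Definition atl (T : form) := nodup Nat.eq_dec (vars T).
Fixpoint tup (l : list nat) : form :=
  match l with
  | [] => Var 0
  | [v] => Var v
  | v :: l' => Imp (Var v) (tup l')
  end.
Definition Id (f : form) := Imp f f.
Definition PT (T : form) := Id (tup (atl T)).
Definition Th (T X : form) := Der (good T) (Imp (PT T) X).
Definition low (T f : form) := forall v, occurs v f -> occurs v T.
Definition N0 (T : form) := S (maxvar T).
Definition sh (T f : form) := rename (fun v => v + N0 T) f.
Definition sg1 (a : nat) (F : form) : nat -> form := fun w => if Nat.eqb w a then F else Var w.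

Lemma vars_nonempty : forall f, vars f <> [].
Proof. induction f; simpl; try discriminate; auto. destruct (vars f1); simpl; try discriminate. congruence. Qed.

Lemma atl_nonempty : forall T, atl T <> [].
Proof.
  intros T E. unfold atl in E. pose proof (vars_nonempty T).
  destruct (vars T) as [|v l] eqn:Ev; [congruence|].
  assert (In v (nodup Nat.eq_dec (v :: l))) by (apply nodup_In; simpl; auto).
  rewrite E in H0. destruct H0.
Qed.

Lemma occurs_tup : forall l v, l <> [] -> (occurs v (tup l) <-> In v l).
Proof.
  induction l as [|a l IH]; intros v Hl; [congruence|].
  destruct l as [|b l'].
  - simpl. split; [intros ->; auto|intros [->|[]]; auto].
  - change (tup (a :: b :: l')) with (Imp (Var a) (tup (b :: l'))).
    simpl occurs. rewrite IH by discriminate. simpl. split; intros [H|H]; auto.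
Qed.

Lemma occurs_PT : forall T v, occurs v (PT T) <-> occurs v T.
Proof.
  intros T v. unfold PT, Id. simpl. rewrite occurs_tup by apply atl_nonempty.
  unfold atl. rewrite nodup_In, <- occurs_vars. tauto.
Qed.

Lemma dnfree_tup : forall l, dnfree (tup l) = true.
Proof. induction l as [|a l IH]; simpl; auto. destruct l; simpl in *; auto. Qed.

Lemma good_PT : forall T, good T (PT T).
Proof. intros. apply good_dnf. unfold DNF, PT, Id. simpl. rewrite dnfree_tup. reflexivity. Qed.

Lemma low_lt : forall T f v, low T f -> occurs v f -> v < N0 T.
Proof. intros T f v H1 H2. apply H1, occurs_maxvar in H2. unfold N0. lia. Qed.

Lemma occurs_sh : forall T f v, occurs v (sh T f) -> N0 T <= v.
Proof. intros. unfold sh in H. apply occurs_rename in H. destruct H as [w [_ ->]]. lia. Qed.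

Definition thsh (T : form) (th : nat -> form) : nat -> form :=
  fun v => if Nat.leb (N0 T) v then th (v - N0 T) else Var v.

Lemma subst_sh : forall T th f, subst (thsh T th) (sh T f) = subst th f.
Proof.
  intros. unfold sh. rewrite rename_subst, subst_subst. apply subst_ext. intros v _.
  simpl. unfold thsh. replace (Nat.leb (N0 T) (v + N0 T)) with true by (symmetry; apply Nat.leb_le; lia).
  f_equal. lia.
Qed.

Lemma subst_low : forall T th f, low T f -> (forall v, v < N0 T -> th v = Var v) -> subst th f = f.
Proof.
  intros. rewrite <- (subst_var f) at 2. apply subst_ext. intros v Hv. apply H0. eapply low_lt; eauto.
Qed.

Lemma dnfree_subst_var : forall s F, (forall v, exists w, s v = Var w) -> dnfree (subst s F) = dnfree F.
Proof.
  intros s F H. induction F; simpl; auto.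
  - destruct (H n) as [w ->]. reflexivity.
  - rewrite IHF1, IHF2. auto.
  - destruct F; simpl in *; auto. destruct (H n) as [w ->]. reflexivity.
Qed.

Lemma sg1_eq : forall a F, sg1 a F a = F.
Proof. intros. unfold sg1. rewrite Nat.eqb_refl. auto. Qed.
Lemma sg1_neq : forall a F v, v <> a -> sg1 a F v = Var v.
Proof. intros. unfold sg1. apply Nat.eqb_neq in H. rewrite H. auto. Qed.

Lemma sg1_var : forall a b, forall v, exists w, sg1 a (Var b) v = Var w.
Proof. intros. unfold sg1. destruct (Nat.eqb v a); eauto. Qed.

Lemma Der_gen : forall T L r, Der DNF L -> (forall u w, occurs u L -> occurs w L -> r u = r w -> u = w) ->
  Der (good T) (rename r L).
Proof.
  intros T L r H Hi. apply (Der_mono DNF). 2:{ intros; apply good_dnf; auto. }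
  eapply Der_variant; eauto. apply variant_inj_on; auto.
  inversion H; subst.
  - destruct H0 as [E|[E|[E|[]]]]; subst; destruct H1 as [r' [_ E]]; subst; unfold DNF; rewrite dnfree_rename; reflexivity.
  - unfold DNF in *. rewrite dnfree_rename. auto.
Qed.

Lemma DNF_of_Der : forall L, Der DNF L -> DNF L.
Proof.
  intros L H. inversion H; subst; auto.
  destruct H0 as [E|[E|[E|[]]]]; subst; destruct H1 as [r' [_ E]]; subst; unfold DNF; rewrite dnfree_rename; reflexivity.
Qed.

Lemma Der_sh : forall T L, Der DNF L -> Der (good T) (sh T L).
Proof. intros. apply Der_gen; auto. intros; lia. Qed.

Lemma GMP : forall T A B A' th,
  Th T (Imp A B) -> Th T A' -> subst th A = A' ->
  (forall v, occurs v (PT T) -> th v = Var v) ->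
  (forall v, occurs v B -> ~ occurs v A -> ~ occurs v (PT T) -> ~ occurs v A' /\ th v = Var v) ->
  good T A -> good T B -> good T (subst th B) -> Th T (subst th B).
Proof.
  intros T A B A' th H1 H2 H3 H4 H5 gA gB gR.
  assert (S1 : Der (good T) (Imp (Imp (PT T) A) (Imp (PT T) B))).
  { pose proof (Der_mono _ (good T) _ Lem_S (fun x h => good_dnf T x h)) as LS.
    set (sg := fun w => match w with 0 => PT T | 1 => A | 2 => B | _ => Var w end).
    change (Imp (Imp (PT T) A) (Imp (PT T) B)) with (subst sg (Imp (Imp (Var 0) (Var 1)) (Imp (Var 0) (Var 2)))).
    eapply Der_match1; [exact LS|exact H1|reflexivity| |].
    - intros v Hv Hn. exfalso. apply Hn. simpl in Hv |- *. tauto.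
    - simpl. apply good_imp; split; apply good_imp; split; auto; apply good_PT. }
  assert (EP : subst th (PT T) = PT T).
  { rewrite <- (subst_var (PT T)) at 2. apply subst_ext. auto. }
  change (Th T (subst th B)) with (Der (good T) (Imp (PT T) (subst th B))).
  rewrite <- EP. change (Imp (subst th (PT T)) (subst th B)) with (subst th (Imp (PT T) B)).
  eapply Der_match1; [exact S1|exact H2| | |].
  - transitivity (Imp (subst th (PT T)) (subst th A)); [reflexivity|rewrite EP, H3; reflexivity].
  - intros v Hv Hn. simpl in Hv, Hn.
    assert (~ occurs v (PT T)) by tauto. assert (occurs v B) by tauto. assert (~ occurs v A) by tauto.
    destruct (H5 v) as [Ha Hb]; auto. split; auto. simpl. tauto.
  - change (good T (Imp (subst th (PT T)) (subst th B))). rewrite EP. apply good_imp; split; auto; apply good_PT.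
Qed.

Lemma MP : forall T A B, Th T (Imp A B) -> Th T A -> good T A -> good T B -> Th T B.
Proof.
  intros T A B H1 H2 gA gB. rewrite <- (subst_var B). apply (GMP T A B A Var); auto.
  all: try apply subst_var.
  all: try (rewrite subst_var; auto).
Qed.

Lemma Der_PT : forall T, Der (good T) (PT T).
Proof.
  intros T. unfold PT, atl.
  assert (forall l, l <> [] -> NoDup l -> Der (good T) (Id (tup l))).
  { induction l as [|a l IH]; intros Hl Hnd; [congruence|].
    destruct l as [|b l'].
    - change (Id (tup [a])) with (rename (fun _ => a) (Imp (Var 0) (Var 0))).
      apply Der_gen; [exact Lem_Id0|]. intros u w Hu Hw _. simpl in Hu, Hw. lia.
    - inversion Hnd; subst. specialize (IH ltac:(discriminate) H2).
      set (M := S (Nat.max a (maxvar (tup (b :: l'))))).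
      set (Comb := Imp (Imp (Var 0) (Var 0)) (Imp (Imp (Var 1) (Var 1)) (Imp (Imp (Var 0) (Var 1)) (Imp (Var 0) (Var 1))))).
      assert (C1 : Der (good T) (rename (fun v => v + M) Comb)) by (apply Der_gen; [exact Lem_Comb|intros; lia]).
      simpl in C1.
      assert (C2 : Der (good T) (subst (sg1 M (Var a)) (Imp (Imp (Var (S M)) (Var (S M))) (Imp (Imp (Var M) (Var (S M))) (Imp (Var M) (Var (S M))))))).
      { eapply (Der_match1 _ _ _ (Imp (Var a) (Var a))); [exact C1| |unfold sg1; simpl; rewrite Nat.eqb_refl; reflexivity| |].
        - change (Der (good T) (rename (fun _ => a) (Imp (Var 0) (Var 0)))).
          apply Der_gen; [exact Lem_Id0|]. intros u w Hu Hw _. simpl in Hu, Hw. lia.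
        - intros v Hv Hn. simpl in Hv, Hn. unfold sg1.
          assert (v = S M) by tauto. subst v. split; [simpl; unfold M; lia|].
          replace (Nat.eqb (S M) M) with false by (symmetry; apply Nat.eqb_neq; lia). reflexivity.
        - apply good_dnf. unfold DNF. rewrite dnfree_subst_var; [reflexivity|apply sg1_var]. }
      cbn [subst] in C2. rewrite !sg1_eq in C2. rewrite !sg1_neq in C2 by lia.
      assert (E : subst (sg1 (S M) (tup (b :: l'))) (Imp (Imp (Var a) (Var (S M))) (Imp (Var a) (Var (S M)))) = Id (tup (a :: b :: l'))).
      { cbn [subst]. rewrite !sg1_eq. rewrite !sg1_neq by (unfold M; lia). reflexivity. }
      rewrite <- E.
      eapply Der_match1; [exact C2|exact IH| | |].
      + cbn [subst]. rewrite !sg1_eq. reflexivity.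
      + intros v Hv Hn. simpl in Hv, Hn.
        assert (v = a) by (destruct (Nat.eq_dec v (S M)); [subst; tauto|tauto]). subst v. split.
        * intros Ho. unfold Id in Ho. simpl in Ho. assert (Ho' : occurs a (tup (b :: l'))) by tauto.
          apply occurs_tup in Ho'; [|discriminate]. contradiction.
        * apply sg1_neq. unfold M; lia.
      + rewrite E. apply good_dnf. unfold DNF, Id. change (dnfree (tup (a :: b :: l')) && dnfree (tup (a :: b :: l')) = true). rewrite dnfree_tup. reflexivity. }
  apply H; [apply atl_nonempty|apply NoDup_nodup].
Qed.

Lemma subst_notin : forall s F, (forall v, occurs v F -> s v = Var v) -> subst s F = F.
Proof. intros. rewrite <- (subst_var F) at 2. apply subst_ext. auto. Qed.

Lemma Der_gen_DNF : forall L r, Der DNF L -> (forall u w, occurs u L -> occurs w L -> r u = r w -> u = w) ->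
  Der DNF (rename r L).
Proof.
  intros L r H Hi. eapply Der_variant; eauto. apply variant_inj_on; auto.
  unfold DNF. rewrite dnfree_rename. apply DNF_of_Der. auto.
Qed.

Lemma occurs_sh_iff : forall T F v, occurs v (sh T F) <-> N0 T <= v /\ occurs (v - N0 T) F.
Proof.
  intros T F v. split.
  - intros H. unfold sh in H. apply occurs_rename in H. destruct H as [w [Hw ->]].
    split; [lia|]. replace (w + N0 T - N0 T) with w by lia. auto.
  - intros [H1 H2]. unfold sh. rewrite rename_subst. apply (occurs_subst_intro _ v (v - N0 T)); [exact H2|simpl; lia].
Qed.

Lemma PT_lt : forall T v, occurs v (PT T) -> v < N0 T.
Proof. intros. apply (proj1 (occurs_PT T v)) in H. apply occurs_maxvar in H. unfold N0. lia. Qed.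

Lemma thsh_low : forall T th v, v < N0 T -> thsh T th v = Var v.
Proof. intros. unfold thsh. replace (Nat.leb (N0 T) v) with false by (symmetry; apply Nat.leb_gt; lia). auto. Qed.

Lemma thsh_high : forall T th v, N0 T <= v -> thsh T th v = th (v - N0 T).
Proof. intros. unfold thsh. replace (Nat.leb (N0 T) v) with true by (symmetry; apply Nat.leb_le; lia). auto. Qed.

Lemma good_DNF_sh : forall T F, DNF F -> good T (sh T F).
Proof. intros. apply good_dnf. unfold DNF, sh in *. rewrite dnfree_rename. auto. Qed.

Lemma Th_PT : forall T, Th T (PT T).
Proof.
  intros T. unfold Th.
  assert (E : subst (sg1 0 (tup (atl T))) (Imp (Imp (Var 0) (Var 0)) (Imp (Var 0) (Var 0))) = Imp (PT T) (PT T)) by reflexivity.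
  rewrite <- E. eapply Der_match1.
  - exact (Der_mono _ _ _ Lem_G3 (fun x h => good_dnf T x h)).
  - apply Der_PT.
  - reflexivity.
  - intros v Hv Hn. exfalso. apply Hn. simpl in *. tauto.
  - rewrite E. apply good_imp; split; apply good_PT.
Qed.

Lemma Th_gen : forall T Z, Der DNF Z -> (forall v, occurs v Z -> N0 T <= v) -> Th T Z.
Proof.
  intros T Z HZ HZv.
  set (M := S (maxvar Z)).
  assert (HM : forall v, occurs v Z -> v <> M) by (intros v Hv; apply occurs_maxvar in Hv; unfold M; lia).
  assert (K1 : Der (good T) (Imp (Var 0) (Imp (Imp (Var M) (Var M)) (Imp (Imp (Var M) (Var M)) (Var 0))))).
  { change (Imp (Var 0) (Imp (Imp (Var M) (Var M)) (Imp (Imp (Var M) (Var M)) (Var 0))))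
      with (rename (fun w => if Nat.eqb w 1 then M else w) (Imp (Var 0) (Imp (Imp (Var 1) (Var 1)) (Imp (Imp (Var 1) (Var 1)) (Var 0))))).
    apply Der_gen; [exact Lem_Kp|]. intros u w Hu Hw E. simpl in Hu, Hw.
    destruct Hu as [ -> | [ [ -> | -> ] | [ [ -> | -> ] | -> ] ] ]; destruct Hw as [ -> | [ [ -> | -> ] | [ [ -> | -> ] | -> ] ] ]; simpl in E; unfold M in E; lia. }
  assert (gZ : good T Z) by (apply good_dnf; apply DNF_of_Der; auto).
  assert (K2 : Der (good T) (Imp (Imp (Var M) (Var M)) (Imp (Imp (Var M) (Var M)) Z))).
  { assert (E : subst (sg1 0 Z) (Imp (Imp (Var M) (Var M)) (Imp (Imp (Var M) (Var M)) (Var 0))) = Imp (Imp (Var M) (Var M)) (Imp (Imp (Var M) (Var M)) Z)).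
    { cbn [subst]. rewrite sg1_eq, sg1_neq by (unfold M; lia). reflexivity. }
    rewrite <- E. eapply Der_match1; [exact K1|exact (Der_mono _ _ _ HZ (fun x h => good_dnf T x h))|apply sg1_eq| |].
    - intros v Hv Hn. simpl in Hv, Hn. assert (v = M) by tauto. subst v. split.
      + intros Ho. apply (HM M Ho). auto.
      + apply sg1_neq. unfold M; lia.
    - rewrite E. apply good_imp; split; [apply good_dnf; reflexivity|].
      apply good_imp; split; [apply good_dnf; reflexivity|auto]. }
  unfold Th.
  assert (E : subst (sg1 M (tup (atl T))) (Imp (Imp (Var M) (Var M)) Z) = Imp (PT T) Z).
  { cbn [subst]. rewrite sg1_eq. f_equal. apply subst_notin. intros v Hv. apply sg1_neq. auto. }
  rewrite <- E. eapply Der_match1; [exact K2|apply Der_PT|cbn [subst]; rewrite sg1_eq; reflexivity| |].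
  - intros v Hv Hn. assert (HvZ : occurs v Z) by (simpl in Hv, Hn; tauto). split.
    + intros Ho. apply PT_lt in Ho. apply HZv in HvZ. lia.
    + apply sg1_neq. auto.
  - rewrite E. apply good_imp; split; auto. apply good_PT.
Qed.

Lemma APP1 : forall T X R th, Der DNF (Imp X R) -> (forall v, occurs v R -> occurs v X) ->
  Th T (subst th X) -> good T (subst th R) -> Th T (subst th R).
Proof.
  intros T X R th HL Hc H1 gR.
  assert (L : Th T (Imp (sh T X) (sh T R))).
  { apply Th_gen. - change (Der DNF (rename (fun v => v + N0 T) (Imp X R))). apply (Der_gen_DNF _ (fun v => v + N0 T)); auto. intros; lia.
    - intros v Hv. change (occurs v (sh T (Imp X R))) in Hv. apply occurs_sh_iff in Hv. tauto. }
  assert (D := DNF_of_Der _ HL). unfold DNF in D. simpl in D. apply andb_true_iff in D.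
  rewrite <- (subst_sh T th R). eapply GMP; [exact L|exact H1| | | | | |].
  - apply subst_sh.
  - intros v Hv. apply thsh_low. apply PT_lt; auto.
  - intros v Hv Hn. exfalso. apply Hn. apply occurs_sh_iff in Hv. apply occurs_sh_iff. destruct Hv; auto.
  - apply good_DNF_sh. tauto.
  - apply good_DNF_sh. tauto.
  - rewrite subst_sh. auto.
Qed.

Definition restrict (s : nat -> form) (X : form) : nat -> form :=
  fun v => if occurs_dec v X then s v else Var v.

Lemma restrict_comp : forall s X F, (forall v, occurs v X -> subst s (s v) = s v) ->
  subst s (subst (restrict s X) F) = subst s F.
Proof.
  intros. rewrite subst_subst. apply subst_ext. intros v _. unfold restrict.
  destruct (occurs_dec v X); auto.
Qed.

Lemma APP2 : forall T X1 X2 R th, Der DNF (Imp X1 (Imp X2 R)) ->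
  (forall v, occurs v (Imp X1 (Imp X2 R)) -> occurs v X1 \/ occurs v X2) ->
  (forall v, occurs v (Imp X1 (Imp X2 R)) -> low T (th v)) ->
  Th T (subst th X1) -> Th T (subst th X2) -> good T (subst th X2) -> good T (subst th R) ->
  Th T (subst th R).
Proof.
  intros T X1 X2 R th HL Hc Hlow H1 H2 g2 gR.
  set (L := Imp X1 (Imp X2 R)).
  set (th' := thsh T th).
  set (th1 := restrict th' (sh T X1)).
  assert (LTh : Th T (Imp (sh T X1) (Imp (sh T X2) (sh T R)))).
  { apply Th_gen. - change (Der DNF (rename (fun v => v + N0 T) L)). apply (Der_gen_DNF _ (fun v => v + N0 T)); auto. intros; lia.
    - intros v Hv. change (occurs v (sh T L)) in Hv. apply occurs_sh_iff in Hv. tauto. }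
  assert (D := DNF_of_Der _ HL). unfold DNF in D. simpl in D. apply andb_true_iff in D.
  destruct D as [D1 D23]. apply andb_true_iff in D23. destruct D23 as [D2 D3].
  assert (Hfix : forall v, occurs v (sh T L) -> subst th' (th' v) = th' v).
  { intros v Hv. apply occurs_sh_iff in Hv. destruct Hv as [Hv1 Hv2].
    unfold th'. rewrite thsh_high by auto. apply (subst_low T); [apply Hlow; auto|].
    intros w Hw. apply thsh_low. auto. }
  assert (Hth1 : forall v, th1 v = th' v \/ exists w, th1 v = Var w).
  { intros v. unfold th1, restrict. destruct (occurs_dec v (sh T X1)); eauto. }
  assert (HshL : forall F v, (forall w, occurs w F -> occurs w L) -> occurs v (sh T F) -> occurs v (sh T L)).
  { intros F v HF Hv. apply occurs_sh_iff in Hv. apply occurs_sh_iff. destruct Hv; split; auto. }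
  assert (E1 : subst th1 (sh T X1) = subst th X1).
  { rewrite <- (subst_sh T th X1). apply subst_ext. intros v Hv. unfold th1, restrict.
    destruct (occurs_dec v (sh T X1)); [auto|contradiction]. }
  assert (S1 : Th T (subst th1 (Imp (sh T X2) (sh T R)))).
  { eapply GMP; [exact LTh|exact H1|exact E1| | | | |].
    - intros v Hv. unfold th1, restrict. destruct (occurs_dec v (sh T X1)); auto.
      unfold th'. apply thsh_low. apply PT_lt; auto.
    - intros v Hv Hn _. split.
      + intros Ho. apply occurs_subst in Ho. destruct Ho as [w [Hw Ho]].
        assert (Hl : low T (th w)) by (apply Hlow; simpl; auto).
        apply Hl in Ho. apply occurs_maxvar in Ho.
        assert (N0 T <= v) by (simpl in Hv; destruct Hv as [Hv|Hv]; apply occurs_sh in Hv; auto).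
        unfold N0 in H. lia.
      + unfold th1, restrict. destruct (occurs_dec v (sh T X1)); [contradiction|auto].
    - apply good_DNF_sh. auto.
    - apply good_imp. split; apply good_DNF_sh; auto.
    - apply (good_partial T (Imp (sh T X2) (sh T R)) th' th1).
      + simpl. unfold sh. rewrite !dnfree_rename, D2, D3. reflexivity.
      + intros v _. apply Hth1.
      + simpl. unfold th'. rewrite !subst_sh. apply good_imp. auto. }
  simpl in S1.
  assert (E2 : forall F, (forall w, occurs w F -> occurs w L) -> subst th' (subst th1 (sh T F)) = subst th F).
  { intros F HF. unfold th1. rewrite restrict_comp.
    - unfold th'. apply subst_sh.
    - intros v Hv. apply Hfix. eapply HshL; [|exact Hv]. intros w Hw. simpl. auto. }
  rewrite <- (E2 R) by (intros w Hw; simpl; auto).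
  eapply GMP; [exact S1|exact H2| | | | | |].
  - apply E2. intros w Hw; simpl; auto.
  - intros v Hv. unfold th'. apply thsh_low. apply PT_lt; auto.
  - intros v Hv HnA HnP. exfalso.
    apply occurs_subst in Hv. destruct Hv as [w [Hw Hv]].
    unfold th1, restrict in Hv. destruct (occurs_dec w (sh T X1)) as [HwX|HwX].
    + apply HnP. apply occurs_PT.
      assert (Hw' : occurs w (sh T L)) by (eapply HshL; [|exact Hw]; intros; simpl; auto).
      apply occurs_sh_iff in Hw'. destruct Hw' as [Hw1 Hw2].
      unfold th' in Hv. rewrite thsh_high in Hv by auto. apply (Hlow _ Hw2). auto.
    + simpl in Hv. subst w. apply HnA.
      apply occurs_sh_iff in Hw. destruct Hw as [Hw1 Hw2].
      destruct (Hc (v - N0 T)) as [Hx|Hx]; [simpl; auto| |].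
      * exfalso. apply HwX. apply occurs_sh_iff. auto.
      * eapply occurs_subst_intro; [apply occurs_sh_iff; split; eauto|].
        unfold th1, restrict. destruct (occurs_dec v (sh T X1)); [contradiction|simpl; auto].
  - apply (good_partial T (sh T X2) th' th1).
    + unfold sh. rewrite dnfree_rename. auto.
    + intros v _. apply Hth1.
    + unfold th'. rewrite subst_sh. auto.
  - apply (good_partial T (sh T R) th' th1).
    + unfold sh. rewrite dnfree_rename. auto.
    + intros v _. apply Hth1.
    + unfold th'. rewrite subst_sh. auto.
  - rewrite E2 by (intros w Hw; simpl; auto). auto.
Qed.

Definition sgl (l : list form) : nat -> form := fun v => nth v l (Var v).

Lemma low_imp : forall T a b, low T (Imp a b) <-> low T a /\ low T b.
Proof. unfold low; simpl; split; [intros H; split; intros; apply H; auto|intros [H1 H2] v [Hv|Hv]; auto]. Qed.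
Lemma low_neg : forall T a, low T (Neg a) <-> low T a.
Proof. unfold low; simpl; tauto. Qed.
Lemma low_sub : forall T a, sub a T -> low T a.
Proof. unfold low; intros; eapply sub_occurs; eauto. Qed.

Ltac vcases := let v := fresh "v" in let H := fresh "Hv" in intros v H; simpl in H;
  repeat match goal with
         | [ H0 : _ \/ _ |- _ ] => destruct H0
         | [ H0 : False |- _ ] => destruct H0
         | [ H0 : ?v0 = _ |- _ ] => subst v0
         end.

Lemma IdAll : forall T F, low T F -> good T F -> Th T (Id F).
Proof.
  intros T F. induction F as [v|F1 IH1 F2 IH2|F IH]; intros Hl Hg.
  - assert (Hv : In v (atl T)) by (unfold atl; apply nodup_In, occurs_vars, Hl; simpl; auto).
    assert (Hpr : forall l, l <> [] -> Th T (Id (tup l)) -> forall v, In v l -> Th T (Id (Var v))).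
    { induction l as [|a l IH]; intros Hne Hth w Hw; [congruence|].
      destruct l as [|b l'].
      - destruct Hw as [<-|[]]. exact Hth.
      - assert (E1 : Id (Var a) = subst (sgl [Var a; tup (b :: l')]) (Imp (Var 0) (Var 0))) by reflexivity.
        assert (E2 : Id (tup (b :: l')) = subst (sgl [Var a; tup (b :: l')]) (Imp (Var 1) (Var 1))) by reflexivity.
        assert (EX : Id (tup (a :: b :: l')) = subst (sgl [Var a; tup (b :: l')]) (Imp (Imp (Var 0) (Var 1)) (Imp (Var 0) (Var 1)))) by reflexivity.
        destruct Hw as [<-|Hw].
        + rewrite E1. apply APP1 with (X := Imp (Imp (Var 0) (Var 1)) (Imp (Var 0) (Var 1))).
          * exact Lem_Projl.
          * vcases; simpl; auto.
          * rewrite <- EX. exact Hth.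
          * apply good_dnf. reflexivity.
        + apply IH; [discriminate| |exact Hw].
          rewrite E2. apply APP1 with (X := Imp (Imp (Var 0) (Var 1)) (Imp (Var 0) (Var 1))).
          * exact Lem_Projr.
          * vcases; simpl; auto.
          * rewrite <- EX. exact Hth.
          * rewrite <- E2. apply good_dnf. unfold DNF, Id. change (dnfree (tup (b :: l')) && dnfree (tup (b :: l')) = true). rewrite dnfree_tup. reflexivity. }
    apply (Hpr (atl T)); [apply atl_nonempty|apply Th_PT|exact Hv].
  - apply low_imp in Hl. apply good_imp in Hg.
    assert (E : Id (Imp F1 F2) = subst (sgl [F1; F2]) (Imp (Imp (Var 0) (Var 1)) (Imp (Var 0) (Var 1)))) by reflexivity.
    rewrite E. apply APP2 with (X1 := Id (Var 0)) (X2 := Id (Var 1)).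
    + exact Lem_Comb.
    + vcases; simpl; auto.
    + vcases; simpl; tauto.
    + apply IH1; tauto.
    + apply IH2; tauto.
    + simpl. apply good_imp; tauto.
    + rewrite <- E. apply good_imp. split; apply good_imp; tauto.
  - apply low_neg in Hl.
    assert (E : Id (Neg F) = subst (sgl [F]) (Imp (Neg (Var 0)) (Neg (Var 0)))) by reflexivity.
    rewrite E. apply APP1 with (X := Id (Var 0)).
    + exact Lem_NegId.
    + vcases; simpl; auto.
    + apply IH; auto. apply good_neg_inv; auto.
    + rewrite <- E. apply good_imp; auto.
Qed.

Lemma ID2 : forall T R F G, Der DNF (Imp (Id (Var 0)) (Imp (Id (Var 1)) R)) ->
  (forall v, occurs v R -> v = 0 \/ v = 1) -> low T F -> low T G -> good T F -> good T G ->
  good T (subst (sgl [F; G]) R) -> Th T (subst (sgl [F; G]) R).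
Proof.
  intros T R F G HL HR lF lG gF gG gR.
  apply APP2 with (X1 := Id (Var 0)) (X2 := Id (Var 1)); auto.
  - intros v Hv. simpl in Hv. destruct Hv as [[ ->| ->]|[[ ->| ->]|Hv]]; simpl; auto.
    destruct (HR v Hv) as [ ->| ->]; simpl; auto.
  - intros v Hv. simpl in Hv.
    assert (v = 0 \/ v = 1) by (destruct Hv as [[ ->| ->]|[[ ->| ->]|Hv]]; auto).
    destruct H as [ ->| ->]; simpl; auto.
  - apply IdAll; auto.
  - apply IdAll; auto.
  - simpl. apply good_imp; auto.
Qed.

Lemma K1rule : forall T Y h, Th T Y -> low T Y -> low T h -> good T Y -> good T h -> Th T (Imp h Y).
Proof.
  intros T Y h H lY lh gY gh.
  change (Imp h Y) with (subst (sgl [Y; h]) (Imp (Var 1) (Var 0))).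
  apply APP2 with (X1 := Var 0) (X2 := Id (Var 1)).
  - exact Lem_K1.
  - vcases; simpl; auto.
  - vcases; simpl; auto.
  - exact H.
  - apply IdAll; auto.
  - simpl. apply good_imp; auto.
  - simpl. apply good_imp; auto.
Qed.

Lemma Srule : forall T h a b, Th T (Imp h (Imp a b)) -> good T h -> good T a -> good T b ->
  Th T (Imp (Imp h a) (Imp h b)).
Proof.
  intros T h a b H gh ga gb.
  change (Imp (Imp h a) (Imp h b)) with (subst (sgl [h; a; b]) (Imp (Imp (Var 0) (Var 1)) (Imp (Var 0) (Var 2)))).
  apply APP1 with (X := Imp (Var 0) (Imp (Var 1) (Var 2))).
  - exact Lem_S.
  - vcases; simpl; auto.
  - exact H.
  - simpl. repeat (apply good_imp; split); auto.
Qed.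

Lemma S2thm : forall T h a b, low T h -> low T a -> low T b -> good T h -> good T a -> good T b ->
  Th T (Imp (Imp h (Imp a b)) (Imp (Imp h a) (Imp h b))).
Proof.
  intros T h a b lh la lb gh ga gb.
  set (Z := Imp h (Imp a b)).
  change (Imp Z (Imp (Imp h a) (Imp h b))) with (subst (sgl [Z; h; a; b]) (Imp (Var 0) (Imp (Imp (Var 1) (Var 2)) (Imp (Var 1) (Var 3))))).
  apply APP1 with (X := Imp (Var 0) (Imp (Var 1) (Imp (Var 2) (Var 3)))).
  - exact Lem_S2.
  - vcases; simpl; auto.
  - change (Th T (Id Z)). apply IdAll; unfold Z; [repeat (apply low_imp; split)|repeat (apply good_imp; split)]; auto.
  - simpl. unfold Z. repeat (apply good_imp; split); auto.
Qed.

Lemma Syl : forall T a b c, Th T (Imp a b) -> Th T (Imp b c) -> low T a -> low T b -> low T c ->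
  good T a -> good T b -> good T c -> Th T (Imp a c).
Proof.
  intros T a b c H1 H2 la lb lc ga gb gc.
  change (Imp a c) with (subst (sgl [a; b; c]) (Imp (Var 0) (Var 2))).
  apply APP2 with (X1 := Imp (Var 0) (Var 1)) (X2 := Imp (Var 1) (Var 2)).
  - exact (DerL1 DNF).
  - vcases; simpl; auto.
  - vcases; simpl; auto.
  - exact H1.
  - exact H2.
  - simpl. apply good_imp; auto.
  - simpl. apply good_imp; auto.
Qed.

Definition hyps (G : list form) (X : form) : form := fold_right Imp X G.
Definition Lits (T : form) (G : list form) := forall h, In h G -> low T h /\ good T h.

Lemma hyps_low : forall T G X, Lits T G -> low T X -> low T (hyps G X).
Proof.
  induction G as [|h G IH]; intros X HL HX; simpl; auto.
  apply low_imp. split; [apply HL; simpl; auto|apply IH; auto]. intros h' Hh'. apply HL. simpl; auto.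
Qed.
Lemma hyps_good : forall T G X, Lits T G -> good T X -> good T (hyps G X).
Proof.
  induction G as [|h G IH]; intros X HL HX; simpl; auto.
  apply good_imp. split; [apply HL; simpl; auto|apply IH; auto]. intros h' Hh'. apply HL. simpl; auto.
Qed.
Lemma Lits_tl : forall T h G, Lits T (h :: G) -> Lits T G.
Proof. intros T h G H h' Hh'. apply H. simpl. auto. Qed.

Ltac lg := repeat first
  [ assumption
  | apply hyps_low | apply hyps_good
  | apply low_imp; split | apply good_imp; split
  | eapply Lits_tl; eassumption ].

Lemma lift : forall T G X, Lits T G -> Th T X -> low T X -> good T X -> Th T (hyps G X).
Proof.
  induction G as [|h G IH]; intros X HL H lX gX; simpl; auto.
  assert (HL' := Lits_tl _ _ _ HL). destruct (HL h) as [lh gh]; [simpl; auto|].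
  apply K1rule; auto; lg.
Qed.

Lemma liftMP_thm : forall T G A B, Lits T G -> low T A -> low T B -> good T A -> good T B ->
  Th T (Imp (hyps G (Imp A B)) (Imp (hyps G A) (hyps G B))).
Proof.
  induction G as [|h G IH]; intros A B HL lA lB gA gB; simpl.
  - change (Th T (Id (Imp A B))). apply IdAll; lg.
  - assert (HL' := Lits_tl _ _ _ HL). destruct (HL h) as [lh gh]; [simpl; auto|].
    specialize (IH A B HL' lA lB gA gB).
    set (X1 := hyps G (Imp A B)) in *. set (X2 := hyps G A) in *. set (X3 := hyps G B) in *.
    assert (l1 : low T X1) by (unfold X1; lg). assert (l2 : low T X2) by (unfold X2; lg). assert (l3 : low T X3) by (unfold X3; lg).
    assert (g1 : good T X1) by (unfold X1; lg). assert (g2 : good T X2) by (unfold X2; lg). assert (g3 : good T X3) by (unfold X3; lg).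
    assert (H1 : Th T (Imp h (Imp X1 (Imp X2 X3)))) by (apply K1rule; auto; lg).
    assert (H2 : Th T (Imp (Imp h X1) (Imp h (Imp X2 X3)))) by (apply Srule; auto; lg).
    assert (H3 : Th T (Imp (Imp h (Imp X2 X3)) (Imp (Imp h X2) (Imp h X3)))) by (apply S2thm; auto).
    eapply Syl; [exact H2|exact H3| | | | | |]; lg.
Qed.

Lemma liftMP : forall T G A B, Lits T G -> low T A -> low T B -> good T A -> good T B ->
  Th T (hyps G (Imp A B)) -> Th T (hyps G A) -> Th T (hyps G B).
Proof.
  intros T G A B HL lA lB gA gB H1 H2.
  assert (H := liftMP_thm T G A B HL lA lB gA gB).
  apply MP with (A := hyps G A); [|auto|lg|lg].
  apply MP with (A := hyps G (Imp A B)); auto; lg.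
Qed.

Lemma lift1 : forall T G X Y, Lits T G -> low T X -> low T Y -> good T X -> good T Y ->
  Th T (Imp X Y) -> Th T (hyps G X) -> Th T (hyps G Y).
Proof.
  intros. apply liftMP with (A := X); auto. apply lift; auto; lg.
Qed.

Lemma lift2 : forall T G X Y Z, Lits T G -> low T X -> low T Y -> low T Z -> good T X -> good T Y -> good T Z ->
  Th T (Imp X (Imp Y Z)) -> Th T (hyps G X) -> Th T (hyps G Y) -> Th T (hyps G Z).
Proof.
  intros. apply liftMP with (A := Y); auto.
  apply liftMP with (A := X); auto; lg. apply lift; auto; lg.
Qed.

Lemma K2thm : forall T y g, low T y -> low T g -> good T y -> good T g -> Th T (Imp y (Imp g y)).
Proof.
  intros. change (Imp y (Imp g y)) with (subst (sgl [y; g]) (Imp (Var 0) (Imp (Var 1) (Var 0)))).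
  apply ID2; auto.
  - exact Lem_K2.
  - vcases; auto.
  - simpl. lg.
Qed.

Lemma hyp_self : forall T G l, Lits T G -> low T l -> good T l -> Th T (Imp l (hyps G l)).
Proof.
  induction G as [|g G IH]; intros l HL ll gl; simpl.
  - change (Th T (Id l)). apply IdAll; auto.
  - assert (HL' := Lits_tl _ _ _ HL). destruct (HL g) as [lg0 gg]; [simpl; auto|].
    specialize (IH l HL' ll gl).
    eapply Syl; [exact IH|apply K2thm| | | | | |]; lg.
Qed.

Lemma hyp_in : forall T G l, Lits T G -> In l G -> Th T (hyps G l).
Proof.
  induction G as [|h G IH]; intros l HL Hin; [destruct Hin|].
  assert (HL' := Lits_tl _ _ _ HL). destruct (HL h) as [lh gh]; [simpl; auto|].
  destruct (HL l) as [ll gl]; auto.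
  simpl. destruct (form_eq_dec h l) as [<-|Hne].
  - apply hyp_self; auto.
  - destruct Hin as [E|Hin]; [congruence|].
    apply K1rule; auto; lg.
Qed.

Fixpoint eval (r : nat -> bool) (f : form) : bool :=
  match f with
  | Var v => r v
  | Imp a b => implb (eval r a) (eval r b)
  | Neg a => negb (eval r a)
  end.

Definition neg' (C : form) : form := match C with Neg D => D | _ => Neg C end.
Definition rep (r : nat -> bool) (C : form) : form := if eval r C then C else neg' C.

Lemma rep_lg : forall T r C, sub C T -> low T (rep r C) /\ good T (rep r C).
Proof.
  intros T r C H. unfold rep. destruct (eval r C).
  - split; [apply low_sub|apply good_sub]; auto.
  - destruct C as [v|a b|a]; simpl.
    + split; [apply low_neg, low_sub; auto|apply good_neg; [apply good_sub; auto|intros q; discriminate]].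
    + split; [apply low_neg, low_sub; auto|apply good_neg; [apply good_sub; auto|intros q; discriminate]].
    + apply sub_neg in H. split; [apply low_sub|apply good_sub]; auto.
Qed.

Definition Gam (T : form) (r : nat -> bool) := map (fun v => rep r (Var v)) (atl T).

Lemma Lits_Gam : forall T r l, (forall v, In v l -> occurs v T) -> Lits T (map (fun v => rep r (Var v)) l).
Proof.
  intros T r l Hl h Hh. apply in_map_iff in Hh. destruct Hh as [v [<- Hv]].
  apply rep_lg. specialize (Hl v Hv). clear -Hl. induction T; simpl in *; auto.
  - destruct Hl as [Hl|Hl]; right; [left|right]; auto.
Qed.

Lemma atl_occ : forall T v, In v (atl T) -> occurs v T.
Proof. intros. unfold atl in H. apply nodup_In in H. apply occurs_vars. auto. Qed.

Lemma low_neg2 : forall T a, low T a -> low T (Neg a).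
Proof. intros. apply low_neg. auto. Qed.
Ltac side := repeat first [assumption | apply low_imp; split | apply good_imp; split | apply low_neg2
   | (apply good_neg; [|intros ?q; discriminate]) ].

Lemma kalmar : forall T r C, sub C T -> Th T (hyps (Gam T r) (rep r C)).
Proof.
  intros T r. assert (HL : Lits T (Gam T r)) by (apply Lits_Gam; apply atl_occ).
  induction C as [v|D IHD E IHE|D IHD]; intros HC.
  - apply hyp_in; auto. unfold Gam. apply in_map_iff. exists v. split; auto.
    unfold atl. apply nodup_In, occurs_vars. eapply sub_occurs; eauto. simpl; auto.
  - assert (sD : sub D T) by (eapply sub_imp_l; eauto). assert (sE : sub E T) by (eapply sub_imp_r; eauto).
    specialize (IHD sD). specialize (IHE sE).
    destruct (rep_lg T r D sD) as [lD gD]. destruct (rep_lg T r E sE) as [lE gE].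
    assert (lD0 : low T D) by (apply low_sub; auto). assert (lE0 : low T E) by (apply low_sub; auto).
    assert (gD0 : good T D) by (apply good_sub; auto). assert (gE0 : good T E) by (apply good_sub; auto).
    assert (lC : low T (Imp D E)) by (apply low_sub; auto). assert (gC : good T (Imp D E)) by (apply good_sub; auto).
    unfold rep in *. simpl.
    destruct (eval r E) eqn:EE.
    + rewrite implb_true_r. 
      apply (lift1 T (Gam T r) E (Imp D E)); [exact HL|side..|apply K2thm; auto|exact IHE].
    + destruct (eval r D) eqn:ED; simpl.
      *
        destruct E as [w|E1 E2|G]; simpl in *.
        -- apply (lift2 T (Gam T r) D (Neg (Var w)) (Neg (Imp D (Var w)))); [exact HL|side|side|side|side|side|side| |exact IHD|exact IHE].
           change (Imp D (Imp (Neg (Var w)) (Neg (Imp D (Var w))))) with (subst (sgl [D; Var w]) (Imp (Var 0) (Imp (Neg (Var 1)) (Neg (Imp (Var 0) (Var 1)))))).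
              apply ID2; auto; [exact Lem_Ke|vcases; auto|simpl; side].
        -- apply (lift2 T (Gam T r) D (Neg (Imp E1 E2)) (Neg (Imp D (Imp E1 E2)))); [exact HL|side|side|side|side|side|side| |exact IHD|exact IHE].
           change (Imp D (Imp (Neg (Imp E1 E2)) (Neg (Imp D (Imp E1 E2))))) with (subst (sgl [D; Imp E1 E2]) (Imp (Var 0) (Imp (Neg (Var 1)) (Neg (Imp (Var 0) (Var 1)))))).
              apply ID2; auto; [exact Lem_Ke|vcases; auto|simpl; side].
        -- assert (lG : low T G) by (apply low_neg; auto). assert (gG : good T G) by (eapply good_neg_inv; eauto).
           apply (lift2 T (Gam T r) D G (Neg (Imp D (Neg G)))); [exact HL|side|side|side|side|side|side| |exact IHD|exact IHE].
           change (Imp D (Imp G (Neg (Imp D (Neg G))))) with (subst (sgl [D; G]) (Imp (Var 0) (Imp (Var 1) (Neg (Imp (Var 0) (Neg (Var 1))))))).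
              apply ID2; auto; [exact Lem_Kd|vcases; auto|simpl; side].
      *
        destruct D as [w|D1 D2|G]; simpl in *.
        -- apply (lift1 T (Gam T r) (Neg (Var w)) (Imp (Var w) E)); [exact HL|side|side|side|side| |exact IHD].
           change (Imp (Neg (Var w)) (Imp (Var w) E)) with (subst (sgl [Var w; E]) (Imp (Neg (Var 0)) (Imp (Var 0) (Var 1)))).
           apply ID2; auto; [exact Lem_Kc|vcases; auto|simpl; side].
        -- apply (lift1 T (Gam T r) (Neg (Imp D1 D2)) (Imp (Imp D1 D2) E)); [exact HL|side|side|side|side| |exact IHD].
           change (Imp (Neg (Imp D1 D2)) (Imp (Imp D1 D2) E)) with (subst (sgl [Imp D1 D2; E]) (Imp (Neg (Var 0)) (Imp (Var 0) (Var 1)))).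
           apply ID2; auto; [exact Lem_Kc|vcases; auto|simpl; side].
        -- assert (lG : low T G) by (apply low_neg; auto). assert (gG : good T G) by (eapply good_neg_inv; eauto).
           apply (lift1 T (Gam T r) G (Imp (Neg G) E)); [exact HL|side|side|side|side| |exact IHD].
           change (Imp G (Imp (Neg G) E)) with (subst (sgl [G; E]) (Imp (Var 0) (Imp (Neg (Var 0)) (Var 1)))).
           apply ID2; auto; [exact Lem_L3id|vcases; auto|simpl; side].
  - assert (sD : sub D T) by (eapply sub_neg; eauto). specialize (IHD sD).
    unfold rep in *. simpl. destruct (eval r D) eqn:ED; simpl; auto.
    destruct D as [w|D1 D2|E]; simpl in *; auto.
    (* C = Neg (Neg E), E true *)
    assert (sE : sub E T) by (eapply sub_neg; eauto).
    assert (lE : low T E) by (apply low_sub; auto). assert (gE : good T E) by (apply good_sub; auto).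
    assert (gC : good T (Neg (Neg E))) by (apply good_sub; auto).
    apply (lift1 T (Gam T r) E (Neg (Neg E))); [exact HL|side|side|side|side| |exact IHD].
    + change (Imp E (Neg (Neg E))) with (subst (sgl [Neg E; E]) (Imp (Var 1) (Neg (Var 0)))).
      apply APP1 with (X := Imp (Var 0) (Neg (Var 1))).
      * exact Lem_DNl.
      * vcases; simpl; auto.
      * change (Th T (Id (Neg E))). apply IdAll; [apply low_neg; auto|apply good_neg_inv; auto].
      * simpl. lg.
Qed.

Definition taut (F : form) := forall r, eval r F = true.

Lemma hyps_app : forall l1 l2 X, hyps (l1 ++ l2) X = hyps l1 (hyps l2 X).
Proof. intros. unfold hyps. apply fold_right_app. Qed.

Lemma Th_of_taut : forall T, taut T -> Th T T.
Proof.
  intros T HT.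
  assert (Hocc : forall l, (forall v, In v l -> In v (atl T)) -> forall r, Lits T (map (fun v => rep r (Var v)) l)).
  { intros l Hl r. apply Lits_Gam. intros v Hv. apply atl_occ. auto. }
  assert (gT : good T T) by (apply good_sub, sub_refl).
  assert (lT : low T T) by (apply low_sub, sub_refl).
  assert (Main : forall l2 l1, l1 ++ l2 = atl T -> forall r, Th T (hyps (map (fun v => rep r (Var v)) l1) T)).
  { induction l2 as [|v l2 IH]; intros l1 E r.
    - rewrite app_nil_r in E. subst l1. pose proof (kalmar T r T (sub_refl T)) as K.
      unfold Gam in K. replace (rep r T) with T in K by (unfold rep; rewrite HT; auto). exact K.
    - assert (E' : (l1 ++ [v]) ++ l2 = atl T) by (rewrite <- app_assoc; auto).
      assert (Hnd : NoDup (l1 ++ v :: l2)) by (rewrite E; apply NoDup_nodup).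
      assert (Hv : ~ In v l1).
      { intros Hin. apply NoDup_remove_2 in Hnd. apply Hnd. apply in_or_app. auto. }
      assert (Hvat : In v (atl T)) by (rewrite <- E; apply in_or_app; simpl; auto).
      assert (Hl1 : forall w, In w l1 -> In w (atl T)) by (intros w Hw; rewrite <- E; apply in_or_app; auto).
      set (r1 := fun w => if Nat.eqb w v then true else r w).
      set (r0 := fun w => if Nat.eqb w v then false else r w).
      assert (M1 : forall rr, (forall w, In w l1 -> rr w = r w) ->
                map (fun w => rep rr (Var w)) l1 = map (fun w => rep r (Var w)) l1).
      { intros rr Hrr. apply map_ext_in. intros w Hw. unfold rep. simpl. rewrite Hrr; auto. }
      assert (A1 := IH (l1 ++ [v]) E' r1). rewrite map_app, hyps_app in A1. simpl in A1.
      assert (A0 := IH (l1 ++ [v]) E' r0). rewrite map_app, hyps_app in A0. simpl in A0.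
      rewrite M1 in A1 by (intros w Hw; unfold r1; destruct (Nat.eqb_spec w v); [subst; contradiction|auto]).
      rewrite M1 in A0 by (intros w Hw; unfold r0; destruct (Nat.eqb_spec w v); [subst; contradiction|auto]).
      unfold rep in A1, A0. simpl in A1, A0. unfold r1, r0 in A1, A0. rewrite Nat.eqb_refl in A1, A0. simpl in A0.
      assert (HL := Hocc l1 Hl1 r).
      assert (lv : low T (Var v)) by (intros w Hw; simpl in Hw; subst; apply atl_occ; auto).
      apply (lift2 T _ (Imp (Var v) T) (Imp (Neg (Var v)) T) T); [exact HL|side|side|side|side|side|side| |exact A1|exact A0].
      + apply good_var.
      + apply good_var.
      + change (Imp (Imp (Var v) T) (Imp (Imp (Neg (Var v)) T) T)) with (subst (sgl [Var v; T]) (Imp (Imp (Var 0) (Var 1)) (Imp (Imp (Neg (Var 0)) (Var 1)) (Var 1)))).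
        apply ID2; auto; [exact Lem_Elim|vcases; auto|apply good_var|simpl; side; apply good_var]. }
  exact (Main (atl T) [] eq_refl (fun _ => true)).
Qed.

Lemma Der_of_taut : forall T, taut T -> Der (good T) T.
Proof.
  intros T HT. assert (H := Th_of_taut T HT). unfold Th in H.
  eapply (Der_match2 _ (PT T) T (Imp (Var 0) (Var 0)) (sg1 0 (tup (atl T)))).
  - exact H.
  - exact (Der_mono _ _ _ Lem_Id0 (fun x h => good_dnf T x h)).
  - reflexivity.
  - apply good_sub, sub_refl.
Qed.

Lemma eval_subst : forall r s F, eval r (subst s F) = eval (fun v => eval r (s v)) F.
Proof. induction F; simpl; congruence. Qed.

Lemma taut_variant : forall a b, taut a -> variant a b -> taut b.
Proof.
  intros a b H [rr [_ E]] r. subst b. rewrite rename_subst, eval_subst. apply H.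
Qed.

Lemma taut_AX : forall a, In a AX -> taut a.
Proof.
  intros a Ha r. unfold AX in Ha. simpl in Ha.
  destruct Ha as [<-|[<-|[<-|[]]]]; unfold L1, L2, L3, x, y, z; simpl;
  destruct (r 0); destruct (r 1); destruct (r 2); reflexivity.
Qed.

Lemma cd_sound : forall P Q D, taut P -> taut Q -> cd P Q D -> taut D.
Proof.
  intros P Q D HP HQ [A [B [Q' [s [H1 [H2 [H3 [[H4 _] H5]]]]]]]].
  assert (HAB := taut_variant _ _ HP H1).
  assert (HQ' := taut_variant _ _ HQ H2).
  eapply taut_variant; [|exact H5].
  intros r. rewrite eval_subst.
  set (r' := fun v => eval r (s v)).
  assert (E : eval r' A = true).
  { unfold r'. rewrite <- eval_subst. unfold unifier in H4. rewrite H4. rewrite eval_subst. apply HQ'. }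
  specialize (HAB r'). simpl in HAB. rewrite E in HAB. exact HAB.
Qed.

Lemma proof_sound : forall pf B, is_proof AX pf B -> taut B.
Proof.
  intros pf B [Hne [Hv Hl]].
  assert (H : forall k, k < length pf -> taut (fst (nth k pf (Var 0, JAx)))).
  { intros k. induction k as [k IH] using (well_founded_induction lt_wf). intros Hk.
    specialize (Hv k Hk). unfold valid_line in Hv.
    destruct (nth k pf (Var 0, JAx)) as [f [|i j]] eqn:E; simpl.
    - destruct Hv as [a [Ha Hva]]. eapply taut_variant; eauto. apply taut_AX; auto.
    - destruct Hv as [Hi [Hj Hc]]. exact (cd_sound _ _ _ (IH i Hi ltac:(lia)) (IH j Hj ltac:(lia)) Hc). }
  rewrite <- Hl. rewrite last_nth. apply H. destruct pf; [congruence|simpl; lia].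
Qed.

Fixpoint fsize (f : form) : nat :=
  match f with Var _ => 1 | Imp a b => S (fsize a + fsize b) | Neg a => S (fsize a) end.

Lemma eval_star : forall S r f, eval r (star S f) = eval r f.
Proof.
  intros S r.
  assert (forall n f, fsize f <= n -> eval r (star S f) = eval r f).
  { induction n as [|n IH]; intros f Hf; [destruct f; simpl in Hf; lia|].
    destruct f as [v|a b|a]; simpl in Hf.
    - reflexivity.
    - cbn [star eval]. rewrite (IH a) by lia. rewrite (IH b) by lia. reflexivity.
    - destruct a as [w|a1 a2|q].
      + reflexivity.
      + change (star S (Neg (Imp a1 a2))) with (Neg (star S (Imp a1 a2))). cbn [eval]. rewrite (IH (Imp a1 a2)) by (simpl in *; lia). reflexivity.
      + change (star S (Neg (Neg q))) with (if in_dec form_eq_dec (Neg (Neg q)) S then star S q else Neg (star S (Neg q))).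
        destruct (in_dec form_eq_dec (Neg (Neg q)) S).
        * rewrite (IH q) by (simpl in *; lia). simpl. destruct (eval r q); reflexivity.
        * cbn [eval]. rewrite (IH (Neg q)) by (simpl in *; lia). reflexivity. }
  intros f. apply (H (fsize f)). lia.
Qed.

Theorem theorem5 : strong_dn_elim [L1; L2; L3].
Proof.
  intros B S [pf Hpf] Hsel.
  assert (HB : taut B) by (eapply proof_sound; exact Hpf).
  assert (HT : taut (star S B)) by (intros r; rewrite eval_star; apply HB).
  destruct (Der_proof _ _ (Der_of_taut _ HT)) as [pf' [Hne [Hv [Hl Hd]]]].
  exists pf'. split.
  - split; [auto|split; [exact Hv|exact Hl]].
  - intros D [i [j Hin]] q Hq. exists (Neg (Neg q)). split.
    + apply (Hd D i j Hin). exact Hq.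
    + apply variant_refl.
Qed.
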